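(* There exist smooth real hypersurfaces $M$ in $\mathbb{C}^4$ with $0\in M$ for which $\Delta_2(M,0)<\operatorname{gen.val}_{S\in G^3_0}\Delta_1(M\cap S,0)$. For instance, for $M=\{\operatorname{Re}(z_4)+|z_1^3-z_3z_2|^2+|z_2|^4=0\}$ one has $\Delta_2(M,0)=6$ while the generic value of $\Delta_1(M\cap S,0)$ over $S\in G^3_0$ is $8$.
   Context: For the germ $(M,p)$ of a smooth real hypersurface in $\mathbb{C}^n$, let $r_p$ be a generator of the ideal of germs at $p$ of smooth functions vanishing on $M$. $\Gamma_p$ is the set of non-constant germs of holomorphic maps $z\colon(\mathbb{C},0)\to(\mathbb{C}^n,p)$, $v(z)$ the order of vanishing of $z-p$ at $0$ and $v(r_p\circ z)$ the order of vanishing at $0$ of the smooth function $r_p\circ z$. D'Angelo's 1-type is $\Delta_1(M,p)=\sup_{z\in\Gamma_p}\frac{v(r_p\circ z)}{v(z)}$. For $q\in\{1,\dots,n\}$, let $G^{n-q+1}_p$ be the set of $(n-q+1)$-dimensional complex affine subspaces of $\mathbb{C}^n$ through $p$; $\Delta_q(M,p)=\inf_{S\in G^{n-q+1}_p}\Delta_1(M\cap S,p)$, where $M\cap S$ is regarded as a germ of real hypersurface in $S\cong\mathbb{C}^{n-q+1}$. The generic value over $S\in G^{n-q+1}_p$ of a quantity is the value it takes for all $S$ in some non-empty Zariski open subset of $G^{n-q+1}_p$. *)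

(* Defs.v *)
From Stdlib Require Import Reals List.
Open Scope R_scope.

Definition C : Type := (R * R)%type.
Definition C0 : C := (0, 0).
Definition Cadd (x y : C) : C := (fst x + fst y, snd x + snd y).
Definition Copp (x : C) : C := (- fst x, - snd x).
Definition Csub (x y : C) : C := Cadd x (Copp y).
Definition Cmul (x y : C) : C :=
  (fst x * fst y - snd x * snd y, fst x * snd y + snd x * fst y).
Fixpoint Cpow (x : C) (n : nat) : C :=
  match n with O => (1, 0) | S n' => Cmul x (Cpow x n') end.
Definition Cnorm2 (x : C) : R := fst x ^ 2 + snd x ^ 2.
Definition Cnorm (x : C) : R := sqrt (Cnorm2 x).

Record C4 : Type := mkC4 { c1 : C; c2 : C; c3 : C; c4 : C }.
Definition C4zero : C4 := mkC4 C0 C0 C0 C0.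
Definition C4norm (v : C4) : R :=
  Cnorm (c1 v) + Cnorm (c2 v) + Cnorm (c3 v) + Cnorm (c4 v).

Definition lin (a v : C4) : C :=
  Cadd (Cadd (Cmul (c1 a) (c1 v)) (Cmul (c2 a) (c2 v)))
       (Cadd (Cmul (c3 a) (c3 v)) (Cmul (c4 a) (c4 v))).

Definition C_differentiable_at (f : C -> C) (t : C) : Prop :=
  exists d : C, forall eps, 0 < eps -> exists delta, 0 < delta /\
    forall h, Cnorm h < delta ->
      Cnorm (Csub (Csub (f (Cadd t h)) (f t)) (Cmul d h)) <= eps * Cnorm h.

Definition holomorphic_near0 (z : C -> C4) : Prop :=
  exists rho, 0 < rho /\ forall t, Cnorm t < rho ->
    C_differentiable_at (fun s => c1 (z s)) t /\
    C_differentiable_at (fun s => c2 (z s)) t /\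
    C_differentiable_at (fun s => c3 (z s)) t /\
    C_differentiable_at (fun s => c4 (z s)) t.

Definition Gamma0 (z : C -> C4) : Prop :=
  holomorphic_near0 z /\ z C0 = C4zero /\
  ~ (exists delta, 0 < delta /\ forall t, Cnorm t < delta -> z t = C4zero).

(** * Order of vanishing at 0.
    [ord_ge f k] : f(t) = O(|t|^k) as t -> 0; for a smooth (resp. holomorphic)
    function this holds iff its order of vanishing at 0 is >= k. *)
Definition ord_ge (f : C -> R) (k : nat) : Prop :=
  exists K delta, 0 < delta /\
    forall t, Cnorm t < delta -> Rabs (f t) <= K * Cnorm t ^ k.

Definition vz_eq (z : C -> C4) (m : nat) : Prop :=
  ord_ge (fun t => C4norm (z t)) m /\ ~ ord_ge (fun t => C4norm (z t)) (S m).

(** * D'Angelo 1-type, restricted to germs of curves satisfying [inS].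
    Delta1 = sup { v(r o z) / v(z) } ; we state "sup >= a" and "sup <= a". *)
Definition Delta1_ge (r : C4 -> R) (inS : (C -> C4) -> Prop) (a : R) : Prop :=
  forall eps, 0 < eps -> exists (z : C -> C4) (m k : nat),
    Gamma0 z /\ inS z /\ vz_eq z m /\ ord_ge (fun t => r (z t)) k /\
    INR k / INR m > a - eps.

Definition Delta1_le (r : C4 -> R) (inS : (C -> C4) -> Prop) (a : R) : Prop :=
  forall (z : C -> C4) (m k : nat),
    Gamma0 z -> inS z -> vz_eq z m -> ord_ge (fun t => r (z t)) k ->
    INR k <= a * INR m.

Definition Delta1_eq r inS a : Prop := Delta1_ge r inS a /\ Delta1_le r inS a.

(** A germ lies in the complex hyperplane S_a = ker (lin a) (a <> 0).
    Hyperplanes through 0 are exactly the elements of G^3_0 in C^4. *)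
Definition in_hyp (a : C4) (z : C -> C4) : Prop :=
  exists delta, 0 < delta /\ forall t, Cnorm t < delta -> lin a (z t) = C0.

(** Delta_2(M,0) = inf_{S in G^3_0} Delta_1(M cap S, 0) = a *)
Definition Delta2_eq (r : C4 -> R) (a : R) : Prop :=
  (forall h : C4, h <> C4zero -> Delta1_ge r (in_hyp h) a) /\
  (forall eps, 0 < eps -> exists h : C4, h <> C4zero /\
      Delta1_le r (in_hyp h) (a + eps)).

Definition poly4 : Type := list (C * (nat * nat * nat * nat)).
Definition mono_eval (e : nat * nat * nat * nat) (v : C4) : C :=
  match e with (e1, e2, e3, e4) =>
    Cmul (Cmul (Cpow (c1 v) e1) (Cpow (c2 v) e2))
         (Cmul (Cpow (c3 v) e3) (Cpow (c4 v) e4)) end.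
Definition poly4_eval (P : poly4) (v : C4) : C :=
  fold_right (fun m acc => Cadd (Cmul (fst m) (mono_eval (snd m) v)) acc) C0 P.

(** Generic value of Delta_1(M cap S,0) over S in G^3_0 is a:
    it equals a for all S_h with h in a nonempty Zariski open set {P <> 0}. *)
Definition generic_Delta1_eq (r : C4 -> R) (a : R) : Prop :=
  exists P : poly4, (exists v, poly4_eval P v <> C0) /\
    forall h : C4, h <> C4zero -> poly4_eval P h <> C0 ->
      Delta1_eq r (in_hyp h) a.

Definition r_ex (v : C4) : R :=
  fst (c4 v) + Cnorm2 (Csub (Cpow (c1 v) 3) (Cmul (c3 v) (c2 v)))
  + (Cnorm2 (c2 v)) ^ 2.

(* Main.v *)
Require Import Defs.
From Stdlib Require Import Reals Lra Lia Psatz.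
From Coquelicot Require Import Coquelicot.
Open Scope R_scope.

Lemma Cmod_fst (z : C) : Rabs (fst z) <= Cmod z.
Proof. pose proof (Rmax_Cmod z). pose proof (Rmax_l (Rabs (fst z)) (Rabs (snd z))). lra. Qed.
Lemma Cmod_snd (z : C) : Rabs (snd z) <= Cmod z.
Proof. pose proof (Rmax_Cmod z). pose proof (Rmax_r (Rabs (fst z)) (Rabs (snd z))). lra. Qed.
Lemma Cmod_le_sum (z : C) : Cmod z <= Rabs (fst z) + Rabs (snd z).
Proof.
  destruct z as [x y]. unfold Cmod; simpl.
  apply Rsqr_incr_0_var.
  - rewrite Rsqr_sqrt. 2: nra. unfold Rsqr.
    pose proof (Rabs_pos x). pose proof (Rabs_pos y).
    replace (x*(x*1)) with (Rabs x * Rabs x). 2:{ rewrite <- Rabs_mult. rewrite Rabs_right; nra. }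
    replace (y*(y*1)) with (Rabs y * Rabs y). 2:{ rewrite <- Rabs_mult. rewrite Rabs_right; nra. }
    nra.
  - pose proof (Rabs_pos x). pose proof (Rabs_pos y). lra.
Qed.
Lemma Cmod_ge0 (z : C) : 0 <= Cmod z.
Proof. apply Cmod_ge_0. Qed.

Definition rcont (g : R -> C) (x : R) : Prop :=
  forall eps, 0 < eps -> exists delta, 0 < delta /\
    forall y, Rabs (y - x) < delta -> Cmod (g y - g x)%C < eps.

Lemma rcont_real_cont (f : R -> R) x :
  (forall eps, 0 < eps -> exists delta, 0 < delta /\
    forall y, Rabs (y - x) < delta -> Rabs (f y - f x) < eps) ->
  continuous f x.
Proof.
  intros H. apply continuity_pt_filterlim.
  unfold continuity_pt, continue_in, limit1_in, limit_in.
  intros eps Heps. destruct (H eps Heps) as [d [Hd Hy]].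
  exists d. split; auto. intros y [_ Hy2]. simpl in *. unfold R_dist in *. apply Hy. exact Hy2.
Qed.

Lemma rcont_fst g x : rcont g x -> continuous (fun y => fst (g y)) x.
Proof.
  intros H. apply rcont_real_cont. intros eps Heps.
  destruct (H eps Heps) as [d [Hd Hy]]. exists d; split; auto.
  intros y Hyx. specialize (Hy y Hyx).
  pose proof (Cmod_fst (g y - g x)%C). simpl in H0. unfold Rminus. lra.
Qed.
Lemma rcont_snd g x : rcont g x -> continuous (fun y => snd (g y)) x.
Proof.
  intros H. apply rcont_real_cont. intros eps Heps.
  destruct (H eps Heps) as [d [Hd Hy]]. exists d; split; auto.
  intros y Hyx. specialize (Hy y Hyx).
  pose proof (Cmod_snd (g y - g x)%C). simpl in H0. unfold Rminus. lra.
Qed.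

Definition rcont_on (g : R -> C) a b := forall x, Rmin a b <= x <= Rmax a b -> rcont g x.

Lemma ex_fst g a b : rcont_on g a b -> ex_RInt (fun y => fst (g y)) a b.
Proof. intros H. apply (ex_RInt_continuous (V:=R_CompleteNormedModule)). intros z Hz. apply rcont_fst, H, Hz. Qed.
Lemma ex_snd g a b : rcont_on g a b -> ex_RInt (fun y => snd (g y)) a b.
Proof. intros H. apply (ex_RInt_continuous (V:=R_CompleteNormedModule)). intros z Hz. apply rcont_snd, H, Hz. Qed.

Definition CInt (g : R -> C) (a b : R) : C :=
  (RInt (fun x => fst (g x)) a b, RInt (fun x => snd (g x)) a b).

Lemma CInt_plus g1 g2 a b : rcont_on g1 a b -> rcont_on g2 a b ->
  CInt (fun x => g1 x + g2 x)%C a b = (CInt g1 a b + CInt g2 a b)%C.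
Proof.
  intros H1 H2. unfold CInt. simpl.
  rewrite (RInt_plus (V:=R_CompleteNormedModule) (fun x => fst (g1 x)) (fun x => fst (g2 x))) by (apply ex_fst; auto).
  rewrite (RInt_plus (V:=R_CompleteNormedModule) (fun x => snd (g1 x)) (fun x => snd (g2 x))) by (apply ex_snd; auto).
  reflexivity.
Qed.

Lemma CInt_cmul c g a b : rcont_on g a b ->
  CInt (fun x => c * g x)%C a b = (c * CInt g a b)%C.
Proof.
  intros H. unfold CInt, Cmult. simpl.
  pose proof (ex_fst g a b H) as [I1 E1]. pose proof (ex_snd g a b H) as [I2 E2].
  rewrite (is_RInt_unique _ _ _ I1 E1), (is_RInt_unique _ _ _ I2 E2).
  f_equal; apply is_RInt_unique.
  - exact (is_RInt_minus (V:=R_NormedModule) _ _ a b _ _ (is_RInt_scal _ a b (fst c) _ E1) (is_RInt_scal _ a b (snd c) _ E2)).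
  - exact (is_RInt_plus (V:=R_NormedModule) _ _ a b _ _ (is_RInt_scal _ a b (fst c) _ E2) (is_RInt_scal _ a b (snd c) _ E1)).
Qed.

Lemma CInt_const c a b : CInt (fun _ => c) a b = (RtoC (b - a) * c)%C.
Proof.
  unfold CInt. rewrite !(RInt_const (V:=R_CompleteNormedModule)).
  unfold RtoC, Cmult; simpl. unfold scal; simpl. unfold mult; simpl. f_equal; ring.
Qed.

Lemma CInt_chasles g a b c : rcont_on g a b -> rcont_on g b c ->
  (CInt g a b + CInt g b c)%C = CInt g a c.
Proof.
  intros H1 H2. unfold CInt, Cplus; simpl. f_equal.
  - apply (RInt_Chasles (V:=R_CompleteNormedModule)); apply ex_fst; auto.
  - apply (RInt_Chasles (V:=R_CompleteNormedModule)); apply ex_snd; auto.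
Qed.

Lemma CInt_comp_lin g (u v a b : R) : rcont_on g (u*a+v) (u*b+v) ->
  CInt (fun y => Cmult (RtoC u) (g (u * y + v))) a b = CInt g (u*a+v) (u*b+v).
Proof.
  intros H. unfold CInt. simpl. f_equal.
  - rewrite <- (RInt_comp_lin (V:=R_CompleteNormedModule) (fun x => fst (g x))) by (apply ex_fst; auto).
    apply RInt_ext. intros x _. unfold scal; simpl; unfold mult; simpl. ring.
  - rewrite <- (RInt_comp_lin (V:=R_CompleteNormedModule) (fun x => snd (g x))) by (apply ex_snd; auto).
    apply RInt_ext. intros x _. unfold scal; simpl; unfold mult; simpl. ring.
Qed.

Lemma CInt_bound g a b M : a <= b -> rcont_on g a b ->
  (forall x, a <= x <= b -> Cmod (g x) <= M) ->
  Cmod (CInt g a b) <= 2 * (b - a) * M.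
Proof.
  intros Hab H HM. eapply Rle_trans. apply Cmod_le_sum. unfold CInt; simpl.
  assert (A1 : Rabs (RInt (fun x => fst (g x)) a b) <= (b - a) * M).
  { apply abs_RInt_le_const; auto. apply ex_fst; auto.
    intros t Ht. eapply Rle_trans. apply Cmod_fst. auto. }
  assert (A2 : Rabs (RInt (fun x => snd (g x)) a b) <= (b - a) * M).
  { apply abs_RInt_le_const; auto. apply ex_snd; auto.
    intros t Ht. eapply Rle_trans. apply Cmod_snd. auto. }
  lra.
Qed.

Definition rdiff (G : R -> C) (x : R) (v : C) : Prop :=
  forall eps, 0 < eps -> exists delta, 0 < delta /\
    forall h, Rabs h < delta -> Cmod (Cminus (Cminus (G (x + h)) (G x)) (Cmult (RtoC h) v)) <= eps * Rabs h.

Lemma rdiff_fst G x v : rdiff G x v -> derivable_pt_lim (fun y => fst (G y)) x (fst v).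
Proof.
  intros H eps Heps. destruct (H (eps/2) ltac:(lra)) as [d [Hd Hh]].
  exists (mkposreal d Hd). intros h Hh0 Hhd. simpl in Hhd.
  specialize (Hh h Hhd).
  pose proof (Cmod_fst (Cminus (Cminus (G (x + h)) (G x)) (Cmult (RtoC h) v))) as F.
  simpl in F.
  replace ((fst (G (x + h)) - fst (G x)) / h - fst v) with
    ((fst (G (x + h)) + - fst (G x) + - (h * fst v - 0 * snd v)) / h) by (field; auto).
  unfold Rdiv. rewrite Rabs_mult. rewrite Rabs_inv.
  pose proof (Rabs_pos_lt h Hh0).
  apply (Rmult_lt_reg_r (Rabs h)); auto. rewrite Rmult_assoc, Rinv_l by lra. nra.
Qed.
Lemma rdiff_snd G x v : rdiff G x v -> derivable_pt_lim (fun y => snd (G y)) x (snd v).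
Proof.
  intros H eps Heps. destruct (H (eps/2) ltac:(lra)) as [d [Hd Hh]].
  exists (mkposreal d Hd). intros h Hh0 Hhd. simpl in Hhd.
  specialize (Hh h Hhd).
  pose proof (Cmod_snd (Cminus (Cminus (G (x + h)) (G x)) (Cmult (RtoC h) v))) as F.
  simpl in F.
  replace ((snd (G (x + h)) - snd (G x)) / h - snd v) with
    ((snd (G (x + h)) + - snd (G x) + - (h * snd v + 0 * fst v)) / h) by (field; auto).
  unfold Rdiv. rewrite Rabs_mult. rewrite Rabs_inv.
  pose proof (Rabs_pos_lt h Hh0).
  apply (Rmult_lt_reg_r (Rabs h)); auto. rewrite Rmult_assoc, Rinv_l by lra. nra.
Qed.

Lemma CInt_FTC G v a b : a <= b ->
  (forall x, a <= x <= b -> rdiff G x (v x)) -> rcont_on v a b ->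
  CInt v a b = (G b - G a)%C.
Proof.
  intros Hab HD HC. unfold CInt, Cminus, Cplus, Copp. simpl.
  assert (Hmin : Rmin a b = a) by (apply Rmin_left; lra).
  assert (Hmax : Rmax a b = b) by (apply Rmax_right; lra).
  f_equal.
  - apply is_RInt_unique.
    apply (is_RInt_derive (V:=R_CompleteNormedModule) (fun y => fst (G y))).
    + intros x Hx. rewrite Hmin, Hmax in Hx. apply is_derive_Reals. apply rdiff_fst, HD; auto.
    + intros x Hx. apply rcont_fst, HC. auto.
  - apply is_RInt_unique.
    apply (is_RInt_derive (V:=R_CompleteNormedModule) (fun y => snd (G y))).
    + intros x Hx. rewrite Hmin, Hmax in Hx. apply is_derive_Reals. apply rdiff_snd, HD; auto.
    + intros x Hx. apply rcont_snd, HC. auto.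
Qed.
Definition cdiff (f : C -> C) (z d : C) : Prop :=
  forall eps, 0 < eps -> exists delta, 0 < delta /\
    forall h, Cmod h < delta -> Cmod (Cminus (Cminus (f (Cplus z h)) (f z)) (Cmult d h)) <= eps * Cmod h.

Definition ccont (f : C -> C) (z : C) : Prop :=
  forall eps, 0 < eps -> exists delta, 0 < delta /\
    forall y, Cmod (Cminus y z) < delta -> Cmod (Cminus (f y) (f z)) < eps.

Lemma Cmod_sub_sym a b : Cmod (Cminus a b) = Cmod (Cminus b a).
Proof. rewrite <- Cmod_opp. f_equal. ring. Qed.

Lemma Cmod_triangle3 x y z : Cmod (x + y + z)%C <= Cmod x + Cmod y + Cmod z.
Proof. eapply Rle_trans. apply Cmod_triangle. pose proof (Cmod_triangle x y). lra. Qed.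

Lemma Cmod_minus_le x y : Cmod (Cminus x y) <= Cmod x + Cmod y.
Proof. unfold Cminus. eapply Rle_trans. apply Cmod_triangle. rewrite Cmod_opp. lra. Qed.

Lemma cdiff_cont f z d : cdiff f z d -> ccont f z.
Proof.
  intros H eps Heps. destruct (H 1 ltac:(lra)) as [dl [Hdl Hh]].
  pose proof (Cmod_ge0 d).
  exists (Rmin dl (eps / (Cmod d + 2))). split.
  { apply Rmin_pos; auto. apply Rdiv_lt_0_compat; lra. }
  intros y Hy. pose proof (Rmin_l dl (eps / (Cmod d + 2))). pose proof (Rmin_r dl (eps / (Cmod d + 2))).
  specialize (Hh (Cminus y z) ltac:(lra)).
  replace (Cplus z (Cminus y z)) with y in Hh by ring.
  replace (Cminus (f y) (f z)) with (Cplus (Cminus (Cminus (f y) (f z)) (Cmult d (Cminus y z))) (Cmult d (Cminus y z))) by ring.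
  eapply Rle_lt_trans. apply Cmod_triangle. rewrite Cmod_mult.
  assert (Cmod (Cminus y z) * (Cmod d + 2) < eps).
  { apply (Rmult_lt_reg_r (/ (Cmod d + 2))). apply Rinv_0_lt_compat; lra.
    rewrite Rmult_assoc, Rinv_r by lra. lra. }
  pose proof (Cmod_ge0 (Cminus y z)). nra.
Qed.

Lemma rdiff_cont G x v : rdiff G x v -> rcont G x.
Proof.
  intros H eps Heps. destruct (H 1 ltac:(lra)) as [dl [Hdl Hh]].
  pose proof (Cmod_ge0 v).
  exists (Rmin dl (eps / (Cmod v + 2))). split.
  { apply Rmin_pos; auto. apply Rdiv_lt_0_compat; lra. }
  intros y Hy. pose proof (Rmin_l dl (eps / (Cmod v + 2))). pose proof (Rmin_r dl (eps / (Cmod v + 2))).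
  specialize (Hh (y - x) ltac:(lra)).
  replace (x + (y - x)) with y in Hh by ring.
  replace (Cminus (G y) (G x)) with (Cplus (Cminus (Cminus (G y) (G x)) (Cmult (RtoC (y - x)) v)) (Cmult (RtoC (y-x)) v)) by ring.
  eapply Rle_lt_trans. apply Cmod_triangle. rewrite Cmod_mult, Cmod_R.
  assert (Rabs (y - x) * (Cmod v + 2) < eps).
  { apply (Rmult_lt_reg_r (/ (Cmod v + 2))). apply Rinv_0_lt_compat; lra.
    rewrite Rmult_assoc, Rinv_r by lra. lra. }
  pose proof (Rabs_pos (y - x)). nra.
Qed.

Lemma rcont_comp q g x : ccont q (g x) -> rcont g x -> rcont (fun y => q (g y)) x.
Proof.
  intros Hq Hg eps Heps. destruct (Hq eps Heps) as [d1 [Hd1 H1]].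
  destruct (Hg d1 Hd1) as [d2 [Hd2 H2]]. exists d2; split; auto.
Qed.

Lemma rcont_mult g1 g2 x : rcont g1 x -> rcont g2 x -> rcont (fun y => Cmult (g1 y) (g2 y)) x.
Proof.
  intros H1 H2 eps Heps.
  set (A := Cmod (g1 x)). set (B := Cmod (g2 x)).
  assert (HA : 0 <= A) by apply Cmod_ge0. assert (HB : 0 <= B) by apply Cmod_ge0.
  set (e := Rmin 1 (eps / (A + B + 2))).
  assert (He : 0 < e). { apply Rmin_pos; try lra. apply Rdiv_lt_0_compat; lra. }
  assert (He1 : e <= 1) by apply Rmin_l.
  assert (He2 : e * (A + B + 2) <= eps).
  { pose proof (Rmin_r 1 (eps / (A + B + 2))). fold e in H.
    apply (Rmult_le_reg_r (/ (A + B + 2))). apply Rinv_0_lt_compat; lra.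
    rewrite Rmult_assoc, Rinv_r by lra. lra. }
  destruct (H1 e He) as [d1 [Hd1 K1]]. destruct (H2 e He) as [d2 [Hd2 K2]].
  exists (Rmin d1 d2). split. apply Rmin_pos; auto.
  intros y Hy. pose proof (Rmin_l d1 d2). pose proof (Rmin_r d1 d2).
  specialize (K1 y ltac:(lra)). specialize (K2 y ltac:(lra)).
  replace (Cminus (Cmult (g1 y) (g2 y)) (Cmult (g1 x) (g2 x))) with
    (Cplus (Cplus (Cmult (Cminus (g1 y) (g1 x)) (Cminus (g2 y) (g2 x)))
                  (Cmult (Cminus (g1 y) (g1 x)) (g2 x)))
           (Cmult (g1 x) (Cminus (g2 y) (g2 x)))) by ring.
  eapply Rle_lt_trans. apply Cmod_triangle3. rewrite !Cmod_mult. fold A B.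
  pose proof (Cmod_ge0 (Cminus (g1 y) (g1 x))). pose proof (Cmod_ge0 (Cminus (g2 y) (g2 x))).
  assert (Cmod (Cminus (g1 y) (g1 x)) * Cmod (Cminus (g2 y) (g2 x)) <= e * e) by (apply Rmult_le_compat; lra).
  assert (Cmod (Cminus (g1 y) (g1 x)) * B <= e * B) by (apply Rmult_le_compat_r; lra).
  assert (A * Cmod (Cminus (g2 y) (g2 x)) <= A * e) by (apply Rmult_le_compat_l; lra).
  assert (e * e <= e) by nra.
  assert (e * B + A * e + e < e * (A + B + 2)) by nra. lra.
Qed.

Lemma rcont_const c x : rcont (fun _ => c) x.
Proof. intros eps Heps. exists 1. split; [lra|]. intros y _. replace (Cminus c c) with (RtoC 0) by ring. rewrite Cmod_0. lra. Qed.

Lemma chain_rule F gm x d v : cdiff F (gm x) d -> rdiff gm x v ->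
  rdiff (fun y => F (gm y)) x (Cmult d v).
Proof.
  intros HF Hg eps Heps.
  pose proof (Cmod_ge0 v) as Hv. pose proof (Cmod_ge0 d) as Hd.
  set (e1 := eps / (2 * (Cmod v + 1))).
  assert (He1 : 0 < e1) by (apply Rdiv_lt_0_compat; lra).
  set (e2 := Rmin 1 (eps / (2 * (Cmod d + 1)))).
  assert (He2 : 0 < e2). { apply Rmin_pos; try lra. apply Rdiv_lt_0_compat; lra. }
  assert (He21 : e2 <= 1) by apply Rmin_l.
  assert (He22 : e2 * Cmod d <= eps / 2).
  { pose proof (Rmin_r 1 (eps / (2 * (Cmod d + 1)))). fold e2 in H.
    assert (e2 * (Cmod d + 1) <= eps / 2).
    { apply (Rmult_le_reg_r (/ (Cmod d + 1))). apply Rinv_0_lt_compat; lra.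
      rewrite Rmult_assoc, Rinv_r by lra.
      replace (eps / 2 * / (Cmod d + 1)) with (eps / (2 * (Cmod d + 1))) by (field; lra). lra. }
    nra. }
  assert (He12 : e1 * (Cmod v + 1) = eps / 2) by (unfold e1; field; lra).
  destruct (HF e1 He1) as [d1 [Hd1 K1]]. destruct (Hg e2 He2) as [d2 [Hd2 K2]].
  exists (Rmin d2 (d1 / (Cmod v + 1))). split.
  { apply Rmin_pos; auto. apply Rdiv_lt_0_compat; lra. }
  intros h Hh. pose proof (Rmin_l d2 (d1 / (Cmod v + 1))). pose proof (Rmin_r d2 (d1 / (Cmod v + 1))).
  specialize (K2 h ltac:(lra)).
  set (k := Cminus (gm (x + h)) (gm x)).
  assert (Hk : Cmod k <= (Cmod v + 1) * Rabs h).
  { replace k with (Cplus (Cminus (Cminus (gm (x + h)) (gm x)) (Cmult (RtoC h) v)) (Cmult (RtoC h) v)) by (unfold k; ring).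
    eapply Rle_trans. apply Cmod_triangle. rewrite Cmod_mult, Cmod_R.
    pose proof (Rabs_pos h). assert (e2 * Rabs h <= Rabs h) by nra. nra. }
  assert (Hk2 : Cmod k < d1).
  { pose proof (Rabs_pos h).
    assert (Rabs h * (Cmod v + 1) < d1).
    { apply (Rmult_lt_reg_r (/ (Cmod v + 1))). apply Rinv_0_lt_compat; lra.
      rewrite Rmult_assoc, Rinv_r by lra. lra. }
    lra. }
  specialize (K1 k Hk2).
  replace (Cplus (gm x) k) with (gm (x + h)) in K1 by (unfold k; ring).
  replace (Cminus (Cminus (F (gm (x + h))) (F (gm x))) (Cmult (RtoC h) (Cmult d v))) with
    (Cplus (Cminus (Cminus (F (gm (x + h))) (F (gm x))) (Cmult d k))
           (Cmult d (Cminus (Cminus (gm (x + h)) (gm x)) (Cmult (RtoC h) v)))) by (unfold k; ring).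
  eapply Rle_trans. apply Cmod_triangle. rewrite Cmod_mult.
  pose proof (Rabs_pos h).
  assert (e1 * Cmod k <= eps / 2 * Rabs h) by (rewrite <- He12; nra).
  assert (Cmod d * Cmod (Cminus (Cminus (gm (x + h)) (gm x)) (Cmult (RtoC h) v)) <= eps / 2 * Rabs h).
  { apply Rle_trans with (Cmod d * (e2 * Rabs h)). apply Rmult_le_compat_l; auto. nra. }
  lra.
Qed.

Definition line (a b : C) (s : R) : C := Cplus a (Cmult (RtoC s) (Cminus b a)).

Lemma line_rdiff a b s : rdiff (line a b) s (Cminus b a).
Proof.
  intros eps Heps. exists 1. split; [lra|]. intros h _.
  replace (Cminus (Cminus (line a b (s + h)) (line a b s)) (Cmult (RtoC h) (Cminus b a))) with (RtoC 0)
    by (unfold line; rewrite RtoC_plus; ring).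
  rewrite Cmod_0. pose proof (Rabs_pos h). nra.
Qed.

Lemma line_rcont a b s : rcont (line a b) s.
Proof. eapply rdiff_cont. apply line_rdiff. Qed.

Definition segc (f : C -> C) a b := forall s, 0 <= s <= 1 -> ccont f (line a b s).

Definition Seg (f : C -> C) (a b : C) : C :=
  Cmult (CInt (fun s => f (line a b s)) 0 1) (Cminus b a).

Lemma segc_rcont f a b : segc f a b -> rcont_on (fun s => f (line a b s)) 0 1.
Proof.
  intros H x Hx. rewrite Rmin_left, Rmax_right in Hx by lra.
  apply rcont_comp. apply H; auto. apply line_rcont.
Qed.

Lemma rcont_on_sub g a b c d : rcont_on g a b -> Rmin a b <= Rmin c d -> Rmax c d <= Rmax a b -> rcont_on g c d.
Proof. intros H H1 H2 x Hx. apply H. lra. Qed.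

Lemma CInt_ext g1 g2 a b : (forall x, g1 x = g2 x) -> CInt g1 a b = CInt g2 a b.
Proof.
  intros H. unfold CInt. f_equal; apply RInt_ext; intros; rewrite H; auto.
Qed.

Lemma CInt_refl g a : CInt g a a = RtoC 0.
Proof. unfold CInt. rewrite !RInt_point. reflexivity. Qed.

Lemma CInt_swap g a b : rcont_on g a b -> CInt g b a = Copp (CInt g a b).
Proof.
  intros H. pose proof (CInt_chasles g a b a H) as E.
  rewrite CInt_refl in E. assert (rcont_on g b a) as H'.
  { intros x Hx. apply H. rewrite Rmin_comm, Rmax_comm. auto. }
  specialize (E H').
  transitivity (Cminus (Cplus (CInt g a b) (CInt g b a)) (CInt g a b)). ring. rewrite E. ring.
Qed.
Lemma line_0 a b : line a b 0 = a.
Proof. unfold line. ring. Qed.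
Lemma line_1 a b : line a b 1 = b.
Proof. unfold line. ring. Qed.

Lemma Seg_FTC F f a b :
  (forall s, 0 <= s <= 1 -> cdiff F (line a b s) (f (line a b s))) -> segc f a b ->
  Seg f a b = Cminus (F b) (F a).
Proof.
  intros HD HC. unfold Seg.
  rewrite Cmult_comm, <- CInt_cmul by (apply segc_rcont; auto).
  rewrite (CInt_ext _ (fun s => Cmult (f (line a b s)) (Cminus b a))) by (intros; apply Cmult_comm).
  rewrite (CInt_FTC (fun s => F (line a b s))); [ | lra | | ].
  - rewrite line_0, line_1. reflexivity.
  - intros x Hx. apply chain_rule. apply HD; auto. apply line_rdiff.
  - intros x Hx. rewrite Rmin_left, Rmax_right in Hx by lra. apply rcont_mult.
    apply rcont_comp. apply HC; auto. apply line_rcont. apply rcont_const.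
Qed.

Lemma segc_sub f a b t u : segc f a b -> 0 <= t <= 1 -> 0 <= u <= 1 ->
  segc f (line a b t) (line a b u).
Proof.
  intros H Ht Hu s Hs.
  replace (line (line a b t) (line a b u) s) with (line a b (t + s * (u - t))) by (unfold line; rewrite RtoC_plus, RtoC_mult, RtoC_minus; ring).
  apply H. split.
  - destruct (Rle_dec t u). nra. nra.
  - destruct (Rle_dec t u). nra. nra.
Qed.

Lemma segc_rev f a b : segc f a b -> segc f b a.
Proof.
  intros H s Hs. replace (line b a s) with (line a b (1 - s)) by (unfold line; rewrite RtoC_minus; ring).
  apply H; lra.
Qed.

Lemma Seg_rev f a b : segc f a b -> Seg f b a = Copp (Seg f a b).
Proof.
  intros H. unfold Seg.
  set (g := fun s => f (line a b s)).
  assert (Hg : rcont_on g 0 1) by (apply segc_rcont; auto).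
  assert (Hh : rcont_on (fun s => f (line b a s)) 0 1) by (apply segc_rcont, segc_rev; auto).
  transitivity (Cmult (Cmult (RtoC (-1)) (CInt (fun s => f (line b a s)) 0 1)) (Cminus b a)).
  { replace (RtoC (-1)) with (Copp (RtoC 1)) by (unfold RtoC, Copp; simpl; f_equal; ring). ring. }
  rewrite <- CInt_cmul by auto.
  rewrite (CInt_ext _ (fun s => Cmult (RtoC (-1)) (g ((-1) * s + 1)))).
  2:{ intros x. unfold g; cbv beta. f_equal. f_equal. unfold line. rewrite RtoC_plus, RtoC_mult. ring. }
  rewrite CInt_comp_lin.
  2:{ replace (-1 * 0 + 1) with 1 by ring. replace (-1 * 1 + 1) with 0 by ring.
      intros x Hx. apply Hg. rewrite Rmin_comm, Rmax_comm. auto. }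
  replace (-1 * 0 + 1) with 1 by ring. replace (-1 * 1 + 1) with 0 by ring.
  rewrite CInt_swap by auto. ring.
Qed.

Lemma Seg_split f a b t : segc f a b -> 0 <= t <= 1 ->
  Seg f a b = Cplus (Seg f a (line a b t)) (Seg f (line a b t) b).
Proof.
  intros H Ht. unfold Seg.
  set (g := fun s => f (line a b s)).
  assert (Hg : rcont_on g 0 1) by (apply segc_rcont; auto).
  assert (H1 : rcont_on (fun s => f (line a (line a b t) s)) 0 1).
  { apply segc_rcont. rewrite <- (line_0 a b) at 1. apply segc_sub; auto; lra. }
  assert (H2 : rcont_on (fun s => f (line (line a b t) b s)) 0 1).
  { apply segc_rcont. rewrite <- (line_1 a b) at 2. apply segc_sub; auto; lra. }
  replace (Cminus (line a b t) a) with (Cmult (RtoC t) (Cminus b a)) by (unfold line; ring).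
  replace (Cminus b (line a b t)) with (Cmult (RtoC (1 - t)) (Cminus b a)) by (unfold line; rewrite RtoC_minus; ring).
  rewrite !Cmult_assoc.
  rewrite (Cmult_comm _ (RtoC t)), (Cmult_comm _ (RtoC (1 - t))).
  rewrite <- !CInt_cmul by auto.
  rewrite (CInt_ext (fun s => Cmult (RtoC t) (f (line a (line a b t) s))) (fun s => Cmult (RtoC t) (g (t * s + 0)))).
  2:{ intros x. unfold g; cbv beta. f_equal. f_equal. unfold line. rewrite RtoC_plus, !RtoC_mult. ring. }
  rewrite (CInt_ext (fun s => Cmult (RtoC (1 - t)) (f (line (line a b t) b s))) (fun s => Cmult (RtoC (1 - t)) (g ((1 - t) * s + t)))).
  2:{ intros x. unfold g; cbv beta. f_equal. f_equal. unfold line. rewrite RtoC_plus, !RtoC_mult, RtoC_minus. ring. }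
  rewrite !CInt_comp_lin.
  2:{ replace ((1 - t) * 0 + t) with t by ring. replace ((1 - t) * 1 + t) with 1 by ring.
      eapply rcont_on_sub; eauto; rewrite ?Rmin_left, ?Rmax_right by lra; lra. }
  2:{ replace (t * 0 + 0) with 0 by ring. replace (t * 1 + 0) with t by ring.
      eapply rcont_on_sub; eauto; rewrite ?Rmin_left, ?Rmax_right by lra; lra. }
  replace ((1 - t) * 0 + t) with t by ring. replace ((1 - t) * 1 + t) with 1 by ring.
  replace (t * 0 + 0) with 0 by ring. replace (t * 1 + 0) with t by ring.
  rewrite <- (CInt_chasles g 0 t 1). ring.
  eapply rcont_on_sub; eauto; rewrite ?Rmin_left, ?Rmax_right by lra; lra.
  eapply rcont_on_sub; eauto; rewrite ?Rmin_left, ?Rmax_right by lra; lra.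
Qed.

Lemma Seg_bound f a b M : segc f a b -> (forall s, 0 <= s <= 1 -> Cmod (f (line a b s)) <= M) ->
  Cmod (Seg f a b) <= 2 * M * Cmod (Cminus b a).
Proof.
  intros H HM. unfold Seg. rewrite Cmod_mult.
  pose proof (CInt_bound (fun s => f (line a b s)) 0 1 M ltac:(lra) (segc_rcont _ _ _ H) HM).
  pose proof (Cmod_ge0 (Cminus b a)). nra.
Qed.

Lemma Seg_point f a : Seg f a a = RtoC 0.
Proof. unfold Seg. replace (Cminus a a) with (RtoC 0) by ring. ring. Qed.

Lemma Seg_plus f1 f2 a b : segc f1 a b -> segc f2 a b ->
  Seg (fun z => Cplus (f1 z) (f2 z)) a b = Cplus (Seg f1 a b) (Seg f2 a b).
Proof.
  intros H1 H2. unfold Seg. rewrite CInt_plus by (apply segc_rcont; auto). ring.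
Qed.

Lemma Seg_cmul c f a b : segc f a b -> Seg (fun z => Cmult c (f z)) a b = Cmult c (Seg f a b).
Proof.
  intros H. unfold Seg. rewrite CInt_cmul by (apply segc_rcont; auto). ring.
Qed.
Lemma ccont_plus f g z : ccont f z -> ccont g z -> ccont (fun x => Cplus (f x) (g x)) z.
Proof.
  intros Hf Hg eps Heps. destruct (Hf (eps/2) ltac:(lra)) as [d1 [Hd1 K1]].
  destruct (Hg (eps/2) ltac:(lra)) as [d2 [Hd2 K2]].
  exists (Rmin d1 d2). split. apply Rmin_pos; auto.
  intros y Hy. pose proof (Rmin_l d1 d2). pose proof (Rmin_r d1 d2).
  specialize (K1 y ltac:(lra)). specialize (K2 y ltac:(lra)).
  replace (Cminus (Cplus (f y) (g y)) (Cplus (f z) (g z))) with (Cplus (Cminus (f y) (f z)) (Cminus (g y) (g z))) by ring.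
  eapply Rle_lt_trans. apply Cmod_triangle. lra.
Qed.

Lemma ccont_cmul c f z : ccont f z -> ccont (fun x => Cmult c (f x)) z.
Proof.
  intros Hf eps Heps. pose proof (Cmod_ge0 c).
  destruct (Hf (eps / (Cmod c + 1))) as [d [Hd K]]. apply Rdiv_lt_0_compat; lra.
  exists d. split; auto. intros y Hy. specialize (K y Hy).
  replace (Cminus (Cmult c (f y)) (Cmult c (f z))) with (Cmult c (Cminus (f y) (f z))) by ring.
  rewrite Cmod_mult.
  assert (Cmod (Cminus (f y) (f z)) * (Cmod c + 1) < eps).
  { apply (Rmult_lt_reg_r (/ (Cmod c + 1))). apply Rinv_0_lt_compat; lra.
    rewrite Rmult_assoc, Rinv_r by lra. lra. }
  pose proof (Cmod_ge0 (Cminus (f y) (f z))). nra.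
Qed.

Lemma ccont_const c z : ccont (fun _ => c) z.
Proof. intros eps Heps. exists 1. split; [lra|]. intros y _. replace (Cminus c c) with (RtoC 0) by ring. rewrite Cmod_0. lra. Qed.

Lemma ccont_id z : ccont (fun x => x) z.
Proof. intros eps Heps. exists eps. split; auto. Qed.

Lemma ccont_mult f g z : ccont f z -> ccont g z -> ccont (fun x => Cmult (f x) (g x)) z.
Proof.
  intros Hf Hg eps Heps.
  set (A := Cmod (f z)). set (B := Cmod (g z)).
  assert (HA : 0 <= A) by apply Cmod_ge0. assert (HB : 0 <= B) by apply Cmod_ge0.
  set (e := Rmin 1 (eps / (A + B + 2))).
  assert (He : 0 < e). { apply Rmin_pos; try lra. apply Rdiv_lt_0_compat; lra. }
  assert (He1 : e <= 1) by apply Rmin_l.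
  assert (He2 : e * (A + B + 2) <= eps).
  { pose proof (Rmin_r 1 (eps / (A + B + 2))). fold e in H.
    apply (Rmult_le_reg_r (/ (A + B + 2))). apply Rinv_0_lt_compat; lra.
    rewrite Rmult_assoc, Rinv_r by lra. lra. }
  destruct (Hf e He) as [d1 [Hd1 K1]]. destruct (Hg e He) as [d2 [Hd2 K2]].
  exists (Rmin d1 d2). split. apply Rmin_pos; auto.
  intros y Hy. pose proof (Rmin_l d1 d2). pose proof (Rmin_r d1 d2).
  specialize (K1 y ltac:(lra)). specialize (K2 y ltac:(lra)).
  replace (Cminus (Cmult (f y) (g y)) (Cmult (f z) (g z))) with
    (Cplus (Cplus (Cmult (Cminus (f y) (f z)) (Cminus (g y) (g z)))
                  (Cmult (Cminus (f y) (f z)) (g z)))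
           (Cmult (f z) (Cminus (g y) (g z)))) by ring.
  eapply Rle_lt_trans. apply Cmod_triangle3. rewrite !Cmod_mult. fold A B.
  pose proof (Cmod_ge0 (Cminus (f y) (f z))). pose proof (Cmod_ge0 (Cminus (g y) (g z))).
  assert (Cmod (Cminus (f y) (f z)) * Cmod (Cminus (g y) (g z)) <= e * e) by (apply Rmult_le_compat; lra).
  assert (Cmod (Cminus (f y) (f z)) * B <= e * B) by (apply Rmult_le_compat_r; lra).
  assert (A * Cmod (Cminus (g y) (g z)) <= A * e) by (apply Rmult_le_compat_l; lra).
  assert (e * e <= e) by nra.
  assert (e * B + A * e + e < e * (A + B + 2)) by nra. lra.
Qed.

Lemma Seg_ext f1 f2 a b : (forall z, f1 z = f2 z) -> Seg f1 a b = Seg f2 a b.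
Proof. intros H. unfold Seg. f_equal. apply CInt_ext. intros; apply H. Qed.

Lemma segc_plus f g a b : segc f a b -> segc g a b -> segc (fun x => Cplus (f x) (g x)) a b.
Proof. intros H1 H2 s Hs. apply ccont_plus; auto. Qed.
Lemma segc_cmul c f a b : segc f a b -> segc (fun x => Cmult c (f x)) a b.
Proof. intros H s Hs. apply ccont_cmul; auto. Qed.

Definition Tri f a b c := Cplus (Cplus (Seg f a b) (Seg f b c)) (Seg f c a).

Lemma cdiff_quad (al be z0 x : C) :
  cdiff (fun y => Cplus (Cmult al y) (Cmult be (Cmult (Cminus y z0) (Cminus y z0))))
        x (Cplus al (Cmult (RtoC 2) (Cmult be (Cminus x z0)))).
Proof.
  intros eps Heps. pose proof (Cmod_ge0 be).
  exists (eps / (Cmod be + 1)). split. apply Rdiv_lt_0_compat; lra.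
  intros h Hh.
  replace (Cminus (Cminus (Cplus (Cmult al (Cplus x h)) (Cmult be (Cmult (Cminus (Cplus x h) z0) (Cminus (Cplus x h) z0))))
       (Cplus (Cmult al x) (Cmult be (Cmult (Cminus x z0) (Cminus x z0)))))
       (Cmult (Cplus al (Cmult (RtoC 2) (Cmult be (Cminus x z0)))) h)) with (Cmult be (Cmult h h)).
  2:{ ring. }
  rewrite !Cmod_mult. pose proof (Cmod_ge0 h).
  assert (Cmod h * (Cmod be + 1) < eps).
  { apply (Rmult_lt_reg_r (/ (Cmod be + 1))). apply Rinv_0_lt_compat; lra.
    rewrite Rmult_assoc, Rinv_r by lra. lra. }
  nra.
Qed.

Lemma Tri_affine (al be z0 a b c : C) :
  Tri (fun x => Cplus al (Cmult be (Cminus x z0))) a b c = RtoC 0.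
Proof.
  set (F := fun y => Cplus (Cmult al y) (Cmult (Cmult be (/ 2)%C) (Cmult (Cminus y z0) (Cminus y z0)))).
  assert (HF : forall x, cdiff F x (Cplus al (Cmult be (Cminus x z0)))).
  { intros x. pose proof (cdiff_quad al (Cmult be (/2)%C) z0 x) as K.
    replace (Cmult (RtoC 2) (Cmult (Cmult be (/ 2)%C) (Cminus x z0))) with (Cmult be (Cminus x z0)) in K.
    exact K. field. }
  assert (Hc : forall u v, segc (fun x => Cplus al (Cmult be (Cminus x z0))) u v).
  { intros u v s _. apply ccont_plus. apply ccont_const. apply ccont_cmul.
    intros eps Heps. exists eps. split; auto. intros y Hy.
    replace (Cminus (Cminus y z0) (Cminus (line u v s) z0)) with (Cminus y (line u v s)) by ring. auto. }
  unfold Tri. rewrite !(Seg_FTC F) by (intros; auto). ring.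
Qed.
Definition pt2 := (R * R)%type.
Definition lerp (p q : pt2) (s : R) : pt2 :=
  (fst p + s * (fst q - fst p), snd p + s * (snd q - snd p)).
Definition mid (p q : pt2) : pt2 := lerp p q (1/2).
Definition inS (p : pt2) := 0 <= fst p /\ 0 <= snd p /\ fst p + snd p <= 1.
Definition dist1 (p q : pt2) := Rabs (fst p - fst q) + Rabs (snd p - snd q).

Lemma inS_lerp p q s : inS p -> inS q -> 0 <= s <= 1 -> inS (lerp p q s).
Proof. unfold inS, lerp; simpl. intros. nra. Qed.

Lemma dist1_sym p q : dist1 p q = dist1 q p.
Proof. unfold dist1. rewrite (Rabs_minus_sym (fst p)), (Rabs_minus_sym (snd p)). auto. Qed.
Lemma dist1_tri p q r : dist1 p r <= dist1 p q + dist1 q r.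
Proof.
  unfold dist1.
  pose proof (Rabs_triang (fst p - fst q) (fst q - fst r)).
  pose proof (Rabs_triang (snd p - snd q) (snd q - snd r)).
  replace (fst p - fst q + (fst q - fst r)) with (fst p - fst r) in H by ring.
  replace (snd p - snd q + (snd q - snd r)) with (snd p - snd r) in H0 by ring. lra.
Qed.
Lemma dist1_lerp p q s r : 0 <= s <= 1 -> dist1 (lerp p q s) r <= (1 - s) * dist1 p r + s * dist1 q r.
Proof.
  intros Hs. unfold dist1, lerp; simpl.
  replace (fst p + s * (fst q - fst p) - fst r) with ((1 - s) * (fst p - fst r) + s * (fst q - fst r)) by ring.
  replace (snd p + s * (snd q - snd p) - snd r) with ((1 - s) * (snd p - snd r) + s * (snd q - snd r)) by ring.
  pose proof (Rabs_triang ((1 - s) * (fst p - fst r)) (s * (fst q - fst r))).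
  pose proof (Rabs_triang ((1 - s) * (snd p - snd r)) (s * (snd q - snd r))).
  rewrite !Rabs_mult, !(Rabs_right s), !(Rabs_right (1 - s)) in * by lra. lra.
Qed.
Lemma dist1_mid_l p q : dist1 (mid p q) p = dist1 p q / 2.
Proof.
  unfold dist1, mid, lerp; simpl.
  replace (fst p + 1 / 2 * (fst q - fst p) - fst p) with ((fst p - fst q) * (-/2)) by field.
  replace (snd p + 1 / 2 * (snd q - snd p) - snd p) with ((snd p - snd q) * (-/2)) by field.
  rewrite !Rabs_mult. rewrite (Rabs_left (-/2)) by lra. field.
Qed.
Lemma dist1_mid_r p q : dist1 (mid p q) q = dist1 p q / 2.
Proof.
  unfold dist1, mid, lerp; simpl.
  replace (fst p + 1 / 2 * (fst q - fst p) - fst q) with ((fst p - fst q) * (/2)) by field.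
  replace (snd p + 1 / 2 * (snd q - snd p) - snd q) with ((snd p - snd q) * (/2)) by field.
  rewrite !Rabs_mult. rewrite (Rabs_right (/2)) by lra. field.
Qed.
Lemma dist1_mid_mid p q r : dist1 (mid p q) (mid q r) = dist1 p r / 2.
Proof.
  unfold dist1, mid, lerp; simpl.
  replace (fst p + 1 / 2 * (fst q - fst p) - (fst q + 1 / 2 * (fst r - fst q))) with ((fst p - fst r) * (/2)) by field.
  replace (snd p + 1 / 2 * (snd q - snd p) - (snd q + 1 / 2 * (snd r - snd q))) with ((snd p - snd r) * (/2)) by field.
  rewrite !Rabs_mult. rewrite (Rabs_right (/2)) by lra. field.
Qed.
Lemma dist1_pos p q : 0 <= dist1 p q.
Proof. unfold dist1. pose proof (Rabs_pos (fst p - fst q)). pose proof (Rabs_pos (snd p - snd q)). lra. Qed.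

Section GoursatSec.
Variables (f : C -> C) (a b c : C).

Definition Pt (p : pt2) : C :=
  Cplus a (Cplus (Cmult (RtoC (fst p)) (Cminus b a)) (Cmult (RtoC (snd p)) (Cminus c a))).
Definition LL := Cmod (Cminus b a) + Cmod (Cminus c a).

Lemma LL_pos : 0 <= LL.
Proof. unfold LL. pose proof (Cmod_ge0 (Cminus b a)). pose proof (Cmod_ge0 (Cminus c a)). lra. Qed.

Lemma Pt_line p q s : line (Pt p) (Pt q) s = Pt (lerp p q s).
Proof. unfold line, Pt, lerp; simpl. rewrite !RtoC_plus, !RtoC_mult, !RtoC_minus. ring. Qed.

Lemma Pt_lip p q : Cmod (Cminus (Pt p) (Pt q)) <= LL * dist1 p q.
Proof.
  unfold Pt, LL, dist1.
  replace (Cminus (Cplus a (Cplus (Cmult (RtoC (fst p)) (Cminus b a)) (Cmult (RtoC (snd p)) (Cminus c a))))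
     (Cplus a (Cplus (Cmult (RtoC (fst q)) (Cminus b a)) (Cmult (RtoC (snd q)) (Cminus c a)))))
    with (Cplus (Cmult (RtoC (fst p - fst q)) (Cminus b a)) (Cmult (RtoC (snd p - snd q)) (Cminus c a)))
    by (rewrite !RtoC_minus; ring).
  eapply Rle_trans. apply Cmod_triangle. rewrite !Cmod_mult, !Cmod_R.
  pose proof (Cmod_ge0 (Cminus b a)). pose proof (Cmod_ge0 (Cminus c a)).
  pose proof (Rabs_pos (fst p - fst q)). pose proof (Rabs_pos (snd p - snd q)). nra.
Qed.

Hypothesis Hd : forall p, inS p -> exists d, cdiff f (Pt p) d.

Lemma Hcont : forall p, inS p -> ccont f (Pt p).
Proof. intros p Hp. destruct (Hd p Hp) as [d Hdd]. eapply cdiff_cont; eauto. Qed.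

Lemma segc_S p q : inS p -> inS q -> segc f (Pt p) (Pt q).
Proof. intros Hp Hq s Hs. rewrite Pt_line. apply Hcont, inS_lerp; auto. Qed.

Definition tri := (pt2 * pt2 * pt2)%type.
Definition v1 (t : tri) := fst (fst t).
Definition v2 (t : tri) := snd (fst t).
Definition v3 (t : tri) := snd t.
Definition TriC (t : tri) := Tri f (Pt (v1 t)) (Pt (v2 t)) (Pt (v3 t)).
Definition Dsum (t : tri) := dist1 (v1 t) (v2 t) + dist1 (v2 t) (v3 t) + dist1 (v3 t) (v1 t).
Definition inT (t : tri) := inS (v1 t) /\ inS (v2 t) /\ inS (v3 t).

Definition s1 (t : tri) : tri := (v1 t, mid (v1 t) (v2 t), mid (v3 t) (v1 t)).
Definition s2 (t : tri) : tri := (mid (v1 t) (v2 t), v2 t, mid (v2 t) (v3 t)).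
Definition s3 (t : tri) : tri := (mid (v3 t) (v1 t), mid (v2 t) (v3 t), v3 t).
Definition s4 (t : tri) : tri := (mid (v1 t) (v2 t), mid (v2 t) (v3 t), mid (v3 t) (v1 t)).

Lemma Pt_mid p q : Pt (mid p q) = line (Pt p) (Pt q) (1/2).
Proof. rewrite Pt_line. reflexivity. Qed.

Lemma inS_mid p q : inS p -> inS q -> inS (mid p q).
Proof. intros. apply inS_lerp; auto; lra. Qed.

Lemma subdiv t : inT t -> TriC t = Cplus (Cplus (TriC (s1 t)) (TriC (s2 t))) (Cplus (TriC (s3 t)) (TriC (s4 t))).
Proof.
  intros [H1 [H2 H3]]. unfold TriC, Tri, s1, s2, s3, s4, v1, v2, v3 in *; simpl.
  set (p := fst (fst t)) in *. set (q := snd (fst t)) in *. set (r := snd t) in *.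
  assert (M12 := inS_mid p q H1 H2). assert (M23 := inS_mid q r H2 H3). assert (M31 := inS_mid r p H3 H1).
  rewrite (Seg_split f (Pt p) (Pt q) (1/2)) by (try apply segc_S; auto; lra).
  rewrite (Seg_split f (Pt q) (Pt r) (1/2)) by (try apply segc_S; auto; lra).
  rewrite (Seg_split f (Pt r) (Pt p) (1/2)) by (try apply segc_S; auto; lra).
  rewrite <- !Pt_mid.
  rewrite (Seg_rev f (Pt (mid r p)) (Pt (mid p q))) by (apply segc_S; auto).
  rewrite (Seg_rev f (Pt (mid p q)) (Pt (mid q r))) by (apply segc_S; auto).
  rewrite (Seg_rev f (Pt (mid q r)) (Pt (mid r p))) by (apply segc_S; auto).
  ring.
Qed.

Lemma inT_sub t : inT t -> inT (s1 t) /\ inT (s2 t) /\ inT (s3 t) /\ inT (s4 t).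
Proof.
  intros [H1 [H2 H3]]. unfold inT, s1, s2, s3, s4, v1, v2, v3 in *; simpl.
  pose proof (inS_mid _ _ H1 H2). pose proof (inS_mid _ _ H2 H3). pose proof (inS_mid _ _ H3 H1).
  refine (conj (conj _ (conj _ _)) (conj (conj _ (conj _ _)) (conj (conj _ (conj _ _)) (conj _ (conj _ _))))); auto.
Qed.

Lemma Dsum_sub t : Dsum (s1 t) = Dsum t / 2 /\ Dsum (s2 t) = Dsum t / 2 /\
                   Dsum (s3 t) = Dsum t / 2 /\ Dsum (s4 t) = Dsum t / 2.
Proof.
  unfold Dsum, s1, s2, s3, s4, v1, v2, v3; simpl.
  set (p := fst (fst t)). set (q := snd (fst t)). set (r := snd t).
  assert (Spq : dist1 q p = dist1 p q) by apply dist1_sym.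
  assert (Sqr : dist1 r q = dist1 q r) by apply dist1_sym.
  assert (Srp : dist1 p r = dist1 r p) by apply dist1_sym.
  assert (A1 : forall x y, dist1 x (mid x y) = dist1 x y / 2) by (intros; rewrite dist1_sym; apply dist1_mid_l).
  assert (A2 : forall x y, dist1 y (mid x y) = dist1 x y / 2) by (intros; rewrite dist1_sym; apply dist1_mid_r).
  assert (A3 : forall x y z, dist1 (mid y z) (mid x y) = dist1 x z / 2) by (intros; rewrite dist1_sym; apply dist1_mid_mid).
  repeat split; rewrite ?dist1_mid_l, ?dist1_mid_r, ?A1, ?A2, ?dist1_mid_mid, ?A3, ?Spq, ?Sqr, ?Srp; field.
Qed.

Definition best (x y : tri) : tri := if Rle_dec (Cmod (TriC y)) (Cmod (TriC x)) then x else y.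
Definition pick (t : tri) : tri := best (best (s1 t) (s2 t)) (best (s3 t) (s4 t)).

Lemma best_ge x y : Cmod (TriC x) <= Cmod (TriC (best x y)) /\ Cmod (TriC y) <= Cmod (TriC (best x y)).
Proof. unfold best. destruct (Rle_dec (Cmod (TriC y)) (Cmod (TriC x))); lra. Qed.
Lemma best_cases x y : best x y = x \/ best x y = y.
Proof. unfold best. destruct (Rle_dec (Cmod (TriC y)) (Cmod (TriC x))); auto. Qed.

Lemma pick_cases t : pick t = s1 t \/ pick t = s2 t \/ pick t = s3 t \/ pick t = s4 t.
Proof.
  unfold pick. destruct (best_cases (best (s1 t) (s2 t)) (best (s3 t) (s4 t))) as [E|E]; rewrite E.
  destruct (best_cases (s1 t) (s2 t)) as [E'|E']; rewrite E'; auto.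
  destruct (best_cases (s3 t) (s4 t)) as [E'|E']; rewrite E'; auto.
Qed.

Lemma pick_ge t : inT t -> Cmod (TriC t) <= 4 * Cmod (TriC (pick t)).
Proof.
  intros H. rewrite subdiv by auto. unfold pick.
  destruct (best_ge (s1 t) (s2 t)). destruct (best_ge (s3 t) (s4 t)).
  destruct (best_ge (best (s1 t) (s2 t)) (best (s3 t) (s4 t))).
  eapply Rle_trans. apply Cmod_triangle.
  pose proof (Cmod_triangle (TriC (s1 t)) (TriC (s2 t))).
  pose proof (Cmod_triangle (TriC (s3 t)) (TriC (s4 t))). lra.
Qed.

Lemma pick_inT t : inT t -> inT (pick t).
Proof. intros H. destruct (inT_sub t H) as [A [B [C' D]]]. destruct (pick_cases t) as [E|[E|[E|E]]]; rewrite E; auto. Qed.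

Lemma pick_Dsum t : Dsum (pick t) = Dsum t / 2.
Proof. destruct (Dsum_sub t) as [A [B [C' D]]]. destruct (pick_cases t) as [E|[E|[E|E]]]; rewrite E; auto. Qed.

Lemma dist1_refl p : dist1 p p = 0.
Proof. unfold dist1. rewrite !Rminus_diag, Rabs_R0. lra. Qed.

Lemma pick_v1 t : dist1 (v1 (pick t)) (v1 t) <= Dsum t.
Proof.
  unfold Dsum. destruct (pick_cases t) as [E|[E|[E|E]]]; rewrite E; clear E;
  unfold s1, s2, s3, s4, v1, v2, v3; simpl;
  set (p := fst (fst t)); set (q := snd (fst t)); set (r := snd t);
  pose proof (dist1_pos p q); pose proof (dist1_pos q r); pose proof (dist1_pos r p).
  - rewrite dist1_refl. lra.
  - rewrite dist1_mid_l. lra.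
  - rewrite dist1_mid_r. lra.
  - rewrite dist1_mid_l. lra.
Qed.

Lemma v23_near t : dist1 (v2 t) (v1 t) <= Dsum t /\ dist1 (v3 t) (v1 t) <= Dsum t.
Proof.
  pose proof (dist1_pos (v1 t) (v2 t)). pose proof (dist1_pos (v2 t) (v3 t)). pose proof (dist1_pos (v3 t) (v1 t)).
  unfold Dsum. rewrite dist1_sym. lra.
Qed.

End GoursatSec.
Lemma half_pos n : 0 < (/2) ^ n.
Proof. apply pow_lt. lra. Qed.

Lemma half_S n : (/2) ^ (S n) = (/2) ^ n / 2.
Proof. simpl. field. Qed.

Lemma half_small eps : 0 < eps -> exists n, (/2) ^ n < eps.
Proof.
  intros He. destruct (pow_lt_1_zero (/2) ltac:(rewrite Rabs_right; lra) eps He) as [N HN].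
  exists N. specialize (HN N (Nat.le_refl N)). rewrite Rabs_right in HN; auto.
  left. apply half_pos.
Qed.

Lemma le_of_small x K : 0 <= K -> (forall n, x <= K * (/2) ^ n) -> x <= 0.
Proof.
  intros HK H. destruct (Rle_dec x 0) as [|Hx]; auto. exfalso.
  assert (Hx' : 0 < x) by lra.
  destruct (half_small (x / (K + 1))) as [n Hn]. apply Rdiv_lt_0_compat; lra.
  specialize (H n). pose proof (half_pos n).
  assert ((/2)^n * (K + 1) < x).
  { apply (Rmult_lt_reg_r (/ (K + 1))). apply Rinv_0_lt_compat; lra.
    rewrite Rmult_assoc, Rinv_r by lra. rewrite Rmult_1_r. exact Hn. }
  nra.
Qed.

Lemma geom_cauchy (u : nat -> R) K : 0 <= K -> (forall n, Rabs (u (S n) - u n) <= K * (/2) ^ n) ->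
  forall n k, Rabs (u (k + n)%nat - u n) <= 2 * K * (/2) ^ n - 2 * K * (/2) ^ (k + n).
Proof.
  intros HK H n k. induction k.
  - simpl. rewrite Rminus_diag, Rabs_R0. lra.
  - replace (S k + n)%nat with (S (k + n)) by lia.
    specialize (H (k + n)%nat). rewrite half_S.
    replace (u (S (k + n)) - u n) with ((u (S (k + n)) - u (k + n)%nat) + (u (k + n)%nat - u n)) by ring.
    eapply Rle_trans. apply Rabs_triang. pose proof (half_pos (k + n)). lra.
Qed.

Lemma geom_limit (u : nat -> R) K : 0 <= K -> (forall n, Rabs (u (S n) - u n) <= K * (/2) ^ n) ->
  exists l, forall n, Rabs (l - u n) <= 2 * K * (/2) ^ n.
Proof.
  intros HK H. pose proof (geom_cauchy u K HK H) as G.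
  assert (Hc : Cauchy_crit u).
  { intros eps Heps. destruct (half_small (eps / (4 * K + 1))) as [N HN]. apply Rdiv_lt_0_compat; lra.
    exists N. intros n m Hn Hm. unfold R_dist.
    assert (B : forall k, (k >= N)%nat -> Rabs (u k - u N) <= 2 * K * (/2) ^ N).
    { intros k Hk. replace k with ((k - N) + N)%nat by lia. pose proof (G N (k - N)%nat).
      pose proof (half_pos ((k - N) + N)). nra. }
    pose proof (B n Hn). pose proof (B m Hm).
    replace (u n - u m) with ((u n - u N) - (u m - u N)) by ring.
    eapply Rle_lt_trans. apply Rabs_triang. rewrite Rabs_Ropp.
    pose proof (half_pos N).
    assert ((/2) ^ N * (4 * K + 1) < eps).
    { apply (Rmult_lt_reg_r (/ (4 * K + 1))). apply Rinv_0_lt_compat; lra.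
      rewrite Rmult_assoc, Rinv_r by lra. lra. }
    nra. }
  destruct (Rcomplete.R_complete u Hc) as [l Hl]. exists l. intros n.
  destruct (Rle_dec (Rabs (l - u n)) (2 * K * (/2) ^ n)) as [|Hnot]; auto. exfalso.
  set (e := Rabs (l - u n) - 2 * K * (/2) ^ n).
  assert (He : 0 < e) by (unfold e; lra).
  destruct (Hl e He) as [N HN]. set (k := Nat.max N n).
  specialize (HN k ltac:(unfold k; lia)). unfold R_dist in HN.
  pose proof (G n (k - n)%nat). replace (k - n + n)%nat with k in H0 by (unfold k; lia).
  pose proof (half_pos k).
  assert (T : Rabs (l - u n) <= Rabs (u k - u n) + Rabs (u k - l)).
  { replace (l - u n) with ((u k - u n) + - (u k - l)) by ring. eapply Rle_trans. apply Rabs_triang. rewrite Rabs_Ropp. lra. }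
  assert (0 <= 2 * K * (/2) ^ k) by nra.
  unfold e in HN. lra.
Qed.

Lemma Tri_bound g A B Cc M : segc g A B -> segc g B Cc -> segc g Cc A ->
  (forall s, 0 <= s <= 1 -> Cmod (g (line A B s)) <= M) ->
  (forall s, 0 <= s <= 1 -> Cmod (g (line B Cc s)) <= M) ->
  (forall s, 0 <= s <= 1 -> Cmod (g (line Cc A s)) <= M) ->
  Cmod (Tri g A B Cc) <= 2 * M * (Cmod (Cminus B A) + Cmod (Cminus Cc B) + Cmod (Cminus A Cc)).
Proof.
  intros H1 H2 H3 K1 K2 K3. unfold Tri.
  pose proof (Seg_bound g A B M H1 K1). pose proof (Seg_bound g B Cc M H2 K2). pose proof (Seg_bound g Cc A M H3 K3).
  eapply Rle_trans. apply Cmod_triangle3. lra.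
Qed.

Theorem goursat f a b c : (forall p, inS p -> exists d, cdiff f (Pt a b c p) d) -> Tri f a b c = RtoC 0.
Proof.
  intros Hd.
  set (t0 := (((0,0) : pt2), ((1,0) : pt2), ((0,1) : pt2))).
  set (T := fun n => Nat.iter n (pick f a b c) t0).
  assert (TS : forall n, T (S n) = pick f a b c (T n)) by (intros; reflexivity).
  assert (Hin : forall n, inT (T n)).
  { induction n. simpl. unfold inT, inS, t0, v1, v2, v3; simpl. lra.
    rewrite TS. apply pick_inT; auto. }
  assert (HD : forall n, Dsum (T n) = 4 * (/2) ^ n).
  { induction n. simpl. unfold Dsum, dist1, t0, v1, v2, v3; simpl.
    replace (0 - 1) with (-1) by ring. replace (1 - 0) with 1 by ring. replace (0 - 0) with 0 by ring.
    rewrite Rabs_R0, Rabs_R1, Rabs_m1. lra.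
    rewrite TS, pick_Dsum, IHn. rewrite half_S. field. }
  assert (HX : forall n, Cmod (TriC f a b c (T O)) <= 4 ^ n * Cmod (TriC f a b c (T n))).
  { induction n. simpl. lra. rewrite TS.
    pose proof (pick_ge f a b c Hd (T n) (Hin n)). pose proof (pow_le 4 n ltac:(lra)).
    eapply Rle_trans. apply IHn. replace (4 ^ S n) with (4 ^ n * 4) by (simpl; ring).
    rewrite Rmult_assoc. apply Rmult_le_compat_l; auto. }
  set (u := fun n => fst (v1 (T n))). set (w := fun n => snd (v1 (T n))).
  assert (Hu : forall n, Rabs (u (S n) - u n) <= 4 * (/2) ^ n).
  { intros n. unfold u. rewrite TS. pose proof (pick_v1 f a b c (T n)). rewrite HD in H.
    unfold dist1 in H. pose proof (Rabs_pos (snd (v1 (pick f a b c (T n))) - snd (v1 (T n)))). lra. }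
  assert (Hw : forall n, Rabs (w (S n) - w n) <= 4 * (/2) ^ n).
  { intros n. unfold w. rewrite TS. pose proof (pick_v1 f a b c (T n)). rewrite HD in H.
    unfold dist1 in H. pose proof (Rabs_pos (fst (v1 (pick f a b c (T n))) - fst (v1 (T n)))). lra. }
  destruct (geom_limit u 4 ltac:(lra) Hu) as [l Hl].
  destruct (geom_limit w 4 ltac:(lra) Hw) as [m Hm].
  set (pi := (l, m) : pt2).
  assert (Hpi : forall n, dist1 (v1 (T n)) pi <= 16 * (/2) ^ n).
  { intros n. unfold dist1, pi; simpl. rewrite (Rabs_minus_sym (fst _)), (Rabs_minus_sym (snd _)).
    specialize (Hl n). specialize (Hm n). unfold u, w in *. lra. }
  assert (HpiS : inS pi).
  { unfold inS, pi; simpl. split; [|split].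
    - assert (-l <= 0); [|lra]. apply (le_of_small _ 8); [lra|]. intros n.
      specialize (Hl n). destruct (Hin n) as [[A1 [A2 A3]] _]. unfold u in Hl.
      pose proof (Rle_abs (u n - l)). rewrite Rabs_minus_sym in Hl. unfold u in *. lra.
    - assert (-m <= 0); [|lra]. apply (le_of_small _ 8); [lra|]. intros n.
      specialize (Hm n). destruct (Hin n) as [[A1 [A2 A3]] _].
      pose proof (Rle_abs (w n - m)). rewrite Rabs_minus_sym in Hm. unfold w in *. lra.
    - assert (l + m - 1 <= 0); [|lra]. apply (le_of_small _ 16); [lra|]. intros n.
      specialize (Hl n). specialize (Hm n). destruct (Hin n) as [[A1 [A2 A3]] _].
      pose proof (Rle_abs (l - u n)). pose proof (Rle_abs (m - w n)). unfold u, w in *. lra. }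
  destruct (Hd pi HpiS) as [d0 Hd0].
  set (z0 := Pt a b c pi).
  set (X := Cmod (TriC f a b c (T O))).
  assert (HXle : forall eps, 0 < eps -> X <= 160 * eps * (LL a b c) ^ 2).
  { intros eps Heps. destruct (Hd0 eps Heps) as [del [Hdel Kdel]].
    pose proof (LL_pos a b c) as HLL.
    destruct (half_small (del / (20 * (LL a b c + 1)))) as [n Hn]. apply Rdiv_lt_0_compat; lra.
    pose proof (half_pos n) as Hh.
    assert (Hn' : LL a b c * (20 * (/2) ^ n) < del).
    { assert ((/2) ^ n * (20 * (LL a b c + 1)) < del).
      { apply (Rmult_lt_reg_r (/ (20 * (LL a b c + 1)))). apply Rinv_0_lt_compat; lra.
        rewrite Rmult_assoc, Rinv_r by lra. lra. }
      nra. }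
    set (t := T n).
    assert (Hv1 : dist1 (v1 t) pi <= 20 * (/2) ^ n) by (pose proof (Hpi n); unfold t; lra).
    assert (Hv2 : dist1 (v2 t) pi <= 20 * (/2) ^ n).
    { destruct (v23_near t). pose proof (dist1_tri (v2 t) (v1 t) pi). unfold t in *. rewrite HD in *. pose proof (Hpi n). lra. }
    assert (Hv3 : dist1 (v3 t) pi <= 20 * (/2) ^ n).
    { destruct (v23_near t). pose proof (dist1_tri (v3 t) (v1 t) pi). unfold t in *. rewrite HD in *. pose proof (Hpi n). lra. }
    destruct (Hin n) as [I1 [I2 I3]]. fold t in I1, I2, I3.
    set (Af := fun x => Cplus (f z0) (Cmult d0 (Cminus x z0))).
    set (g := fun x => Cplus (f x) (Cmult (RtoC (-1)) (Af x))).
    assert (Hfg : forall x, f x = Cplus (g x) (Af x)).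
    { intros x. unfold g. replace (RtoC (-1)) with (Copp (RtoC 1)) by (unfold RtoC, Copp; simpl; f_equal; ring). ring. }
    assert (HAc : forall x, ccont Af x).
    { intros x. apply ccont_plus. apply ccont_const. apply ccont_cmul.
      intros e He. exists e. split; auto. intros y Hy.
      replace (Cminus (Cminus y z0) (Cminus x z0)) with (Cminus y x) by ring. auto. }
    assert (Hsg : forall p q, inS p -> inS q -> segc g (Pt a b c p) (Pt a b c q)).
    { intros p q Hp Hq. apply segc_plus. apply segc_S; auto. apply segc_cmul. intros s _. apply HAc. }
    assert (HsA : forall p q, segc Af p q) by (intros p q s _; apply HAc).
    assert (Hg : forall p q, dist1 p pi <= 20 * (/2) ^ n -> dist1 q pi <= 20 * (/2) ^ n ->
               forall s, 0 <= s <= 1 -> Cmod (g (line (Pt a b c p) (Pt a b c q) s)) <= eps * (LL a b c * (20 * (/2) ^ n))).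
    { intros p q Hp Hq s Hs. rewrite Pt_line.
      set (x := Pt a b c (lerp p q s)).
      assert (Hx : Cmod (Cminus x z0) <= LL a b c * (20 * (/2) ^ n)).
      { eapply Rle_trans. apply Pt_lip. apply Rmult_le_compat_l; auto.
        eapply Rle_trans. apply dist1_lerp; auto. nra. }
      specialize (Kdel (Cminus x z0) ltac:(lra)).
      fold z0 in Kdel. replace (Cplus z0 (Cminus x z0)) with x in Kdel by ring.
      replace (g x) with (Cminus (Cminus (f x) (f z0)) (Cmult d0 (Cminus x z0))).
      2:{ unfold g, Af. replace (RtoC (-1)) with (Copp (RtoC 1)) by (unfold RtoC, Copp; simpl; f_equal; ring). ring. }
      eapply Rle_trans; [exact Kdel|]. apply Rmult_le_compat_l; lra. }
    assert (Htf : TriC f a b c t = Tri g (Pt a b c (v1 t)) (Pt a b c (v2 t)) (Pt a b c (v3 t))).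
    { unfold TriC. unfold Tri.
      rewrite !(Seg_ext f (fun x => Cplus (g x) (Af x))) by auto.
      rewrite !Seg_plus by (apply Hsg || apply HsA; auto).
      pose proof (Tri_affine (f z0) d0 z0 (Pt a b c (v1 t)) (Pt a b c (v2 t)) (Pt a b c (v3 t))) as TA.
      unfold Tri in TA. fold Af in TA. 
      transitivity (Cplus (Cplus (Cplus (Seg g (Pt a b c (v1 t)) (Pt a b c (v2 t))) (Seg g (Pt a b c (v2 t)) (Pt a b c (v3 t)))) (Seg g (Pt a b c (v3 t)) (Pt a b c (v1 t))))
        (Cplus (Cplus (Seg Af (Pt a b c (v1 t)) (Pt a b c (v2 t))) (Seg Af (Pt a b c (v2 t)) (Pt a b c (v3 t)))) (Seg Af (Pt a b c (v3 t)) (Pt a b c (v1 t))))).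
      ring. unfold Af in *. rewrite TA. ring. }
    assert (Hbt : Cmod (TriC f a b c t) <= 2 * (eps * (LL a b c * (20 * (/2) ^ n))) * (LL a b c * (4 * (/2) ^ n))).
    { rewrite Htf. eapply Rle_trans. apply Tri_bound.
      1-3: apply Hsg; auto.
      1-3: intros s Hs; apply Hg; auto.
      apply Rmult_le_compat_l. pose proof (LL_pos a b c). assert (0 <= LL a b c * (20 * (/ 2) ^ n)) by nra. nra.
      rewrite <- (HD n). fold t. unfold Dsum.
      pose proof (Pt_lip a b c (v2 t) (v1 t)). pose proof (Pt_lip a b c (v3 t) (v2 t)). pose proof (Pt_lip a b c (v1 t) (v3 t)).
      rewrite (dist1_sym (v1 t) (v2 t)), (dist1_sym (v2 t) (v3 t)), (dist1_sym (v3 t) (v1 t)). nra. }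
    pose proof (HX n). fold X in H. fold t in H.
    assert (E : 4 ^ n * ((/2) ^ n * (/2) ^ n) = 1).
    { rewrite <- Rpow_mult_distr. rewrite <- Rpow_mult_distr. replace (4 * (/2 * /2)) with 1 by field. apply pow1. }
    pose proof (pow_le 4 n ltac:(lra)).
    apply Rle_trans with (4 ^ n * (2 * (eps * (LL a b c * (20 * (/2) ^ n))) * (LL a b c * (4 * (/2) ^ n)))).
    { apply Rle_trans with (4 ^ n * Cmod (TriC f a b c t)); auto. apply Rmult_le_compat_l; auto. }
    replace (4 ^ n * (2 * (eps * (LL a b c * (20 * (/ 2) ^ n))) * (LL a b c * (4 * (/ 2) ^ n))))
      with (160 * eps * LL a b c ^ 2 * (4 ^ n * ((/2) ^ n * (/2) ^ n))) by ring.
    rewrite E. lra. }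
  assert (X0 : X <= 0).
  { destruct (Rle_dec X 0) as [|HX0]; auto. exfalso.
    pose proof (LL_pos a b c).
    specialize (HXle (X / (320 * (LL a b c ^ 2 + 1)))).
    assert (0 < X / (320 * (LL a b c ^ 2 + 1))) by (apply Rdiv_lt_0_compat; nra).
    specialize (HXle H0).
    assert (160 * (X / (320 * (LL a b c ^ 2 + 1))) * LL a b c ^ 2 < X).
    { replace (160 * (X / (320 * (LL a b c ^ 2 + 1))) * LL a b c ^ 2) with (X * (LL a b c ^2 / (2 * (LL a b c ^ 2 + 1)))) by (field; nra).
      assert (LL a b c ^2 / (2 * (LL a b c ^ 2 + 1)) < 1).
      { apply (Rmult_lt_reg_r (2 * (LL a b c ^ 2 + 1))). nra. unfold Rdiv. rewrite Rmult_assoc, Rinv_l by nra. nra. }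
      nra. }
    lra. }
  assert (X = 0) by (pose proof (Cmod_ge0 (TriC f a b c (T O))); unfold X in *; lra).
  apply Cmod_eq_0 in H.
  unfold TriC, T, t0, v1, v2, v3 in H; simpl in H.
  replace (Pt a b c (0, 0)) with a in H by (unfold Pt; simpl; ring).
  replace (Pt a b c (1, 0)) with b in H by (unfold Pt; simpl; ring).
  replace (Pt a b c (0, 1)) with c in H by (unfold Pt; simpl; ring).
  exact H.
Qed.
Lemma cdiff_local f g z d : (exists del, 0 < del /\ forall y, Cmod (Cminus y z) < del -> f y = g y) ->
  cdiff g z d -> cdiff f z d.
Proof.
  intros [del [Hdel Hfg]] Hg eps Heps. destruct (Hg eps Heps) as [d1 [Hd1 K]].
  exists (Rmin d1 del). split. apply Rmin_pos; auto.
  intros h Hh. pose proof (Rmin_l d1 del). pose proof (Rmin_r d1 del).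
  rewrite (Hfg (Cplus z h)), (Hfg z).
  - apply K. lra.
  - replace (Cminus z z) with (RtoC 0) by ring. rewrite Cmod_0. lra.
  - replace (Cminus (Cplus z h) z) with h by ring. lra.
Qed.

Lemma cdiff_const c z : cdiff (fun _ => c) z (RtoC 0).
Proof.
  intros eps Heps. exists 1. split; [lra|]. intros h _.
  replace (Cminus (Cminus c c) (Cmult (RtoC 0) h)) with (RtoC 0) by ring. rewrite Cmod_0.
  pose proof (Cmod_ge0 h). nra.
Qed.

Lemma cdiff_id z : cdiff (fun x => x) z (RtoC 1).
Proof.
  intros eps Heps. exists 1. split; [lra|]. intros h _.
  replace (Cminus (Cminus (Cplus z h) z) (Cmult (RtoC 1) h)) with (RtoC 0) by ring. rewrite Cmod_0.
  pose proof (Cmod_ge0 h). nra.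
Qed.

Lemma cdiff_plus f g z df dg : cdiff f z df -> cdiff g z dg ->
  cdiff (fun x => Cplus (f x) (g x)) z (Cplus df dg).
Proof.
  intros Hf Hg eps Heps. destruct (Hf (eps/2) ltac:(lra)) as [d1 [Hd1 K1]].
  destruct (Hg (eps/2) ltac:(lra)) as [d2 [Hd2 K2]].
  exists (Rmin d1 d2). split. apply Rmin_pos; auto.
  intros h Hh. pose proof (Rmin_l d1 d2). pose proof (Rmin_r d1 d2).
  specialize (K1 h ltac:(lra)). specialize (K2 h ltac:(lra)).
  replace (Cminus (Cminus (Cplus (f (Cplus z h)) (g (Cplus z h))) (Cplus (f z) (g z))) (Cmult (Cplus df dg) h))
    with (Cplus (Cminus (Cminus (f (Cplus z h)) (f z)) (Cmult df h)) (Cminus (Cminus (g (Cplus z h)) (g z)) (Cmult dg h))) by ring.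
  eapply Rle_trans. apply Cmod_triangle. lra.
Qed.

Lemma cdiff_mult f g z df dg : cdiff f z df -> cdiff g z dg ->
  cdiff (fun x => Cmult (f x) (g x)) z (Cplus (Cmult df (g z)) (Cmult (f z) dg)).
Proof.
  intros Hf Hg eps Heps.
  pose proof (cdiff_cont g z dg Hg) as Gc.
  set (A := Cmod (f z)). set (B := Cmod (g z)). set (D := Cmod df).
  assert (HA : 0 <= A) by apply Cmod_ge0. assert (HB : 0 <= B) by apply Cmod_ge0. assert (HD : 0 <= D) by apply Cmod_ge0.
  set (e := eps / (A + B + D + 3)).
  assert (He : 0 < e) by (apply Rdiv_lt_0_compat; lra).
  assert (He3 : e * (A + B + D + 3) = eps) by (unfold e; field; lra).
  destruct (Hf e He) as [d1 [Hd1 K1]]. destruct (Hg e He) as [d2 [Hd2 K2]].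
  destruct (Gc (Rmin 1 e) ltac:(apply Rmin_pos; lra)) as [d3 [Hd3 K3]].
  exists (Rmin d1 (Rmin d2 d3)). split. repeat apply Rmin_pos; auto.
  intros h Hh. pose proof (Rmin_l d1 (Rmin d2 d3)). pose proof (Rmin_r d1 (Rmin d2 d3)).
  pose proof (Rmin_l d2 d3). pose proof (Rmin_r d2 d3).
  specialize (K1 h ltac:(lra)). specialize (K2 h ltac:(lra)).
  specialize (K3 (Cplus z h) ltac:(replace (Cminus (Cplus z h) z) with h by ring; lra)).
  pose proof (Rmin_l 1 e). pose proof (Rmin_r 1 e).
  set (E1 := Cminus (Cminus (f (Cplus z h)) (f z)) (Cmult df h)) in *.
  set (E2 := Cminus (Cminus (g (Cplus z h)) (g z)) (Cmult dg h)) in *.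
  set (E3 := Cminus (g (Cplus z h)) (g z)) in *.
  replace (Cminus (Cminus (Cmult (f (Cplus z h)) (g (Cplus z h))) (Cmult (f z) (g z))) (Cmult (Cplus (Cmult df (g z)) (Cmult (f z) dg)) h))
    with (Cplus (Cplus (Cmult E1 (Cplus (g z) E3)) (Cmult (Cmult df h) E3)) (Cmult (f z) E2))
    by (unfold E1, E2, E3; ring).
  eapply Rle_trans. apply Cmod_triangle3. rewrite !Cmod_mult.
  pose proof (Cmod_triangle (g z) E3). fold B in H5.
  pose proof (Cmod_ge0 E1). pose proof (Cmod_ge0 E2). pose proof (Cmod_ge0 E3). pose proof (Cmod_ge0 h).
  assert (Cmod E1 * Cmod (Cplus (g z) E3) <= e * Cmod h * (B + 1)).
  { apply Rmult_le_compat; auto. apply Cmod_ge0. lra. }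
  assert (D * Cmod h * Cmod E3 <= D * Cmod h * e).
  { apply Rmult_le_compat_l. nra. lra. }
  assert (A * Cmod E2 <= A * (e * Cmod h)) by (apply Rmult_le_compat_l; lra).
  fold D A. nra.
Qed.

Lemma cdiff_invsh w z : z <> w ->
  cdiff (fun x => Cinv (Cminus x w)) z (Copp (Cinv (Cmult (Cminus z w) (Cminus z w)))).
Proof.
  intros Hz eps Heps.
  set (u := Cminus z w).
  assert (Hu : u <> RtoC 0) by (unfold u; intros E; apply Hz; apply (f_equal (fun t => Cplus t w)) in E; ring_simplify in E; rewrite E; ring).
  assert (Hum : 0 < Cmod u) by (apply Cmod_gt_0; auto).
  exists (Rmin (Cmod u / 2) (eps * (Cmod u ^ 3) / 2)). split.
  { apply Rmin_pos. lra. apply Rdiv_lt_0_compat; [|lra]. apply Rmult_lt_0_compat; auto. apply pow_lt; auto. }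
  intros h Hh. pose proof (Rmin_l (Cmod u / 2) (eps * (Cmod u ^ 3) / 2)). pose proof (Rmin_r (Cmod u / 2) (eps * (Cmod u ^ 3) / 2)).
  assert (Huh : Cplus u h <> RtoC 0).
  { intros E. assert (h = Copp u) by (apply (f_equal (fun t => Cminus t u)) in E; ring_simplify in E; rewrite E; ring).
    rewrite H1, Cmod_opp in Hh. lra. }
  replace (Cminus (Cplus z h) w) with (Cplus u h) by (unfold u; ring).
  fold u.
  replace (Cminus (Cminus (Cinv (Cplus u h)) (Cinv u)) (Cmult (Copp (Cinv (Cmult u u))) h))
    with (Cmult (Cmult h h) (Cinv (Cmult (Cmult u u) (Cplus u h)))) by (field; auto).
  rewrite Cmod_mult, Cmod_mult, Cmod_inv, !Cmod_mult.
  2:{ apply Cmult_neq_0; auto. apply Cmult_neq_0; auto. }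
  assert (Hlow : Cmod u / 2 <= Cmod (Cplus u h)).
  { pose proof (Cmod_triangle (Cplus u h) (Copp h)). replace (Cplus (Cplus u h) (Copp h)) with u in H1 by ring.
    rewrite Cmod_opp in H1. lra. }
  pose proof (Cmod_ge0 h).
  assert (Hp : 0 < Cmod u * Cmod u * Cmod (Cplus u h)) by (apply Rmult_lt_0_compat; [nra|lra]).
  apply (Rmult_le_reg_r (Cmod u * Cmod u * Cmod (Cplus u h))); auto.
  rewrite Rmult_assoc, Rinv_l by lra. rewrite Rmult_1_r.
  assert (Cmod h <= eps * Cmod u ^ 3 / 2) by lra.
  assert (eps * (Cmod u ^ 3 / 2) <= eps * (Cmod u * Cmod u * Cmod (Cplus u h))).
  { apply Rmult_le_compat_l. lra. simpl. nra. }
  nra.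
Qed.

Lemma cdiff_pow f z df k : cdiff f z df ->
  cdiff (fun x => Cpow (f x) (S k)) z (Cmult (RtoC (INR (S k))) (Cmult (Cpow (f z) k) df)).
Proof.
  intros Hf. induction k.
  - simpl. eapply cdiff_local. exists 1. split; [lra|]. intros y _. rewrite Cmult_1_r. reflexivity.
    replace (Cmult (RtoC 1) (Cmult (RtoC 1) df)) with df by ring. auto.
  - eapply cdiff_local. exists 1. split; [lra|]. intros y _. reflexivity.
    pose proof (cdiff_mult f (fun x => Cpow (f x) (S k)) z df _ Hf IHk) as M.
    replace (Cmult (RtoC (INR (S (S k)))) (Cmult (Cpow (f z) (S k)) df))
      with (Cplus (Cmult df (Cpow (f z) (S k))) (Cmult (f z) (Cmult (RtoC (INR (S k))) (Cmult (Cpow (f z) k) df)))).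
    exact M. rewrite !S_INR, !RtoC_plus. simpl. ring.
Qed.
Lemma disc_line a b s rho : Cmod a < rho -> Cmod b < rho -> 0 <= s <= 1 -> Cmod (line a b s) < rho.
Proof.
  intros Ha Hb Hs. unfold line.
  replace (Cplus a (Cmult (RtoC s) (Cminus b a))) with (Cplus (Cmult (RtoC (1 - s)) a) (Cmult (RtoC s) b)) by (rewrite RtoC_minus; ring).
  eapply Rle_lt_trans. apply Cmod_triangle. rewrite !Cmod_mult, !Cmod_R.
  rewrite !Rabs_right by lra.
  assert (0 <= (1 - s) * (rho - Cmod a)) by nra. assert (0 <= s * (rho - Cmod b)) by nra.
  destruct (Rle_dec s (1/2)).
  - assert (0 < (1 - s) * (rho - Cmod a)) by (apply Rmult_lt_0_compat; lra). nra.
  - assert (0 < s * (rho - Cmod b)) by (apply Rmult_lt_0_compat; lra). nra.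
Qed.

Lemma disc_Pt w a b p rho : Cmod w < rho -> Cmod a < rho -> Cmod b < rho -> inS p -> Cmod (Pt w a b p) < rho.
Proof.
  intros Hw Ha Hb [H1 [H2 H3]]. unfold Pt.
  replace (Cplus w (Cplus (Cmult (RtoC (fst p)) (Cminus a w)) (Cmult (RtoC (snd p)) (Cminus b w))))
    with (Cplus (Cplus (Cmult (RtoC (1 - fst p - snd p)) w) (Cmult (RtoC (fst p)) a)) (Cmult (RtoC (snd p)) b))
    by (rewrite !RtoC_minus; ring).
  eapply Rle_lt_trans. apply Cmod_triangle3. rewrite !Cmod_mult, !Cmod_R.
  rewrite !Rabs_right by lra.
  set (l := fst p) in *. set (m := snd p) in *.
  assert (0 <= (1 - l - m) * (rho - Cmod w)) by nra. assert (0 <= l * (rho - Cmod a)) by nra.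
  assert (0 <= m * (rho - Cmod b)) by nra.
  destruct (Rle_dec l (1/3)); destruct (Rle_dec m (1/3)).
  - assert (0 < (1 - l - m) * (rho - Cmod w)) by (apply Rmult_lt_0_compat; lra). nra.
  - assert (0 < m * (rho - Cmod b)) by (apply Rmult_lt_0_compat; lra). nra.
  - assert (0 < l * (rho - Cmod a)) by (apply Rmult_lt_0_compat; lra). nra.
  - assert (0 < l * (rho - Cmod a)) by (apply Rmult_lt_0_compat; lra). nra.
Qed.

Definition cross (u v : C) := fst u * snd v - snd u * fst v.

Lemma indep u v al be : cross u v <> 0 ->
  Cplus (Cmult (RtoC al) u) (Cmult (RtoC be) v) = RtoC 0 -> al = 0 /\ be = 0.
Proof.
  intros Hc E. unfold cross in Hc. destruct u as [u1 u2], v as [v1 v2].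
  unfold RtoC, Cmult, Cplus in E; simpl in *. injection E as E1 E2.
  assert (A1 : al * u1 + be * v1 = 0) by (rewrite <- E1; ring).
  assert (A2 : al * u2 + be * v2 = 0) by (rewrite <- E2; ring).
  split.
  - apply (Rmult_eq_reg_r (u1 * v2 - u2 * v1)); auto. rewrite Rmult_0_l.
    transitivity (v2 * (al * u1 + be * v1) - v1 * (al * u2 + be * v2)). ring. rewrite A1, A2. ring.
  - apply (Rmult_eq_reg_r (u1 * v2 - u2 * v1)); auto. rewrite Rmult_0_l.
    transitivity (u1 * (al * u2 + be * v2) - u2 * (al * u1 + be * v1)). ring. rewrite A1, A2. ring.
Qed.

Lemma Seg_on_line q w u al be : rcont_on (fun x => q (Cplus w (Cmult (RtoC x) u))) al be ->
  Seg q (Cplus w (Cmult (RtoC al) u)) (Cplus w (Cmult (RtoC be) u)) =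
  Cmult (CInt (fun x => q (Cplus w (Cmult (RtoC x) u))) al be) u.
Proof.
  intros H. unfold Seg.
  set (G := fun x => q (Cplus w (Cmult (RtoC x) u))).
  replace (Cminus (Cplus w (Cmult (RtoC be) u)) (Cplus w (Cmult (RtoC al) u))) with (Cmult (RtoC (be - al)) u) by (rewrite RtoC_minus; ring).
  rewrite Cmult_assoc. f_equal.
  rewrite (CInt_ext _ (fun s => G ((be - al) * s + al))).
  2:{ intros s. unfold G, line. f_equal. rewrite RtoC_plus, RtoC_mult, RtoC_minus. ring. }
  rewrite Cmult_comm. rewrite <- CInt_cmul.
  - rewrite CInt_comp_lin. f_equal; ring.
    replace ((be - al) * 0 + al) with al by ring. replace ((be - al) * 1 + al) with be by ring. auto.
  - intros x Hx. rewrite Rmin_left, Rmax_right in Hx by lra.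
    assert (Hm : Rmin al be <= (be - al) * x + al <= Rmax al be).
    { unfold Rmin, Rmax. destruct (Rle_dec al be); nra. }
    specialize (H _ Hm).
    intros eps Heps. destruct (H eps Heps) as [d [Hd K]].
    exists (d / (Rabs (be - al) + 1)). split. apply Rdiv_lt_0_compat; auto. pose proof (Rabs_pos (be - al)); lra.
    intros y Hy. apply K.
    replace ((be - al) * y + al - ((be - al) * x + al)) with ((be - al) * (y - x)) by ring.
    rewrite Rabs_mult. pose proof (Rabs_pos (be - al)). pose proof (Rabs_pos (y - x)).
    assert (Rabs (y - x) * (Rabs (be - al) + 1) < d).
    { apply (Rmult_lt_reg_r (/ (Rabs (be - al) + 1))). apply Rinv_0_lt_compat; lra.
      rewrite Rmult_assoc, Rinv_r by lra. lra. }
    nra.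
Qed.

Lemma line_pt_bound w u al be x rho : Cmod (Cplus w (Cmult (RtoC al) u)) < rho -> Cmod (Cplus w (Cmult (RtoC be) u)) < rho ->
  Rmin al be <= x <= Rmax al be -> Cmod (Cplus w (Cmult (RtoC x) u)) < rho.
Proof.
  intros Ha Hb Hx.
  destruct (Req_dec al be) as [E|Hne].
  - subst. rewrite Rmin_left, Rmax_left in Hx by lra. replace x with be by lra. auto.
  - set (lam := (x - al) / (be - al)).
    assert (Hl : 0 <= lam <= 1).
    { unfold lam, Rmin, Rmax in *. destruct (Rle_dec al be).
      - split. apply Rdiv_le_0_compat; lra. apply (Rmult_le_reg_r (be - al)). lra. unfold Rdiv. rewrite Rmult_assoc, Rinv_l by lra. lra.
      - replace ((x - al) / (be - al)) with ((al - x) / (al - be)) by (field; lra).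
        split. apply Rdiv_le_0_compat; lra. apply (Rmult_le_reg_r (al - be)). lra. unfold Rdiv. rewrite Rmult_assoc, Rinv_l by lra. lra. }
    replace (Cplus w (Cmult (RtoC x) u)) with (line (Cplus w (Cmult (RtoC al) u)) (Cplus w (Cmult (RtoC be) u)) lam).
    apply disc_line; auto.
    unfold line. replace (RtoC x) with (RtoC (al + lam * (be - al))) by (f_equal; unfold lam; field; lra).
    rewrite RtoC_plus, RtoC_mult, RtoC_minus. ring.
Qed.

Lemma half_le1 n : (/2) ^ n <= 1.
Proof. induction n. simpl; lra. simpl. pose proof (half_pos n). lra. Qed.

Lemma Ceq_from_diff x y z w : z = RtoC 0 -> w = RtoC 0 -> Cminus x y = Cplus z w -> x = y.
Proof. intros Hz Hw H. rewrite Hz, Hw in H. transitivity (Cplus (Cminus x y) y). ring. rewrite H. ring. Qed.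

Section Vertex.
Variables (q : C -> C) (rho : R) (w : C).
Hypothesis Hc : forall x, Cmod x < rho -> ccont q x.
Hypothesis Hdq : forall x, Cmod x < rho -> x <> w -> exists d, cdiff q x d.
Hypothesis Hw : Cmod w < rho.

Lemma segc_disc a b : Cmod a < rho -> Cmod b < rho -> segc q a b.
Proof. intros Ha Hb s Hs. apply Hc, disc_line; auto. Qed.

Lemma tri_vertex a b : Cmod a < rho -> Cmod b < rho -> Tri q w a b = RtoC 0.
Proof.
  intros Ha Hb.
  set (u := Cminus a w). set (v := Cminus b w).
  destruct (Req_dec (cross u v) 0) as [Hcr|Hcr].
  -
    destruct (Ceq_dec a w) as [Eaw|Naw].
    + subst a. unfold Tri. rewrite Seg_point. rewrite (Seg_rev q w b) by (apply segc_disc; auto). ring.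
    + set (t := (fst v * fst u + snd v * snd u) / (fst u ^ 2 + snd u ^ 2)).
      assert (Hu2 : fst u ^ 2 + snd u ^ 2 <> 0).
      { intros E. apply Naw. assert (fst u = 0 /\ snd u = 0) as [E1 E2] by (split; nra).
        destruct a as [a1 a2], w as [w1 w2]. unfold u, Cminus, Cplus, Copp in E1, E2; simpl in E1, E2. f_equal; lra. }
      assert (Ev : v = Cmult (RtoC t) u).
      { apply injective_projections; [change (fst v = t * fst u - 0 * snd u) | change (snd v = t * snd u + 0 * fst u)].
        - assert (K : t * fst u - fst v = snd u * cross u v / (fst u ^ 2 + snd u ^ 2)) by (unfold t, cross; field; auto).
          rewrite Hcr in K. unfold Rdiv in K. rewrite Rmult_0_r, Rmult_0_l in K. lra.
        - assert (K : t * snd u - snd v = - fst u * cross u v / (fst u ^ 2 + snd u ^ 2)) by (unfold t, cross; field; auto).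
          rewrite Hcr in K. unfold Rdiv in K. rewrite Rmult_0_r, Rmult_0_l in K. lra. }
      assert (Eb : b = Cplus w (Cmult (RtoC t) u)) by (rewrite <- Ev; unfold v; ring).
      assert (Ew : w = Cplus w (Cmult (RtoC 0) u)) by ring.
      assert (Ea : a = Cplus w (Cmult (RtoC 1) u)) by (unfold u; ring).
      set (G := fun x => q (Cplus w (Cmult (RtoC x) u))).
      assert (HG : forall al be, Cmod (Cplus w (Cmult (RtoC al) u)) < rho -> Cmod (Cplus w (Cmult (RtoC be) u)) < rho ->
                 rcont_on G al be).
      { intros al be H1 H2 x Hx. unfold G. apply rcont_comp; [apply Hc; eapply line_pt_bound; [exact H1 | exact H2 | exact Hx] |].
        intros eps Heps. pose proof (Cmod_ge0 u). exists (eps / (Cmod u + 1)). split. apply Rdiv_lt_0_compat; lra.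
        intros y Hy. replace (Cminus (Cplus w (Cmult (RtoC y) u)) (Cplus w (Cmult (RtoC x) u))) with (Cmult (RtoC (y - x)) u) by (rewrite RtoC_minus; ring).
        rewrite Cmod_mult, Cmod_R. pose proof (Rabs_pos (y - x)).
        assert (Rabs (y - x) * (Cmod u + 1) < eps).
        { apply (Rmult_lt_reg_r (/ (Cmod u + 1))). apply Rinv_0_lt_compat; lra.
          rewrite Rmult_assoc, Rinv_r by lra. lra. }
        nra. }
      assert (Hw' : Cmod (Cplus w (Cmult (RtoC 0) u)) < rho) by (rewrite <- Ew; auto).
      assert (Ha' : Cmod (Cplus w (Cmult (RtoC 1) u)) < rho) by (rewrite <- Ea; auto).
      assert (Hb' : Cmod (Cplus w (Cmult (RtoC t) u)) < rho) by (rewrite <- Eb; auto).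
      assert (S1 : Seg q w a = Cmult (CInt G 0 1) u).
      { pose proof (Seg_on_line q w u 0 1 (HG 0 1 Hw' Ha')) as K. rewrite <- Ew, <- Ea in K. exact K. }
      assert (S2 : Seg q a b = Cmult (CInt G 1 t) u).
      { pose proof (Seg_on_line q w u 1 t (HG 1 t Ha' Hb')) as K. rewrite <- Ea, <- Eb in K. exact K. }
      assert (S3 : Seg q b w = Cmult (CInt G t 0) u).
      { pose proof (Seg_on_line q w u t 0 (HG t 0 Hb' Hw')) as K. rewrite <- Ew, <- Eb in K. exact K. }
      unfold Tri. rewrite S1, S2, S3.
      rewrite <- (Cmult_plus_distr_r (CInt G 0 1) (CInt G 1 t) u).
      rewrite <- (Cmult_plus_distr_r (Cplus (CInt G 0 1) (CInt G 1 t)) (CInt G t 0) u).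
      rewrite (CInt_chasles G 0 1 t) by (apply HG; auto).
      rewrite (CInt_chasles G 0 t 0) by (apply HG; auto).
      rewrite CInt_refl. ring.
  -
    set (R0 := Cmod u + Cmod v).
    assert (HR0 : 0 <= R0) by (unfold R0; pose proof (Cmod_ge0 u); pose proof (Cmod_ge0 v); lra).
    assert (Hdec : forall s, 0 < s <= 1 -> Tri q w a b = Tri q w (line w a s) (line w b s)).
    { intros s Hs.
      set (as_ := line w a s). set (bs := line w b s).
      assert (Has : Cmod as_ < rho) by (apply disc_line; auto; lra).
      assert (Hbs : Cmod bs < rho) by (apply disc_line; auto; lra).
      assert (T1 : Tri q as_ a b = RtoC 0).
      { apply goursat. intros p Hp. apply Hdq. apply disc_Pt; auto.
        intros E. destruct Hp as [P1 [P2 P3]].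
        assert (Cplus (Cmult (RtoC (s * (1 - fst p - snd p) + fst p)) u) (Cmult (RtoC (snd p)) v) = RtoC 0).
        { replace (RtoC 0) with (Cminus (Pt as_ a b p) w) by (rewrite E; ring). unfold Pt, as_, line, u, v.
          rewrite !RtoC_plus, !RtoC_mult, !RtoC_minus. ring. }
        apply indep in H; auto. nra. }
      assert (T2 : Tri q as_ b bs = RtoC 0).
      { apply goursat. intros p Hp. apply Hdq. apply disc_Pt; auto.
        intros E. destruct Hp as [P1 [P2 P3]].
        assert (Cplus (Cmult (RtoC (s * (1 - fst p - snd p))) u) (Cmult (RtoC (fst p + snd p * s)) v) = RtoC 0).
        { replace (RtoC 0) with (Cminus (Pt as_ b bs p) w) by (rewrite E; ring). unfold Pt, as_, bs, line, u, v.
          rewrite !RtoC_plus, !RtoC_mult, !RtoC_minus. ring. }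
        apply indep in H; auto. nra. }
      unfold Tri in *.
      rewrite (Seg_split q w a s) by (try apply segc_disc; auto; lra). fold as_.
      rewrite (Seg_split q b w (1 - s)) by (try apply segc_disc; auto; lra).
      replace (line b w (1 - s)) with bs by (unfold bs, line; rewrite RtoC_minus; ring).
      rewrite (Seg_rev q as_ b) in T1 by (apply segc_disc; auto).
      rewrite (Seg_rev q as_ bs) in T2 by (apply segc_disc; auto).
      eapply (Ceq_from_diff _ _ _ _ T1 T2). ring. }
    destruct (Hc w Hw 1 ltac:(lra)) as [d1 [Hd1 K1]].
    set (M := Cmod (q w) + 1).
    assert (HM : 0 < M) by (unfold M; pose proof (Cmod_ge0 (q w)); lra).
    assert (Small : forall s, 0 < s <= 1 -> s * R0 < d1 -> Cmod (Tri q w a b) <= 2 * M * (s * (2 * R0))).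
    { intros s Hs Hsd. rewrite (Hdec s Hs).
      assert (Hpt : forall x, Cmod (Cminus x w) <= s * R0 -> Cmod (q x) <= M).
      { intros x Hx. specialize (K1 x ltac:(lra)).
        pose proof (Cmod_triangle (Cminus (q x) (q w)) (q w)). replace (Cplus (Cminus (q x) (q w)) (q w)) with (q x) in H by ring.
        unfold M. lra. }
      pose proof (Cmod_ge0 u). pose proof (Cmod_ge0 v).
      eapply Rle_trans. apply Tri_bound.
      1-3: apply segc_disc; auto; apply disc_line; auto; lra.
      - intros t Ht. apply Hpt. unfold line. 
        replace (Cminus (Cplus w (Cmult (RtoC t) (Cminus (Cplus w (Cmult (RtoC s) (Cminus a w))) w))) w) with (Cmult (RtoC (t * s)) u) by (unfold u; rewrite RtoC_mult; ring).
        rewrite Cmod_mult, Cmod_R, Rabs_right by nra. unfold R0.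
        assert (0 <= s * Cmod u) by nra. assert (t * (s * Cmod u) <= 1 * (s * Cmod u)) by (apply Rmult_le_compat_r; lra).
        assert (0 <= s * Cmod v) by nra. nra.
      - intros t Ht. apply Hpt. unfold line.
        replace (Cminus (Cplus (Cplus w (Cmult (RtoC s) (Cminus a w))) (Cmult (RtoC t) (Cminus (Cplus w (Cmult (RtoC s) (Cminus b w))) (Cplus w (Cmult (RtoC s) (Cminus a w)))))) w)
          with (Cplus (Cmult (RtoC (s * (1 - t))) u) (Cmult (RtoC (s * t)) v)) by (unfold u, v; rewrite !RtoC_mult, RtoC_minus; ring).
        eapply Rle_trans. apply Cmod_triangle. rewrite !Cmod_mult, !Cmod_R, !Rabs_right by nra. unfold R0.
        assert (0 <= s * Cmod u) by nra. assert ((1 - t) * (s * Cmod u) <= 1 * (s * Cmod u)) by (apply Rmult_le_compat_r; lra).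
        assert (0 <= s * Cmod v) by nra. assert (t * (s * Cmod v) <= 1 * (s * Cmod v)) by (apply Rmult_le_compat_r; lra). nra.
      - intros t Ht. apply Hpt. unfold line.
        replace (Cminus (Cplus (Cplus w (Cmult (RtoC s) (Cminus b w))) (Cmult (RtoC t) (Cminus w (Cplus w (Cmult (RtoC s) (Cminus b w)))))) w)
          with (Cmult (RtoC (s * (1 - t))) v) by (unfold v; rewrite !RtoC_mult, RtoC_minus; ring).
        rewrite Cmod_mult, Cmod_R, Rabs_right by nra. unfold R0.
        assert (0 <= s * Cmod v) by nra. assert ((1 - t) * (s * Cmod v) <= 1 * (s * Cmod v)) by (apply Rmult_le_compat_r; lra).
        assert (0 <= s * Cmod u) by nra. nra.
      - apply Rmult_le_compat_l. lra. unfold line.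
        replace (Cminus (Cplus w (Cmult (RtoC s) (Cminus a w))) w) with (Cmult (RtoC s) u) by (unfold u; ring).
        replace (Cminus (Cplus w (Cmult (RtoC s) (Cminus b w))) (Cplus w (Cmult (RtoC s) (Cminus a w)))) with (Cmult (RtoC s) (Cminus v u)) by (unfold u, v; ring).
        replace (Cminus w (Cplus w (Cmult (RtoC s) (Cminus b w)))) with (Cmult (RtoC (- s)) v) by (unfold v; rewrite RtoC_opp; ring).
        rewrite !Cmod_mult, !Cmod_R. rewrite Rabs_right by lra. rewrite Rabs_left1 by lra.
        pose proof (Cmod_minus_le v u). unfold R0. nra. }
    assert (Z : Cmod (Tri q w a b) <= 0).
    { apply (le_of_small _ (2 * M * (2 * R0))). nra. intros n.
      destruct (half_small (d1 / (R0 + 1))) as [N HN]. apply Rdiv_lt_0_compat; lra.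
      set (s := (/2) ^ (n + N)).
      assert (Hs : 0 < s <= 1). { unfold s. split. apply half_pos. apply half_le1. }
      assert (Hs2 : s <= (/2) ^ n). { unfold s. rewrite pow_add. pose proof (half_pos n). assert ((/2)^N <= 1) by apply half_le1. nra. }
      assert (Hs3 : s <= (/2) ^ N). { unfold s. rewrite pow_add. pose proof (half_pos N). assert ((/2)^n <= 1) by apply half_le1. nra. }
      assert (s * R0 < d1).
      { assert ((/2)^N * (R0 + 1) < d1).
        { apply (Rmult_lt_reg_r (/ (R0 + 1))). apply Rinv_0_lt_compat; lra.
          rewrite Rmult_assoc, Rinv_r by lra. lra. }
        nra. }
      specialize (Small s Hs H).
      assert (0 <= 2*M*(2*R0)) by nra. assert (2*M*(2*R0) * s <= 2*M*(2*R0)*(/2)^n) by (apply Rmult_le_compat_l; lra).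
      lra. }
    apply Cmod_eq_0. pose proof (Cmod_ge0 (Tri q w a b)). lra.
Qed.
End Vertex.
Lemma Seg_const c a b : Seg (fun _ => c) a b = Cmult c (Cminus b a).
Proof. unfold Seg. rewrite CInt_const. replace (1 - 0) with 1 by ring. ring. Qed.

Section Prim.
Variables (q : C -> C) (rho : R) (w : C).
Hypothesis Hc : forall x, Cmod x < rho -> ccont q x.
Hypothesis Hdq : forall x, Cmod x < rho -> x <> w -> exists d, cdiff q x d.
Hypothesis Hw : Cmod w < rho.

Lemma prim_diff z : Cmod z < rho -> cdiff (fun x => Seg q w x) z (q z).
Proof.
  intros Hz eps Heps.
  destruct (Hc z Hz (eps / 4) ltac:(lra)) as [d1 [Hd1 K1]].
  exists (Rmin d1 (rho - Cmod z)). split. apply Rmin_pos; lra.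
  intros h Hh. pose proof (Rmin_l d1 (rho - Cmod z)). pose proof (Rmin_r d1 (rho - Cmod z)).
  assert (Hzh : Cmod (Cplus z h) < rho) by (pose proof (Cmod_triangle z h); lra).
  pose proof (tri_vertex q rho w Hc Hdq Hw z (Cplus z h) Hz Hzh) as T. unfold Tri in T.
  rewrite (Seg_rev q w (Cplus z h)) in T by (apply (segc_disc q rho Hc); auto).
  assert (E : Cminus (Seg q w (Cplus z h)) (Seg q w z) = Seg q z (Cplus z h)).
  { transitivity (Cminus (Seg q z (Cplus z h)) (Cplus (Cplus (Seg q w z) (Seg q z (Cplus z h))) (Copp (Seg q w (Cplus z h))))).
    ring. rewrite T. ring. }
  rewrite E.
  set (g := fun x => Cplus (q x) (Cmult (RtoC (-1)) (q z))).
  assert (Eq : forall x, q x = Cplus (g x) (q z)).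
  { intros x. unfold g. replace (RtoC (-1)) with (Copp (RtoC 1)) by (unfold RtoC, Copp; simpl; f_equal; ring). ring. }
  rewrite (Seg_ext q (fun x => Cplus (g x) (q z))) by auto.
  rewrite Seg_plus.
  2:{ apply segc_plus. apply (segc_disc q rho Hc); auto. apply segc_cmul. intros s _. apply ccont_const. }
  2:{ intros s _. apply ccont_const. }
  rewrite Seg_const.
  replace (Cminus (Cplus (Seg g z (Cplus z h)) (Cmult (q z) (Cminus (Cplus z h) z))) (Cmult (q z) h)) with (Seg g z (Cplus z h)) by ring.
  eapply Rle_trans. apply (Seg_bound g z (Cplus z h) (eps / 4)).
  - apply segc_plus. apply (segc_disc q rho Hc); auto. apply segc_cmul. intros s _. apply ccont_const.
  - intros s Hs. unfold g. replace (Cmult (RtoC (-1)) (q z)) with (Copp (q z)) by (replace (RtoC (-1)) with (Copp (RtoC 1)) by (unfold RtoC, Copp; simpl; f_equal; ring); ring).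
    left. apply K1. unfold line. replace (Cminus (Cplus z (Cmult (RtoC s) (Cminus (Cplus z h) z))) z) with (Cmult (RtoC s) h) by ring.
    rewrite Cmod_mult, Cmod_R, Rabs_right by lra. pose proof (Cmod_ge0 h).
    assert (s * Cmod h <= 1 * Cmod h) by (apply Rmult_le_compat_r; lra). lra.
  - replace (Cminus (Cplus z h) z) with h by ring. pose proof (Cmod_ge0 h).
    assert (0 <= eps * Cmod h) by nra. lra.
Qed.
End Prim.

Definition gam (r th : R) : C := (r * cos th, r * sin th).
Definition dgam (r th : R) : C := (- (r * sin th), r * cos th).
Definition Circ (g : C -> C) (r : R) : C := CInt (fun th => Cmult (g (gam r th)) (dgam r th)) 0 (2 * PI).

Lemma rdiff_of_comp G x v :
  derivable_pt_lim (fun y => fst (G y)) x (fst v) -> derivable_pt_lim (fun y => snd (G y)) x (snd v) ->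
  rdiff G x v.
Proof.
  intros H1 H2 eps Heps.
  destruct (H1 (eps/2) ltac:(lra)) as [d1 K1]. destruct (H2 (eps/2) ltac:(lra)) as [d2 K2].
  exists (Rmin d1 d2). split. apply Rmin_pos; apply cond_pos.
  intros h Hh. pose proof (Rmin_l d1 d2). pose proof (Rmin_r d1 d2).
  destruct (Req_dec h 0) as [E|Nh].
  { subst h. rewrite Rplus_0_r. replace (Cminus (Cminus (G x) (G x)) (Cmult (RtoC 0) v)) with (RtoC 0) by ring.
    rewrite Cmod_0, Rabs_R0. lra. }
  specialize (K1 h Nh ltac:(lra)). specialize (K2 h Nh ltac:(lra)).
  eapply Rle_trans. apply Cmod_le_sum. simpl.
  assert (A1 : Rabs (fst (G (x + h)) + - fst (G x) + - (h * fst v - 0 * snd v)) <= eps / 2 * Rabs h).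
  { replace (fst (G (x + h)) + - fst (G x) + - (h * fst v - 0 * snd v)) with (((fst (G (x + h)) - fst (G x)) / h - fst v) * h) by (field; auto).
    rewrite Rabs_mult. pose proof (Rabs_pos h). nra. }
  assert (A2 : Rabs (snd (G (x + h)) + - snd (G x) + - (h * snd v + 0 * fst v)) <= eps / 2 * Rabs h).
  { replace (snd (G (x + h)) + - snd (G x) + - (h * snd v + 0 * fst v)) with (((snd (G (x + h)) - snd (G x)) / h - snd v) * h) by (field; auto).
    rewrite Rabs_mult. pose proof (Rabs_pos h). nra. }
  lra.
Qed.

Lemma gam_rdiff r th : rdiff (gam r) th (dgam r th).
Proof.
  apply rdiff_of_comp; unfold gam, dgam; simpl; apply is_derive_Reals; auto_derive; auto; ring.
Qed.

Lemma dgam_rdiff r th : rdiff (dgam r) th (- (r * cos th), - (r * sin th)).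
Proof.
  apply rdiff_of_comp; unfold dgam; simpl; apply is_derive_Reals; auto_derive; auto; ring.
Qed.

Lemma gam_rcont r th : rcont (gam r) th.
Proof. eapply rdiff_cont. apply gam_rdiff. Qed.
Lemma dgam_rcont r th : rcont (dgam r) th.
Proof. eapply rdiff_cont. apply dgam_rdiff. Qed.

Lemma Cmod_gam r th : 0 <= r -> Cmod (gam r th) = r.
Proof.
  intros Hr. unfold Cmod, gam; simpl.
  replace (r * cos th * (r * cos th * 1) + r * sin th * (r * sin th * 1)) with (r * r * (cos th ^ 2 + sin th ^ 2)) by ring.
  replace (cos th ^ 2 + sin th ^ 2) with 1 by (rewrite <- (sin2_cos2 th); unfold Rsqr; ring).
  rewrite Rmult_1_r. apply sqrt_square. auto.
Qed.
Lemma Cmod_dgam r th : 0 <= r -> Cmod (dgam r th) = r.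
Proof.
  intros Hr. unfold Cmod, dgam; simpl.
  replace (- (r * sin th) * (- (r * sin th) * 1) + r * cos th * (r * cos th * 1)) with (r * r * (sin th ^ 2 + cos th ^ 2)) by ring.
  replace (sin th ^ 2 + cos th ^ 2) with 1 by (rewrite <- (sin2_cos2 th); unfold Rsqr; ring).
  rewrite Rmult_1_r. apply sqrt_square. auto.
Qed.

Lemma gam_2PI r : gam r (2 * PI) = gam r 0.
Proof. unfold gam. rewrite cos_2PI, sin_2PI, cos_0, sin_0. reflexivity. Qed.

Lemma PI_pos' : 0 < 2 * PI.
Proof. pose proof PI_RGT_0. lra. Qed.

Lemma circ_rcont g r : (forall th, ccont g (gam r th)) ->
  rcont_on (fun th => Cmult (g (gam r th)) (dgam r th)) 0 (2 * PI).
Proof.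
  intros H x _. apply rcont_mult. apply rcont_comp. apply H. apply gam_rcont. apply dgam_rcont.
Qed.

Lemma Circ_bound g r M : 0 <= r -> (forall th, ccont g (gam r th)) ->
  (forall th, 0 <= th <= 2 * PI -> Cmod (g (gam r th)) <= M) -> Cmod (Circ g r) <= 2 * (2 * PI) * (M * r).
Proof.
  intros Hr Hc HM. unfold Circ. pose proof PI_pos'.
  replace (2 * (2 * PI) * (M * r)) with (2 * (2 * PI - 0) * (M * r)) by ring.
  apply CInt_bound. lra. apply circ_rcont; auto.
  intros x Hx. rewrite Cmod_mult, Cmod_dgam by auto. apply Rmult_le_compat_r; auto.
Qed.

Lemma Circ_plus g1 g2 r : (forall th, ccont g1 (gam r th)) -> (forall th, ccont g2 (gam r th)) ->
  Circ (fun z => Cplus (g1 z) (g2 z)) r = Cplus (Circ g1 r) (Circ g2 r).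
Proof.
  intros H1 H2. unfold Circ. rewrite <- CInt_plus by (apply circ_rcont; auto).
  apply CInt_ext. intros; ring.
Qed.

Lemma Circ_cmul c g r : (forall th, ccont g (gam r th)) ->
  Circ (fun z => Cmult c (g z)) r = Cmult c (Circ g r).
Proof.
  intros H. unfold Circ. rewrite <- CInt_cmul by (apply circ_rcont; auto).
  apply CInt_ext. intros; ring.
Qed.

Lemma Circ_ext g1 g2 r : (forall th, g1 (gam r th) = g2 (gam r th)) -> Circ g1 r = Circ g2 r.
Proof. intros H. unfold Circ. apply CInt_ext. intros; rewrite H; auto. Qed.

Lemma Circ_FTC F g r : (forall th, cdiff F (gam r th) (g (gam r th))) -> (forall th, ccont g (gam r th)) ->
  Circ g r = RtoC 0.
Proof.
  intros HF Hg. unfold Circ. pose proof PI_pos'.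
  rewrite (CInt_FTC (fun th => F (gam r th))).
  - rewrite gam_2PI. ring.
  - lra.
  - intros x _. apply chain_rule. apply HF. apply gam_rdiff.
  - apply circ_rcont; auto.
Qed.

Lemma cauchy_circle q rho w r : (forall x, Cmod x < rho -> ccont q x) ->
  (forall x, Cmod x < rho -> x <> w -> exists d, cdiff q x d) -> Cmod w < rho ->
  0 <= r < rho -> Circ q r = RtoC 0.
Proof.
  intros Hc Hd Hw Hr. apply (Circ_FTC (fun x => Seg q w x)).
  - intros th. apply (prim_diff q rho w Hc Hd Hw). rewrite Cmod_gam; lra.
  - intros th. apply Hc. rewrite Cmod_gam; lra.
Qed.
Lemma cdiff_eq_d f z d d' : d = d' -> cdiff f z d -> cdiff f z d'.
Proof. intros E; subst; auto. Qed.

Lemma cdiff_cmul c f z d : cdiff f z d -> cdiff (fun x => Cmult c (f x)) z (Cmult c d).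
Proof.
  intros H. eapply cdiff_eq_d. 2: apply (cdiff_mult (fun _ => c) f z (RtoC 0) d (cdiff_const c z) H). ring.
Qed.

Lemma ccont_ext f g z : (forall x, f x = g x) -> ccont g z -> ccont f z.
Proof. intros E H eps Heps. destruct (H eps Heps) as [d [Hd K]]. exists d; split; auto. intros y Hy. rewrite !E. auto. Qed.

Lemma ccont_invsh w z : z <> w -> ccont (fun x => Cinv (Cminus x w)) z.
Proof. intros H. eapply cdiff_cont. apply cdiff_invsh; auto. Qed.

Lemma ccont_inv z : z <> RtoC 0 -> ccont (fun x => Cinv x) z.
Proof.
  intros H. apply (ccont_ext _ (fun x => Cinv (Cminus x (RtoC 0)))).
  intros x. f_equal. ring. apply ccont_invsh; auto.
Qed.

Lemma ccont_pow f z n : ccont f z -> ccont (fun x => Cpow (f x) n) z.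
Proof.
  intros H. induction n. simpl. apply ccont_const. simpl. apply ccont_mult; auto.
Qed.

Lemma gam_ne r th w : 0 <= r -> Cmod w < r -> gam r th <> w.
Proof. intros Hr Hw E. rewrite <- E, Cmod_gam in Hw by auto. lra. Qed.

Lemma gam_ne0 r th : 0 < r -> gam r th <> RtoC 0.
Proof. intros Hr. apply gam_ne. lra. rewrite Cmod_0. auto. Qed.

Fixpoint psum (a : nat -> C) (n : nat) (w : C) : C :=
  match n with O => RtoC 0 | S n => Cplus (psum a n w) (Cmult (a n) (Cpow w n)) end.

Lemma geom_id z w N : z <> RtoC 0 -> Cminus z w <> RtoC 0 ->
  Cinv (Cminus z w) = Cplus (psum (fun k => Cpow (Cinv z) (S k)) N w) (Cmult (Cpow (Cmult w (Cinv z)) N) (Cinv (Cminus z w))).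
Proof.
  intros Hz Hzw. induction N.
  - simpl. ring.
  - rewrite IHN at 1. simpl. rewrite !Cpow_mult_l.
    set (X := Cpow w N). set (Y := Cpow (Cinv z) N).
    field. split; auto.
Qed.

Lemma ccont_psum (b : nat -> C -> C) N w z : (forall k, ccont (b k) z) ->
  ccont (fun x => psum (fun k => b k x) N w) z.
Proof.
  intros H. induction N. simpl. apply ccont_const. simpl. apply ccont_plus; auto.
  apply ccont_mult; auto. apply ccont_const.
Qed.

Lemma Circ_psum g r N w : 0 < r -> (forall th, ccont g (gam r th)) ->
  Circ (fun z => Cmult (g z) (psum (fun k => Cpow (Cinv z) (S k)) N w)) r =
  psum (fun k => Circ (fun z => Cmult (g z) (Cpow (Cinv z) (S k))) r) N w.
Proof.
  intros Hr Hg. induction N.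
  - simpl. rewrite (Circ_ext _ (fun z => Cmult (RtoC 0) (g z))) by (intros; ring).
    rewrite Circ_cmul by auto. ring.
  - simpl. rewrite (Circ_ext _ (fun z => Cplus (Cmult (g z) (psum (fun k => Cpow (Cinv z) (S k)) N w))
                                             (Cmult (Cpow w N) (Cmult (g z) (Cmult (Cinv z) (Cpow (Cinv z) N)))))) by (intros; simpl; ring).
    assert (Hc : forall th, ccont (fun z => Cmult (g z) (Cmult (Cinv z) (Cpow (Cinv z) N))) (gam r th)).
    { intros th. apply ccont_mult; auto. apply ccont_mult. apply ccont_inv, gam_ne0; auto.
      apply ccont_pow, ccont_inv, gam_ne0; auto. }
    rewrite Circ_plus.
    + rewrite IHN. rewrite Circ_cmul by auto. simpl. ring.
    + intros th. apply ccont_mult; auto. apply (ccont_psum (fun k z => Cpow (Cinv z) (S k))).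
      intros k. apply ccont_pow, ccont_inv, gam_ne0; auto.
    + intros th. apply ccont_cmul. auto.
Qed.

Lemma Circ_expand g r w N : 0 < r -> Cmod w < r -> (forall th, ccont g (gam r th)) ->
  Circ (fun z => Cmult (g z) (Cinv (Cminus z w))) r =
  Cplus (psum (fun k => Circ (fun z => Cmult (g z) (Cpow (Cinv z) (S k))) r) N w)
        (Circ (fun z => Cmult (g z) (Cmult (Cpow (Cmult w (Cinv z)) N) (Cinv (Cminus z w)))) r).
Proof.
  intros Hr Hw Hg.
  assert (Hne : forall th, Cminus (gam r th) w <> RtoC 0).
  { intros th E. apply (gam_ne r th w); [lra|auto|]. transitivity (Cplus (Cminus (gam r th) w) w). ring. rewrite E. ring. }
  rewrite (Circ_ext _ (fun z => Cplus (Cmult (g z) (psum (fun k => Cpow (Cinv z) (S k)) N w))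
                                      (Cmult (g z) (Cmult (Cpow (Cmult w (Cinv z)) N) (Cinv (Cminus z w)))))).
  2:{ intros th. rewrite (geom_id (gam r th) w N) at 1; auto. ring. apply gam_ne0; auto. }
  rewrite Circ_plus.
  - rewrite Circ_psum; auto.
  - intros th. apply ccont_mult; auto. apply (ccont_psum (fun k z => Cpow (Cinv z) (S k))).
    intros k. apply ccont_pow, ccont_inv, gam_ne0; auto.
  - intros th. apply ccont_mult; auto. apply ccont_mult. apply ccont_pow. apply ccont_mult. apply ccont_const.
    apply ccont_inv, gam_ne0; auto. apply ccont_invsh. apply gam_ne; auto; lra.
Qed.

Lemma dgam_eq r th : dgam r th = Cmult Ci (gam r th).
Proof. unfold dgam, gam, Ci, Cmult; simpl. f_equal; ring. Qed.

Lemma Circ_inv1 r : 0 < r -> Circ (fun z => Cmult (RtoC 1) (Cpow (Cinv z) 1)) r = Cmult (RtoC (2 * PI)) Ci.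
Proof.
  intros Hr. unfold Circ. rewrite (CInt_ext _ (fun _ => Ci)).
  - rewrite CInt_const. f_equal. f_equal. ring.
  - intros th. rewrite dgam_eq. pose proof (gam_ne0 r th Hr). simpl. field. auto.
Qed.

Lemma Circ_invk r k : 0 < r -> Circ (fun z => Cmult (RtoC 1) (Cpow (Cinv z) (S (S k)))) r = RtoC 0.
Proof.
  intros Hr.
  set (c := Copp (Cinv (RtoC (INR (S k))))).
  assert (Hn : RtoC (INR (S k)) <> RtoC 0).
  { intros E. apply RtoC_inj in E. pose proof (pos_INR k). rewrite S_INR in E. lra. }
  apply (Circ_FTC (fun z => Cmult c (Cpow (Cinv (Cminus z (RtoC 0))) (S k)))).
  - intros th. pose proof (gam_ne0 r th Hr) as Hz.
    eapply cdiff_eq_d. 2: apply cdiff_cmul, cdiff_pow, cdiff_invsh; auto.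
    unfold c. rewrite !Cpow_S.
    assert (E0 : Cminus (gam r th) (RtoC 0) = gam r th) by ring. rewrite E0.
    set (X := Cpow (Cinv (gam r th)) k). field. auto.
  - intros th. apply ccont_cmul. apply ccont_pow. apply ccont_inv, gam_ne0; auto.
Qed.

Lemma psum_first (a : nat -> C) w N : (forall k, (1 <= k)%nat -> a k = RtoC 0) -> (1 <= N)%nat -> psum a N w = a O.
Proof.
  intros H HN. induction N. lia. destruct N. simpl. ring.
  change (psum a (S (S N)) w) with (Cplus (psum a (S N) w) (Cmult (a (S N)) (Cpow w (S N)))).
  rewrite IHN by lia. rewrite (H (S N)) by lia. ring.
Qed.

Lemma small_geom x C0 rr : 0 <= rr < 1 -> 0 <= C0 -> (forall N, (1 <= N)%nat -> x <= C0 * rr ^ N) -> x <= 0.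
Proof.
  intros Hrr HC H. destruct (Rle_dec x 0) as [|Hx]; auto. exfalso.
  destruct (pow_lt_1_zero rr ltac:(rewrite Rabs_right; lra) (x / (C0 + 1))) as [N HN].
  apply Rdiv_lt_0_compat; lra.
  specialize (HN (S N) ltac:(lia)). specialize (H (S N) ltac:(lia)).
  rewrite Rabs_right in HN by (apply Rle_ge, pow_le; lra).
  pose proof (pow_le rr (S N) ltac:(lra)).
  assert (rr ^ S N * (C0 + 1) < x).
  { apply (Rmult_lt_reg_r (/ (C0 + 1))). apply Rinv_0_lt_compat; lra.
    rewrite Rmult_assoc, Rinv_r by lra. rewrite Rmult_1_r. exact HN. }
  nra.
Qed.

Lemma rem_bound g r w N M : 0 < r -> Cmod w < r -> (forall th, ccont g (gam r th)) ->
  (forall th, 0 <= th <= 2 * PI -> Cmod (g (gam r th)) <= M) ->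
  Cmod (Circ (fun z => Cmult (g z) (Cmult (Cpow (Cmult w (Cinv z)) N) (Cinv (Cminus z w)))) r)
    <= 2 * (2 * PI) * (M * ((Cmod w / r) ^ N / (r - Cmod w)) * r).
Proof.
  intros Hr Hw Hg HM. apply Circ_bound. lra.
  - intros th. apply ccont_mult; auto. apply ccont_mult. apply ccont_pow. apply ccont_mult. apply ccont_const.
    apply ccont_inv, gam_ne0; auto. apply ccont_invsh. apply gam_ne; auto; lra.
  - intros th Hth. pose proof (gam_ne0 r th Hr) as Hz.
    assert (Hzw : Cminus (gam r th) w <> RtoC 0).
    { intros E. apply (gam_ne r th w); [lra|auto|]. transitivity (Cplus (Cminus (gam r th) w) w). ring. rewrite E. ring. }
    rewrite !Cmod_mult, Cmod_pow, Cmod_mult, Cmod_inv, Cmod_inv by auto.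
    rewrite Cmod_gam by lra.
    assert (Hlow : r - Cmod w <= Cmod (Cminus (gam r th) w)).
    { pose proof (Cmod_triangle (Cminus (gam r th) w) w). replace (Cplus (Cminus (gam r th) w) w) with (gam r th) in H by ring.
      rewrite Cmod_gam in H by lra. lra. }
    assert (0 < r - Cmod w) by lra.
    assert (/ Cmod (Cminus (gam r th) w) <= / (r - Cmod w)) by (apply Rinv_le_contravar; lra).
    pose proof (HM th Hth). pose proof (Cmod_ge0 (g (gam r th))).
    assert (0 <= (Cmod w * / r) ^ N) by (apply pow_le; pose proof (Cmod_ge0 w); apply Rmult_le_pos; [lra| left; apply Rinv_0_lt_compat; lra]).
    unfold Rdiv. apply Rmult_le_compat; auto.
    + apply Rmult_le_pos; auto. left; apply Rinv_0_lt_compat. lra.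
    + apply Rmult_le_compat_l; auto.
Qed.

Lemma Circ_inv_w r w : 0 < r -> Cmod w < r -> Circ (fun z => Cinv (Cminus z w)) r = Cmult (RtoC (2 * PI)) Ci.
Proof.
  intros Hr Hw.
  rewrite (Circ_ext _ (fun z => Cmult (RtoC 1) (Cinv (Cminus z w)))) by (intros; ring).
  set (I := Circ (fun z => Cmult (RtoC 1) (Cinv (Cminus z w))) r).
  assert (Hc1 : forall th, ccont (fun _ : C => RtoC 1) (gam r th)) by (intros; apply ccont_const).
  assert (HE : forall N, (1 <= N)%nat -> Cmod (Cminus I (Cmult (RtoC (2 * PI)) Ci)) <= 2 * (2 * PI) * (1 * ((Cmod w / r) ^ N / (r - Cmod w)) * r)).
  { intros N HN. unfold I. rewrite (Circ_expand (fun _ => RtoC 1) r w N Hr Hw Hc1).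
    rewrite psum_first; auto.
    - rewrite Circ_inv1 by auto.
      replace (Cminus (Cplus (Cmult (RtoC (2 * PI)) Ci) (Circ (fun z => Cmult (RtoC 1) (Cmult (Cpow (Cmult w (Cinv z)) N) (Cinv (Cminus z w)))) r)) (Cmult (RtoC (2 * PI)) Ci))
        with (Circ (fun z => Cmult (RtoC 1) (Cmult (Cpow (Cmult w (Cinv z)) N) (Cinv (Cminus z w)))) r) by ring.
      apply rem_bound; auto. intros; rewrite Cmod_1; lra.
    - intros k Hk. destruct k. lia. apply Circ_invk; auto. }
  assert (Cmod (Cminus I (Cmult (RtoC (2 * PI)) Ci)) <= 0).
  { apply (small_geom _ (2 * (2 * PI) * (1 * (1 / (r - Cmod w)) * r)) (Cmod w / r)).
    - pose proof (Cmod_ge0 w). split. apply Rdiv_le_0_compat; lra.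
      apply (Rmult_lt_reg_r r); auto. unfold Rdiv. rewrite Rmult_assoc, Rinv_l by lra. lra.
    - pose proof PI_pos'. assert (0 < 1 / (r - Cmod w)) by (apply Rdiv_lt_0_compat; lra).
      apply Rmult_le_pos; [lra | apply Rmult_le_pos; lra].
    - intros N HN. eapply Rle_trans. apply (HE N HN). unfold Rdiv. right. ring. }
  assert (H0 : Cminus I (Cmult (RtoC (2 * PI)) Ci) = RtoC 0).
  { apply Cmod_eq_0. pose proof (Cmod_ge0 (Cminus I (Cmult (RtoC (2 * PI)) Ci))). lra. }
  transitivity (Cplus (Cminus I (Cmult (RtoC (2 * PI)) Ci)) (Cmult (RtoC (2 * PI)) Ci)). ring. rewrite H0. ring.
Qed.
Lemma cauchy_formula f rho r w : 0 < r < rho -> Cmod w < r ->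
  (forall x, Cmod x < rho -> exists d, cdiff f x d) ->
  Circ (fun z => Cmult (f z) (Cinv (Cminus z w))) r = Cmult (f w) (Cmult (RtoC (2 * PI)) Ci).
Proof.
  intros Hr Hw Hf.
  destruct (Hf w ltac:(lra)) as [dw Hdw].
  set (q := fun z => if Ceq_dec z w then dw else Cmult (Cminus (f z) (f w)) (Cinv (Cminus z w))).
  assert (Hqd : forall x, Cmod x < rho -> x <> w -> exists d, cdiff q x d).
  { intros x Hx Hxw. destruct (Hf x Hx) as [dx Hdx].
    eexists. apply (cdiff_local q (fun z => Cmult (Cplus (f z) (Copp (f w))) (Cinv (Cminus z w)))).
    - exists (Cmod (Cminus x w)). split. apply Cmod_gt_0. intros E. apply Hxw.
      transitivity (Cplus (Cminus x w) w). ring. rewrite E. ring.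
      intros y Hy. unfold q. destruct (Ceq_dec y w) as [E|E].
      + subst y. rewrite Cmod_sub_sym in Hy. lra.
      + reflexivity.
    - apply cdiff_mult. eapply cdiff_eq_d. 2: apply cdiff_plus; [exact Hdx | apply cdiff_const]. reflexivity.
      apply cdiff_invsh; auto. }
  assert (Hqc : forall x, Cmod x < rho -> ccont q x).
  { intros x Hx. destruct (Ceq_dec x w) as [E|E].
    - subst x. intros eps Heps. destruct (Hdw (eps/2) ltac:(lra)) as [d [Hd K]].
      exists d. split; auto. intros y Hy. unfold q. destruct (Ceq_dec w w) as [_|NE]; [|congruence].
      destruct (Ceq_dec y w) as [Eyw|Nyw].
      + replace (Cminus dw dw) with (RtoC 0) by ring. rewrite Cmod_0. lra.
      + specialize (K (Cminus y w) Hy). replace (Cplus w (Cminus y w)) with y in K by ring.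
        assert (Hyw : Cminus y w <> RtoC 0).
        { intros E. apply Nyw. transitivity (Cplus (Cminus y w) w). ring. rewrite E. ring. }
        replace (Cminus (Cmult (Cminus (f y) (f w)) (Cinv (Cminus y w))) dw)
          with (Cmult (Cminus (Cminus (f y) (f w)) (Cmult dw (Cminus y w))) (Cinv (Cminus y w))) by (field; auto).
        rewrite Cmod_mult, Cmod_inv by auto.
        assert (0 < Cmod (Cminus y w)) by (apply Cmod_gt_0; auto).
        apply (Rmult_lt_reg_r (Cmod (Cminus y w))); auto. rewrite Rmult_assoc, Rinv_l by lra.
        assert (eps / 2 * Cmod (Cminus y w) < eps * Cmod (Cminus y w)) by (apply Rmult_lt_compat_r; lra). lra.
    - destruct (Hqd x Hx E) as [d Hd]. eapply cdiff_cont; eauto. }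
  pose proof (cauchy_circle q rho w r Hqc Hqd ltac:(lra) ltac:(lra)) as C0.
  assert (Hne : forall th, gam r th <> w) by (intros; apply gam_ne; lra).
  rewrite (Circ_ext q (fun z => Cplus (Cmult (f z) (Cinv (Cminus z w))) (Cmult (Copp (f w)) (Cinv (Cminus z w))))) in C0.
  2:{ intros th. unfold q. destruct (Ceq_dec (gam r th) w) as [E|E]. exfalso; apply (Hne th); auto. ring. }
  assert (Hfc : forall th, ccont f (gam r th)).
  { intros th. destruct (Hf (gam r th)) as [d Hd]. rewrite Cmod_gam; lra. eapply cdiff_cont; eauto. }
  assert (Hic : forall th, ccont (fun z => Cinv (Cminus z w)) (gam r th)) by (intros; apply ccont_invsh; auto).
  rewrite Circ_plus in C0.
  2:{ intros th. apply ccont_mult; auto. }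
  2:{ intros th. apply ccont_cmul; auto. }
  rewrite Circ_cmul in C0 by auto. rewrite Circ_inv_w in C0 by lra.
  transitivity (Cminus (Cplus (Circ (fun z => Cmult (f z) (Cinv (Cminus z w))) r) (Cmult (Copp (f w)) (Cmult (RtoC (2 * PI)) Ci))) (Cmult (Copp (f w)) (Cmult (RtoC (2 * PI)) Ci))).
  ring. rewrite C0. ring.
Qed.

Lemma psum_scale (a : nat -> C) c N w : psum (fun k => Cmult (a k) c) N w = Cmult (psum a N w) c.
Proof. induction N; simpl. ring. rewrite IHN. ring. Qed.

Lemma Cmod_2PIi : Cmod (Cmult (RtoC (2 * PI)) Ci) = 2 * PI.
Proof. rewrite Cmod_mult, Cmod_Ci, Cmod_R. rewrite Rabs_right. ring. pose proof PI_pos'. lra. Qed.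

Lemma rcont_Cmod g x : rcont g x -> continuity_pt (fun y => Cmod (g y)) x.
Proof.
  intros H. unfold continuity_pt, continue_in, limit1_in, limit_in. intros eps Heps.
  destruct (H eps Heps) as [d [Hd K]]. exists d. split; auto.
  intros y [_ Hy]. simpl in *. unfold R_dist in *. specialize (K y Hy).
  pose proof (Cmod_triangle (Cminus (g y) (g x)) (g x)). replace (Cplus (Cminus (g y) (g x)) (g x)) with (g y) in H0 by ring.
  pose proof (Cmod_triangle (Cminus (g x) (g y)) (g y)). replace (Cplus (Cminus (g x) (g y)) (g y)) with (g x) in H1 by ring.
  rewrite Cmod_sub_sym in H1. apply Rabs_def1; lra.
Qed.

Theorem taylor f rho : 0 < rho -> (forall x, Cmod x < rho -> exists d, cdiff f x d) ->
  forall N, exists (a : nat -> C) K del, 0 < del /\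
    forall w, Cmod w < del -> Cmod (Cminus (f w) (psum a N w)) <= K * Cmod w ^ N.
Proof.
  intros Hrho Hf N.
  set (r := rho / 2).
  assert (Hr : 0 < r < rho) by (unfold r; lra).
  assert (Hfc : forall th, ccont f (gam r th)).
  { intros th. destruct (Hf (gam r th)) as [d Hd]. rewrite Cmod_gam; lra. eapply cdiff_cont; eauto. }
  destruct (continuity_ab_maj (fun th => Cmod (f (gam r th))) 0 (2 * PI)) as [Mx [HMx _]].
  { pose proof PI_pos'. lra. }
  { intros c _. apply rcont_Cmod. apply rcont_comp. apply Hfc. apply gam_rcont. }
  set (M := Rmax (Cmod (f (gam r Mx))) 0).
  assert (HM : forall th, 0 <= th <= 2 * PI -> Cmod (f (gam r th)) <= M).
  { intros th Hth. specialize (HMx th Hth). simpl in HMx. unfold M. pose proof (Rmax_l (Cmod (f (gam r Mx))) 0). lra. }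
  assert (HM0 : 0 <= M) by apply Rmax_r.
  set (c := Cinv (Cmult (RtoC (2 * PI)) Ci)).
  assert (Hc0 : Cmult (RtoC (2 * PI)) Ci <> RtoC 0).
  { intros E. apply (f_equal Cmod) in E. rewrite Cmod_2PIi, Cmod_0 in E. pose proof PI_pos'. lra. }
  exists (fun k => Cmult (Circ (fun z => Cmult (f z) (Cpow (Cinv z) (S k))) r) c).
  exists (4 * M / r ^ N). exists (r / 2). split. lra.
  intros w Hw.
  assert (Hw' : Cmod w < r) by lra.
  pose proof (cauchy_formula f rho r w Hr Hw' Hf) as CF.
  rewrite (Circ_expand f r w N) in CF by (auto; lra).
  rewrite psum_scale.
  set (P := psum (fun k => Circ (fun z => Cmult (f z) (Cpow (Cinv z) (S k))) r) N w) in *.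
  set (Rm := Circ (fun z => Cmult (f z) (Cmult (Cpow (Cmult w (Cinv z)) N) (Cinv (Cminus z w)))) r) in *.
  assert (E : Cminus (f w) (Cmult P c) = Cmult Rm c).
  { transitivity (Cmult (Cminus (Cmult (f w) (Cmult (RtoC (2 * PI)) Ci)) P) c).
    - unfold c. field. split. apply Ci_nz. pose proof PI_pos'. intro E. apply (f_equal fst) in E. simpl in E. lra.
    - rewrite <- CF. ring. }
  rewrite E. rewrite Cmod_mult. unfold c. rewrite Cmod_inv, Cmod_2PIi by auto.
  pose proof (rem_bound f r w N M ltac:(lra) Hw' Hfc HM) as RB. fold Rm in RB.
  pose proof PI_pos'. pose proof (Cmod_ge0 w).
  assert (Hq : 0 <= (Cmod w / r) ^ N) by (apply pow_le; apply Rdiv_le_0_compat; lra).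
  assert (Hinv : / (r - Cmod w) <= 2 / r).
  { replace (2 / r) with (/ (r / 2)) by (field; lra). apply Rinv_le_contravar; lra. }
  assert (RB2 : Cmod Rm <= 2 * (2 * PI) * (M * ((Cmod w / r) ^ N * (2 / r)) * r)).
  { eapply Rle_trans. exact RB. unfold Rdiv at 2. apply Rmult_le_compat_l. lra.
    apply Rmult_le_compat_r. lra. apply Rmult_le_compat_l; auto. apply Rmult_le_compat_l; auto. }
  replace (2 * (2 * PI) * (M * ((Cmod w / r) ^ N * (2 / r)) * r)) with (2 * PI * (4 * M / r ^ N * Cmod w ^ N)) in RB2.
  2:{ unfold Rdiv. rewrite Rpow_mult_distr, pow_inv. field. split; [lra|]. apply pow_nonzero; lra. }
  apply (Rmult_le_reg_l (2 * PI)). lra. rewrite <- Rmult_assoc, Rinv_r_simpl_m by lra.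
  replace (2 * PI * (Cmod Rm * / (2 * PI))) with (Cmod Rm) by (field; lra). exact RB2.
Qed.
Definition bigO (f : C -> C) (N : nat) : Prop :=
  exists K del, 0 <= K /\ 0 < del /\ forall t, Cmod t < del -> Cmod (f t) <= K * Cmod t ^ N.
Definition lead (f : C -> C) (j : nat) (c : C) : Prop :=
  c <> RtoC 0 /\ bigO (fun t => Cminus (f t) (Cmult c (Cpow t j))) (S j).
Definition hol0 (f : C -> C) : Prop :=
  exists rho, 0 < rho /\ forall x, Cmod x < rho -> exists d, cdiff f x d.

Lemma pow_le_mono x m n : 0 <= x <= 1 -> (m <= n)%nat -> x ^ n <= x ^ m.
Proof.
  intros Hx Hmn. induction Hmn. lra.
  simpl. pose proof (pow_le x m0 ltac:(lra)). nra.
Qed.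

Lemma bigO_mono f N M : bigO f N -> (M <= N)%nat -> bigO f M.
Proof.
  intros [K [d [HK [Hd H]]]] HMN. exists K, (Rmin d 1). split; auto. split. apply Rmin_pos; lra.
  intros t Ht. pose proof (Rmin_l d 1). pose proof (Rmin_r d 1).
  eapply Rle_trans. apply H. lra. apply Rmult_le_compat_l; auto. apply pow_le_mono; auto.
  split. apply Cmod_ge0. lra.
Qed.

Fixpoint Tsum (a : nat -> C) (n : nat) : R := match n with O => 0 | S n => Tsum a n + Cmod (a n) end.
Lemma Tsum_pos a n : 0 <= Tsum a n.
Proof. induction n; simpl. lra. pose proof (Cmod_ge0 (a n)). lra. Qed.

Lemma psum_zero a n w : (forall k, (k < n)%nat -> a k = RtoC 0) -> psum a n w = RtoC 0.
Proof. induction n; intros H; simpl. auto. rewrite IHn by (intros; apply H; lia). rewrite H by lia. ring. Qed.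

Lemma psum_tail a j n w : (j < n)%nat -> (forall k, (k < j)%nat -> a k = RtoC 0) -> Cmod w <= 1 ->
  Cmod (Cminus (psum a n w) (Cmult (a j) (Cpow w j))) <= Tsum a n * Cmod w ^ (S j).
Proof.
  intros Hjn Hz Hw. induction n. lia.
  destruct (Nat.eq_dec j n) as [E|E].
  - subst n. change (psum a (S j) w) with (Cplus (psum a j w) (Cmult (a j) (Cpow w j))).
    change (Tsum a (S j)) with (Tsum a j + Cmod (a j)). rewrite psum_zero by auto.
    replace (Cminus (Cplus (RtoC 0) (Cmult (a j) (Cpow w j))) (Cmult (a j) (Cpow w j))) with (RtoC 0) by ring.
    rewrite Cmod_0. pose proof (Tsum_pos a j). pose proof (Cmod_ge0 (a j)).
    apply Rmult_le_pos. lra. apply pow_le, Cmod_ge0.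
  - change (psum a (S n) w) with (Cplus (psum a n w) (Cmult (a n) (Cpow w n))).
    change (Tsum a (S n)) with (Tsum a n + Cmod (a n)). specialize (IHn ltac:(lia)).
    replace (Cminus (Cplus (psum a n w) (Cmult (a n) (Cpow w n))) (Cmult (a j) (Cpow w j)))
      with (Cplus (Cminus (psum a n w) (Cmult (a j) (Cpow w j))) (Cmult (a n) (Cpow w n))) by ring.
    eapply Rle_trans. apply Cmod_triangle. rewrite Cmod_mult, Cmod_pow.
    assert (Cmod w ^ n <= Cmod w ^ (S j)) by (apply pow_le_mono; [split; [apply Cmod_ge0|lra]|lia]).
    pose proof (Cmod_ge0 (a n)). nra.
Qed.

Lemma first_nonzero (a : nat -> C) N : (forall k, (k <= N)%nat -> a k = RtoC 0) \/
  exists j, (j <= N)%nat /\ a j <> RtoC 0 /\ forall k, (k < j)%nat -> a k = RtoC 0.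
Proof.
  induction N.
  - destruct (Ceq_dec (a O) (RtoC 0)) as [E|E].
    + left. intros k Hk. replace k with O by lia. auto.
    + right. exists O. split; auto. split; auto. intros; lia.
  - destruct IHN as [H|[j [Hj [Hn Hk]]]].
    + destruct (Ceq_dec (a (S N)) (RtoC 0)) as [E|E].
      * left. intros k Hk. destruct (Nat.eq_dec k (S N)). subst; auto. apply H; lia.
      * right. exists (S N). split; auto. split; auto. intros k Hk. apply H; lia.
    + right. exists j. split; auto.
Qed.

Lemma dichotomy f N : hol0 f -> bigO f (S N) \/ exists j c, (j <= N)%nat /\ lead f j c.
Proof.
  intros [rho [Hrho Hf]]. destruct (taylor f rho Hrho Hf (S N)) as [a [K [d [Hd H]]]].
  destruct (first_nonzero a N) as [Z|[j [Hj [Hn Hk]]]].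
  - left. exists (Rabs K), d. split. apply Rabs_pos. split; auto. intros t Ht. specialize (H t Ht).
    rewrite psum_zero in H by (intros; apply Z; lia).
    replace (Cminus (f t) (RtoC 0)) with (f t) in H by ring.
    eapply Rle_trans. exact H. apply Rmult_le_compat_r. apply pow_le, Cmod_ge0. apply Rle_abs.
  - right. exists j, (a j). split; auto. split; auto.
    exists (Rabs K + Tsum a (S N)), (Rmin d 1). split. pose proof (Tsum_pos a (S N)). pose proof (Rabs_pos K). lra.
    split. apply Rmin_pos; lra.
    intros t Ht. pose proof (Rmin_l d 1). pose proof (Rmin_r d 1).
    specialize (H t ltac:(lra)).
    pose proof (psum_tail a j (S N) t ltac:(lia) Hk ltac:(lra)).
    replace (Cminus (f t) (Cmult (a j) (Cpow t j))) with
      (Cplus (Cminus (f t) (psum a (S N) t)) (Cminus (psum a (S N) t) (Cmult (a j) (Cpow t j)))) by ring.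
    eapply Rle_trans. apply Cmod_triangle.
    assert (Cmod t ^ S N <= Cmod t ^ S j) by (apply pow_le_mono; [split; [apply Cmod_ge0|lra]|lia]).
    assert (K * Cmod t ^ S N <= Rabs K * Cmod t ^ S j).
    { eapply Rle_trans. apply Rmult_le_compat_r. apply pow_le, Cmod_ge0. apply Rle_abs.
      apply Rmult_le_compat_l; auto. apply Rabs_pos. }
    lra.
Qed.

Lemma lead_lower f j c : lead f j c -> exists del, 0 < del /\ forall t, Cmod t < del ->
  Cmod c / 2 * Cmod t ^ j <= Cmod (f t).
Proof.
  intros [Hc [K [d [HK [Hd H]]]]].
  assert (Hcp : 0 < Cmod c) by (apply Cmod_gt_0; auto).
  exists (Rmin d (Cmod c / (2 * (K + 1)))). split. apply Rmin_pos; auto. apply Rdiv_lt_0_compat; lra.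
  intros t Ht. pose proof (Rmin_l d (Cmod c / (2 * (K + 1)))). pose proof (Rmin_r d (Cmod c / (2 * (K + 1)))).
  specialize (H t ltac:(lra)).
  pose proof (Cmod_triangle (f t) (Cminus (Cmult c (Cpow t j)) (f t))) as T.
  replace (Cplus (f t) (Cminus (Cmult c (Cpow t j)) (f t))) with (Cmult c (Cpow t j)) in T by ring.
  rewrite Cmod_mult, Cmod_pow in T. rewrite (Cmod_sub_sym (Cmult c (Cpow t j)) (f t)) in T.
  assert (HKt : K * Cmod t <= Cmod c / 2).
  { assert (Cmod t * (2 * (K + 1)) <= Cmod c).
    { apply (Rmult_le_reg_r (/ (2 * (K + 1)))). apply Rinv_0_lt_compat; lra.
      rewrite Rmult_assoc, Rinv_r by lra. unfold Rdiv in *. lra. }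
    pose proof (Cmod_ge0 t). nra. }
  pose proof (pow_le (Cmod t) j (Cmod_ge0 t)).
  assert (K * Cmod t ^ S j <= Cmod c / 2 * Cmod t ^ j).
  { simpl. rewrite <- Rmult_assoc. apply Rmult_le_compat_r; auto. }
  lra.
Qed.

Lemma lead_upper f j c : lead f j c -> bigO f j.
Proof.
  intros [Hc [K [d [HK [Hd H]]]]].
  exists (Cmod c + K), (Rmin d 1). split. pose proof (Cmod_ge0 c). lra. split. apply Rmin_pos; lra.
  intros t Ht. pose proof (Rmin_l d 1). pose proof (Rmin_r d 1).
  specialize (H t ltac:(lra)).
  replace (f t) with (Cplus (Cminus (f t) (Cmult c (Cpow t j))) (Cmult c (Cpow t j))) by ring.
  eapply Rle_trans. apply Cmod_triangle. rewrite Cmod_mult, Cmod_pow.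
  assert (Cmod t ^ S j <= Cmod t ^ j) by (apply pow_le_mono; [split; [apply Cmod_ge0|lra]|lia]).
  nra.
Qed.

Lemma lead_j_pos f j c : f (RtoC 0) = RtoC 0 -> lead f j c -> (1 <= j)%nat.
Proof.
  intros H0 [Hc [K [d [HK [Hd H]]]]]. destruct j; [|lia]. exfalso.
  specialize (H (RtoC 0) ltac:(rewrite Cmod_0; lra)). rewrite H0, Cmod_0 in H. simpl in H.
  rewrite Rmult_0_l, Rmult_0_r in H.
  apply Hc. apply Cmod_eq_0. pose proof (Cmod_ge0 (Cminus (RtoC 0) (Cmult c (RtoC 1)))).
  replace (Cminus (RtoC 0) (Cmult c (RtoC 1))) with (Copp c) in H1 by ring. rewrite Cmod_opp in *.
  replace (Cminus (RtoC 0) (Cmult c (RtoC 1))) with (Copp c) in H by ring. rewrite Cmod_opp in H. lra.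
Qed.
Definition om (th : R) : C := (cos th, sin th).

Lemma om_pow th n : Cpow (om th) n = om (INR n * th).
Proof.
  induction n.
  - simpl. unfold om. rewrite Rmult_0_l, cos_0, sin_0. reflexivity.
  - rewrite Cpow_S, IHn. rewrite S_INR. unfold om, Cmult; simpl.
    replace ((INR n + 1) * th) with (th + INR n * th) by ring.
    rewrite cos_plus, sin_plus. f_equal; ring.
Qed.

Lemma Cmod_om th : Cmod (om th) = 1.
Proof.
  pose proof (Cmod_gam 1 th ltac:(lra)) as H. unfold gam in H. rewrite !Rmult_1_l in H. exact H.
Qed.

Lemma small_choice (d1 d2 d3 d4 : R) : 0 < d1 -> 0 < d2 -> 0 < d3 -> 0 < d4 ->
  exists s, 0 < s /\ s < 1 /\ s < d1 /\ s < d2 /\ s < d3 /\ s < d4.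
Proof.
  intros. exists (Rmin (Rmin 1 d1) (Rmin d2 (Rmin d3 d4)) / 2).
  pose proof (Rmin_l (Rmin 1 d1) (Rmin d2 (Rmin d3 d4))). pose proof (Rmin_r (Rmin 1 d1) (Rmin d2 (Rmin d3 d4))).
  pose proof (Rmin_l 1 d1). pose proof (Rmin_r 1 d1). pose proof (Rmin_l d2 (Rmin d3 d4)). pose proof (Rmin_r d2 (Rmin d3 d4)).
  pose proof (Rmin_l d3 d4). pose proof (Rmin_r d3 d4).
  assert (0 < Rmin (Rmin 1 d1) (Rmin d2 (Rmin d3 d4))) by (repeat apply Rmin_pos; lra).
  repeat split; lra.
Qed.

Lemma lemA_dir (w : C -> C) (p : C -> R) j c N t0 :
  lead w j c -> (forall t, 0 <= p t) -> (j < N)%nat -> Cmod t0 = 1 ->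
  (exists K del, 0 < del /\ forall t, Cmod t < del -> Rabs (fst (w t) + p t) <= K * Cmod t ^ N) ->
  fst (Cmult c (Cpow t0 j)) <= 0.
Proof.
  intros [Hc [K1 [d1 [HK1 [Hd1 H1]]]]] Hp HN Ht0 [K [d [Hd H]]].
  set (al := fst (Cmult c (Cpow t0 j))).
  destruct (Rle_dec al 0) as [|Hal]; auto. exfalso.
  set (B := Rabs K + K1).
  assert (HB : 0 <= B) by (unfold B; pose proof (Rabs_pos K); lra).
  destruct (small_choice d d1 (al / (B + 1)) d) as [s [Hs [Hs1 [Hsd [Hsd1 [Hsal _]]]]]]; auto.
  apply Rdiv_lt_0_compat; lra.
  set (t := Cmult (RtoC s) t0).
  assert (Hts : Cmod t = s) by (unfold t; rewrite Cmod_mult, Ht0, Cmod_R, Rabs_right by lra; ring).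
  specialize (H t ltac:(lra)). specialize (H1 t ltac:(lra)). rewrite Hts in H, H1.
  assert (Ep : fst (Cmult c (Cpow t j)) = s ^ j * al).
  { unfold t, al. rewrite Cpow_mult_l, <- RtoC_pow. unfold Cmult, RtoC; simpl. ring. }
  assert (F1 : fst (Cmult c (Cpow t j)) - fst (w t) <= K1 * s ^ S j).
  { pose proof (Cmod_fst (Cminus (w t) (Cmult c (Cpow t j)))) as H0.
    change (fst (Cminus (w t) (Cmult c (Cpow t j)))) with (fst (w t) - fst (Cmult c (Cpow t j))) in H0.
    pose proof (Rle_abs (- (fst (w t) - fst (Cmult c (Cpow t j))))) as H2. rewrite Rabs_Ropp in H2. lra. }
  assert (F2 : fst (w t) <= Rabs K * s ^ N).
  { pose proof (Rle_abs (fst (w t) + p t)). pose proof (Hp t).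
    assert (K * s ^ N <= Rabs K * s ^ N) by (apply Rmult_le_compat_r; [apply pow_le; lra|apply Rle_abs]). lra. }
  assert (Hsp : s ^ N <= s ^ S j) by (apply pow_le_mono; [lra|lia]).
  assert (F3 : s ^ j * al <= B * s ^ S j).
  { rewrite <- Ep. unfold B. assert (Rabs K * s ^ N <= Rabs K * s ^ S j) by (apply Rmult_le_compat_l; [apply Rabs_pos|auto]). lra. }
  simpl in F3. pose proof (pow_lt s j Hs).
  assert (al <= B * s) by (apply (Rmult_le_reg_l (s ^ j)); auto; lra).
  assert (Ea : (al / (B + 1)) * (B + 1) = al) by (field; lra).
  assert (s * (B + 1) < al) by (rewrite <- Ea; apply Rmult_lt_compat_r; lra).
  nra.
Qed.

Lemma lemA (w : C -> C) (p : C -> R) j c N :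
  lead w j c -> (1 <= j)%nat -> (forall t, 0 <= p t) -> (j < N)%nat ->
  ~ (exists K del, 0 < del /\ forall t, Cmod t < del -> Rabs (fst (w t) + p t) <= K * Cmod t ^ N).
Proof.
  intros Hl Hj Hp HN Hb.
  assert (HjR : 0 < INR j) by (apply lt_0_INR; lia).
  assert (D : forall th, fst (Cmult c (Cpow (om th) j)) <= 0) by (intros; eapply lemA_dir; eauto; apply Cmod_om).
  pose proof (D 0) as D0. pose proof (D (PI / INR j)) as D1. pose proof (D (PI / 2 / INR j)) as D2.
  pose proof (D ((PI / 2 + PI) / INR j)) as D3.
  rewrite !om_pow in D0, D1, D2, D3.
  replace (INR j * 0) with 0 in D0 by ring.
  replace (INR j * (PI / INR j)) with PI in D1 by (field; lra).
  replace (INR j * (PI / 2 / INR j)) with (PI / 2) in D2 by (field; lra).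
  replace (INR j * ((PI / 2 + PI) / INR j)) with (PI / 2 + PI) in D3 by (field; lra).
  unfold om in *. rewrite cos_0, sin_0 in D0. rewrite cos_PI, sin_PI in D1. rewrite cos_PI2, sin_PI2 in D2.
  rewrite neg_cos, neg_sin in D3. rewrite cos_PI2, sin_PI2 in D3.
  unfold Cmult in *; simpl in *.
  destruct Hl as [Hc _]. apply Hc. apply injective_projections; simpl; lra.
Qed.

Lemma lemB (w : C -> C) (p : C -> R) L N c0 :
  bigO w (S L) -> (exists del, 0 < del /\ forall t, Cmod t < del -> c0 * Cmod t ^ L <= p t) -> 0 < c0 -> (L < N)%nat ->
  ~ (exists K del, 0 < del /\ forall t, Cmod t < del -> Rabs (fst (w t) + p t) <= K * Cmod t ^ N).
Proof.
  intros [Kw [dw [HKw [Hdw Hw]]]] [dp [Hdp Hpl]] Hc0 HLN [K [d [Hd H]]].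
  set (B := Rabs K + Kw).
  assert (HB : 0 <= B) by (unfold B; pose proof (Rabs_pos K); lra).
  destruct (small_choice d dw dp (c0 / (B + 1))) as [s [Hs [Hs1 [Hsd [Hsdw [Hsdp Hsc]]]]]]; auto.
  apply Rdiv_lt_0_compat; lra.
  set (t := RtoC s).
  assert (Hts : Cmod t = s) by (unfold t; rewrite Cmod_R, Rabs_right by lra; auto).
  specialize (H t ltac:(lra)). specialize (Hw t ltac:(lra)). specialize (Hpl t ltac:(lra)). rewrite Hts in *.
  pose proof (Cmod_fst (w t)). pose proof (Rle_abs (fst (w t) + p t)). pose proof (Rle_abs (- fst (w t))). rewrite Rabs_Ropp in H2.
  assert (Hsp : s ^ N <= s ^ S L) by (apply pow_le_mono; [lra|lia]).
  assert (K * s ^ N <= Rabs K * s ^ S L).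
  { eapply Rle_trans. apply Rmult_le_compat_r. apply pow_le; lra. apply Rle_abs. apply Rmult_le_compat_l; auto. apply Rabs_pos. }
  assert (F : c0 * s ^ L <= B * s ^ S L) by (unfold B; lra).
  simpl in F. pose proof (pow_lt s L Hs).
  assert (c0 <= B * s) by (apply (Rmult_le_reg_l (s ^ L)); auto; lra).
  assert (Ec : (c0 / (B + 1)) * (B + 1) = c0) by (field; lra).
  assert (s * (B + 1) < c0) by (rewrite <- Ec; apply Rmult_lt_compat_r; lra).
  nra.
Qed.
Lemma Cnorm2_eq x : Cnorm2 x = Cmod x ^ 2.
Proof.
  unfold Cnorm2, Cmod. rewrite pow2_sqrt. reflexivity.
  pose proof (pow2_ge_0 (fst x)). pose proof (pow2_ge_0 (snd x)). lra.
Qed.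

Definition gfun (v : C4) : C := Cminus (Cmult (Defs.c1 v) (Cmult (Defs.c1 v) (Cmult (Defs.c1 v) (RtoC 1)))) (Cmult (Defs.c3 v) (Defs.c2 v)).
Definition pfun (v : C4) : R := Cmod (gfun v) ^ 2 + (Cmod (Defs.c2 v) ^ 2) ^ 2.

Lemma r_split v : r_ex v = fst (Defs.c4 v) + pfun v.
Proof.
  unfold r_ex, pfun. rewrite !Cnorm2_eq. unfold gfun. simpl Defs.Cpow. rewrite Rplus_assoc. reflexivity.
Qed.

Lemma pfun_pos v : 0 <= pfun v.
Proof. unfold pfun. pose proof (pow2_ge_0 (Cmod (gfun v))). pose proof (pow2_ge_0 (Cmod (Defs.c2 v) ^ 2)). lra. Qed.

Lemma hol_comp z : Gamma0 z ->
  hol0 (fun t => Defs.c1 (z t)) /\ hol0 (fun t => Defs.c2 (z t)) /\ hol0 (fun t => Defs.c3 (z t)) /\ hol0 (fun t => Defs.c4 (z t)).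
Proof.
  intros [[rho [Hrho H]] _].
  repeat split; exists rho; split; auto; intros x Hx; destruct (H x Hx) as [A [B [Cc D]]]; auto.
Qed.

Lemma z0_comp z : Gamma0 z ->
  Defs.c1 (z (RtoC 0)) = RtoC 0 /\ Defs.c2 (z (RtoC 0)) = RtoC 0 /\ Defs.c3 (z (RtoC 0)) = RtoC 0 /\ Defs.c4 (z (RtoC 0)) = RtoC 0.
Proof.
  intros [_ [H _]]. change (RtoC 0) with C0. rewrite H. simpl. auto.
Qed.

Lemma ord_mono f k N : ord_ge f k -> (N <= k)%nat ->
  exists K del, 0 < del /\ forall t, Cmod t < del -> Rabs (f t) <= K * Cmod t ^ N.
Proof.
  intros [K [d [Hd H]]] HN. exists (Rabs K), (Rmin d 1). split. apply Rmin_pos; lra.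
  intros t Ht. pose proof (Rmin_l d 1). pose proof (Rmin_r d 1).
  eapply Rle_trans. apply H. unfold Cnorm. change (Cmod t < d). lra.
  change (Cnorm t) with (Cmod t).
  eapply Rle_trans. apply Rmult_le_compat_r. apply pow_le, Cmod_ge0. apply Rle_abs.
  apply Rmult_le_compat_l. apply Rabs_pos. apply pow_le_mono; [split; [apply Cmod_ge0|lra]|auto].
Qed.

Lemma u_bound z k N : ord_ge (fun t => r_ex (z t)) k -> (N <= k)%nat ->
  exists K del, 0 < del /\ forall t, Cmod t < del -> Rabs (fst (Defs.c4 (z t)) + pfun (z t)) <= K * Cmod t ^ N.
Proof.
  intros H HN. destruct (ord_mono _ k N H HN) as [K [d [Hd B]]]. exists K, d. split; auto.
  intros t Ht. rewrite <- r_split. apply B; auto.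
Qed.

Lemma C4norm_ge v : Cmod (Defs.c1 v) <= C4norm v /\ Cmod (Defs.c2 v) <= C4norm v /\ Cmod (Defs.c3 v) <= C4norm v /\ Cmod (Defs.c4 v) <= C4norm v.
Proof.
  unfold C4norm. change Cnorm with Cmod.
  pose proof (Cmod_ge0 (Defs.c1 v)). pose proof (Cmod_ge0 (Defs.c2 v)). pose proof (Cmod_ge0 (Defs.c3 v)). pose proof (Cmod_ge0 (Defs.c4 v)).
  repeat split; lra.
Qed.

Lemma vz_upper z m : vz_eq z m ->
  bigO (fun t => Defs.c1 (z t)) m /\ bigO (fun t => Defs.c2 (z t)) m /\ bigO (fun t => Defs.c3 (z t)) m /\ bigO (fun t => Defs.c4 (z t)) m.
Proof.
  intros [[K [d [Hd H]]] _].
  assert (B : forall t, Cmod t < d -> C4norm (z t) <= Rabs K * Cmod t ^ m).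
  { intros t Ht. specialize (H t Ht). change (Cnorm t) with (Cmod t) in H.
    rewrite Rabs_right in H. eapply Rle_trans. exact H. apply Rmult_le_compat_r. apply pow_le, Cmod_ge0. apply Rle_abs.
    destruct (C4norm_ge (z t)) as [A _]. pose proof (Cmod_ge0 (Defs.c1 (z t))). lra. }
  repeat split; exists (Rabs K), d; (split; [apply Rabs_pos|split; auto]); intros t Ht;
    destruct (C4norm_ge (z t)) as [A1 [A2 [A3 A4]]]; specialize (B t Ht); lra.
Qed.

Lemma vz_contra z m : vz_eq z m ->
  bigO (fun t => Defs.c1 (z t)) (S m) -> bigO (fun t => Defs.c2 (z t)) (S m) -> bigO (fun t => Defs.c3 (z t)) (S m) -> bigO (fun t => Defs.c4 (z t)) (S m) -> False.
Proof.
  intros [_ Hn] [K1 [d1 [HK1 [Hd1 H1]]]] [K2 [d2 [HK2 [Hd2 H2]]]] [K3 [d3 [HK3 [Hd3 H3]]]] [K4 [d4 [HK4 [Hd4 H4]]]].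
  apply Hn. exists (K1 + K2 + K3 + K4), (Rmin (Rmin d1 d2) (Rmin d3 d4)). split. repeat apply Rmin_pos; auto.
  intros t Ht. change (Cnorm t) with (Cmod t) in *.
  pose proof (Rmin_l (Rmin d1 d2) (Rmin d3 d4)). pose proof (Rmin_r (Rmin d1 d2) (Rmin d3 d4)).
  pose proof (Rmin_l d1 d2). pose proof (Rmin_r d1 d2). pose proof (Rmin_l d3 d4). pose proof (Rmin_r d3 d4).
  specialize (H1 t ltac:(lra)). specialize (H2 t ltac:(lra)). specialize (H3 t ltac:(lra)). specialize (H4 t ltac:(lra)).
  unfold C4norm. change Cnorm with Cmod.
  pose proof (Cmod_ge0 (Defs.c1 (z t))). pose proof (Cmod_ge0 (Defs.c2 (z t))). pose proof (Cmod_ge0 (Defs.c3 (z t))). pose proof (Cmod_ge0 (Defs.c4 (z t))).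
  rewrite Rabs_right by lra. lra.
Qed.

Lemma bigO_near f g N : (exists del, 0 < del /\ forall t, Cmod t < del -> f t = g t) -> bigO g N -> bigO f N.
Proof.
  intros [d [Hd E]] [K [d' [HK [Hd' H]]]]. exists K, (Rmin d d'). split; auto. split. apply Rmin_pos; auto.
  intros t Ht. pose proof (Rmin_l d d'). pose proof (Rmin_r d d'). rewrite E by lra. apply H. lra.
Qed.

Lemma bigO_zero N : bigO (fun _ => RtoC 0) N.
Proof. exists 0, 1. split. lra. split. lra. intros. rewrite Cmod_0. lra. Qed.

Lemma bigO_plus f g N : bigO f N -> bigO g N -> bigO (fun t => Cplus (f t) (g t)) N.
Proof.
  intros [K1 [d1 [HK1 [Hd1 H1]]]] [K2 [d2 [HK2 [Hd2 H2]]]]. exists (K1 + K2), (Rmin d1 d2).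
  split. lra. split. apply Rmin_pos; auto.
  intros t Ht. pose proof (Rmin_l d1 d2). pose proof (Rmin_r d1 d2).
  specialize (H1 t ltac:(lra)). specialize (H2 t ltac:(lra)).
  eapply Rle_trans. apply Cmod_triangle. lra.
Qed.

Lemma bigO_scale c f N : bigO f N -> bigO (fun t => Cmult c (f t)) N.
Proof.
  intros [K [d [HK [Hd H]]]]. exists (Cmod c * K), d. split. pose proof (Cmod_ge0 c). nra. split; auto.
  intros t Ht. rewrite Cmod_mult. specialize (H t Ht). pose proof (Cmod_ge0 c).
  rewrite Rmult_assoc. apply Rmult_le_compat_l; auto.
Qed.
Definition e3 : C4 := mkC4 C0 C0 (1, 0) C0.

Lemma lin_e3 v : lin e3 v = Defs.c3 v.
Proof.
  destruct v as [[a1 a2] [b1 b2] [d1 d2] [f1 f2]]. unfold lin, e3; simpl.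
  unfold Defs.Cadd, Defs.Cmul, C0; simpl. f_equal; ring.
Qed.

Lemma lin_eq h v : lin h v = Cplus (Cplus (Cmult (Defs.c1 h) (Defs.c1 v)) (Cmult (Defs.c2 h) (Defs.c2 v)))
                                (Cplus (Cmult (Defs.c3 h) (Defs.c3 v)) (Cmult (Defs.c4 h) (Defs.c4 v))).
Proof. reflexivity. Qed.

Lemma pow_mul_le a b n : 0 <= a <= b -> a ^ n <= b ^ n.
Proof. intros H. apply pow_incr. auto. Qed.

Lemma p_low_g z L c0 : 0 <= c0 ->
  (exists del, 0 < del /\ forall t, Cmod t < del -> c0 * Cmod t ^ L <= Cmod (gfun (z t))) ->
  exists del, 0 < del /\ forall t, Cmod t < del -> c0 ^ 2 * Cmod t ^ (2 * L) <= pfun (z t).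
Proof.
  intros Hc [d [Hd H]]. exists d. split; auto. intros t Ht. specialize (H t Ht).
  unfold pfun. pose proof (pow2_ge_0 (Cmod (Defs.c2 (z t)) ^ 2)).
  assert (c0 ^ 2 * Cmod t ^ (2 * L) = (c0 * Cmod t ^ L) ^ 2).
  { rewrite Rpow_mult_distr. rewrite <- pow_mult. f_equal. f_equal. lia. }
  rewrite H1. assert (0 <= c0 * Cmod t ^ L) by (apply Rmult_le_pos; auto; apply pow_le, Cmod_ge0).
  pose proof (pow_mul_le _ _ 2 (conj H2 H)). lra.
Qed.

Lemma p_low_z2 z j c : lead (fun t => Defs.c2 (z t)) j c ->
  exists del, 0 < del /\ forall t, Cmod t < del -> (Cmod c / 2) ^ 4 * Cmod t ^ (4 * j) <= pfun (z t).
Proof.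
  intros Hl. destruct (lead_lower _ _ _ Hl) as [d [Hd H]]. exists d. split; auto.
  intros t Ht. specialize (H t Ht). unfold pfun. pose proof (pow2_ge_0 (Cmod (gfun (z t)))).
  assert ((Cmod c / 2) ^ 4 * Cmod t ^ (4 * j) = (Cmod c / 2 * Cmod t ^ j) ^ 4).
  { rewrite Rpow_mult_distr. rewrite <- pow_mult. f_equal. f_equal. lia. }
  rewrite H1. assert (0 <= Cmod c / 2 * Cmod t ^ j).
  { apply Rmult_le_pos. pose proof (Cmod_ge0 c). lra. apply pow_le, Cmod_ge0. }
  pose proof (pow_mul_le _ _ 4 (conj H2 H)).
  replace ((Cmod (Defs.c2 (z t)) ^ 2) ^ 2) with (Cmod (Defs.c2 (z t)) ^ 4) by ring. lra.
Qed.

Lemma lead_cube_lower z j c : lead (fun t => Defs.c1 (z t)) j c ->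
  exists del, 0 < del /\ forall t, Cmod t < del ->
    (Cmod c / 2) ^ 3 * Cmod t ^ (3 * j) <= Cmod (Cmult (Defs.c1 (z t)) (Cmult (Defs.c1 (z t)) (Cmult (Defs.c1 (z t)) (RtoC 1)))).
Proof.
  intros Hl. destruct (lead_lower _ _ _ Hl) as [d [Hd H]]. exists d. split; auto.
  intros t Ht. specialize (H t Ht). rewrite !Cmod_mult, Cmod_1.
  assert ((Cmod c / 2) ^ 3 * Cmod t ^ (3 * j) = (Cmod c / 2 * Cmod t ^ j) ^ 3).
  { rewrite Rpow_mult_distr. rewrite <- pow_mult. f_equal. f_equal. lia. }
  rewrite H0. assert (0 <= Cmod c / 2 * Cmod t ^ j).
  { apply Rmult_le_pos. pose proof (Cmod_ge0 c). lra. apply pow_le, Cmod_ge0. }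
  pose proof (pow_mul_le _ _ 3 (conj H1 H)). simpl in H2. lra.
Qed.

Lemma c0_pos c n : c <> RtoC 0 -> 0 < (Cmod c / 2) ^ n.
Proof. intros H. apply pow_lt. pose proof (proj1 (Cmod_gt_0 c) H). lra. Qed.

Theorem partA z m k : Gamma0 z -> in_hyp e3 z -> vz_eq z m -> ord_ge (fun t => r_ex (z t)) k -> (k <= 6 * m)%nat.
Proof.
  intros HG Hh Hv Hk. destruct (Nat.le_gt_cases k (6 * m)) as [|Hlt]; auto. exfalso.
  destruct (hol_comp z HG) as [H1 [H2 [H3 H4]]]. destruct (z0_comp z HG) as [Z1 [Z2 [Z3 Z4]]].
  pose proof (u_bound z k (S (6 * m)) Hk ltac:(lia)) as ub.
  destruct Hh as [dh [Hdh Eh]].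
  assert (Z3n : forall t, Cmod t < dh -> Defs.c3 (z t) = RtoC 0).
  { intros t Ht. rewrite <- lin_e3. apply Eh. exact Ht. }
  destruct (dichotomy _ (6 * m) H4) as [B4 | [j [c [Hj Hl]]]].
  2:{ exact (lemA _ (fun t => pfun (z t)) j c (S (6 * m)) Hl (lead_j_pos _ _ _ Z4 Hl) (fun t => pfun_pos _) ltac:(lia) ub). }
  destruct (dichotomy _ m H1) as [B1 | [j1 [c1 [Hj1 Hl1]]]].
  2:{ apply (lemB (fun t => Defs.c4 (z t)) (fun t => pfun (z t)) (2 * (3 * j1)) (S (6 * m)) (((Cmod c1 / 2) ^ 3) ^ 2)); auto.
      - apply (bigO_mono _ (S (6 * m))); auto. lia.
      - apply p_low_g. pose proof (c0_pos c1 3 (proj1 Hl1)). lra.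
        destruct (lead_cube_lower z j1 c1 Hl1) as [d [Hd Hc]]. exists (Rmin d dh). split. apply Rmin_pos; auto.
        intros t Ht. pose proof (Rmin_l d dh). pose proof (Rmin_r d dh).
        unfold gfun. rewrite (Z3n t) by lra.
        replace (Cminus (Cmult (Defs.c1 (z t)) (Cmult (Defs.c1 (z t)) (Cmult (Defs.c1 (z t)) (RtoC 1)))) (Cmult (RtoC 0) (Defs.c2 (z t))))
          with (Cmult (Defs.c1 (z t)) (Cmult (Defs.c1 (z t)) (Cmult (Defs.c1 (z t)) (RtoC 1)))) by ring.
        apply Hc. lra.
      - pose proof (c0_pos c1 3 (proj1 Hl1)). apply pow_lt. lra.
      - lia. }
  destruct (dichotomy _ m H2) as [B2 | [j2 [c2 [Hj2 Hl2]]]].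
  2:{ apply (lemB (fun t => Defs.c4 (z t)) (fun t => pfun (z t)) (4 * j2) (S (6 * m)) ((Cmod c2 / 2) ^ 4)); auto.
      - apply (bigO_mono _ (S (6 * m))); auto. lia.
      - apply p_low_z2; auto.
      - apply c0_pos. apply Hl2.
      - lia. }
  apply (vz_contra z m Hv B1 B2).
  - apply (bigO_near _ (fun _ => RtoC 0)). exists dh. split; auto. apply bigO_zero.
  - apply (bigO_mono _ (S (6 * m))); auto. lia.
Qed.
Lemma gfun_lower z j1 c1 m K2 K3 d2 d3 :
  lead (fun t => Defs.c1 (z t)) j1 c1 -> (j1 <= m)%nat -> 0 <= K2 -> 0 <= K3 -> 0 < d2 -> 0 < d3 ->
  (forall t, Cmod t < d2 -> Cmod (Defs.c2 (z t)) <= K2 * Cmod t ^ (S (2 * m))) ->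
  (forall t, Cmod t < d3 -> Cmod (Defs.c3 (z t)) <= K3 * Cmod t ^ m) ->
  exists del, 0 < del /\ forall t, Cmod t < del -> (Cmod c1 / 2) ^ 3 / 2 * Cmod t ^ (3 * j1) <= Cmod (gfun (z t)).
Proof.
  intros Hl Hj HK2 HK3 Hd2 Hd3 B2 B3.
  destruct (lead_cube_lower z j1 c1 Hl) as [d [Hd Hc]].
  set (A := (Cmod c1 / 2) ^ 3).
  assert (HA : 0 < A) by (apply c0_pos; apply Hl).
  destruct (small_choice d d2 d3 (A / (2 * (K3 * K2 + 1)))) as [s [Hs [Hs1 [Hsd [Hsd2 [Hsd3 HsA]]]]]]; auto.
  apply Rdiv_lt_0_compat; nra.
  exists s. split; auto. intros t Ht.
  specialize (Hc t ltac:(lra)). specialize (B2 t ltac:(lra)). specialize (B3 t ltac:(lra)). fold A in Hc.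
  pose proof (Cmod_ge0 t) as Ht0.
  assert (Hz32 : Cmod (Cmult (Defs.c3 (z t)) (Defs.c2 (z t))) <= K3 * K2 * Cmod t * Cmod t ^ (3 * j1)).
  { rewrite Cmod_mult.
    assert (Cmod t ^ m * Cmod t ^ S (2 * m) <= Cmod t * Cmod t ^ (3 * j1)).
    { rewrite <- pow_add. replace (Cmod t * Cmod t ^ (3 * j1)) with (Cmod t ^ S (3 * j1)) by (simpl; ring).
      apply pow_le_mono. lra. lia. }
    pose proof (Cmod_ge0 (Defs.c3 (z t))). pose proof (Cmod_ge0 (Defs.c2 (z t))).
    pose proof (pow_le (Cmod t) m Ht0). pose proof (pow_le (Cmod t) (S (2 * m)) Ht0).
    apply Rle_trans with ((K3 * Cmod t ^ m) * (K2 * Cmod t ^ S (2 * m))).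
    apply Rmult_le_compat; auto.
    replace (K3 * Cmod t ^ m * (K2 * Cmod t ^ S (2 * m))) with ((K3 * K2) * (Cmod t ^ m * Cmod t ^ S (2 * m))) by ring.
    rewrite (Rmult_assoc (K3 * K2)). apply Rmult_le_compat_l. nra. auto. }
  assert (Hsm : K3 * K2 * Cmod t <= A / 2).
  { assert (Cmod t * (2 * (K3 * K2 + 1)) <= A).
    { assert (0 < 2 * (K3 * K2 + 1)) by nra.
      apply (Rmult_le_reg_r (/ (2 * (K3 * K2 + 1)))). apply Rinv_0_lt_compat; lra.
      rewrite Rmult_assoc, Rinv_r by lra. unfold Rdiv in HsA. lra. }
    nra. }
  pose proof (pow_le (Cmod t) (3 * j1) Ht0).
  assert (K3 * K2 * Cmod t * Cmod t ^ (3 * j1) <= A / 2 * Cmod t ^ (3 * j1)) by (apply Rmult_le_compat_r; auto).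
  unfold gfun.
  pose proof (Cmod_triangle (Cminus (Cmult (Defs.c1 (z t)) (Cmult (Defs.c1 (z t)) (Cmult (Defs.c1 (z t)) (RtoC 1)))) (Cmult (Defs.c3 (z t)) (Defs.c2 (z t))))
                            (Cmult (Defs.c3 (z t)) (Defs.c2 (z t)))) as T.
  replace (Cplus (Cminus (Cmult (Defs.c1 (z t)) (Cmult (Defs.c1 (z t)) (Cmult (Defs.c1 (z t)) (RtoC 1)))) (Cmult (Defs.c3 (z t)) (Defs.c2 (z t))))
                 (Cmult (Defs.c3 (z t)) (Defs.c2 (z t)))) with (Cmult (Defs.c1 (z t)) (Cmult (Defs.c1 (z t)) (Cmult (Defs.c1 (z t)) (RtoC 1)))) in T by ring.
  replace (A / 2) with (A * / 2) in H0 by reflexivity.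
  unfold Rdiv in *. lra.
Qed.

Lemma solve3 (a1 a2 a3 a4 x1 x2 x3 x4 : C) : a3 <> RtoC 0 ->
  Cplus (Cplus (Cmult a1 x1) (Cmult a2 x2)) (Cplus (Cmult a3 x3) (Cmult a4 x4)) = RtoC 0 ->
  x3 = Cmult (Copp (Cinv a3)) (Cplus (Cplus (Cmult a1 x1) (Cmult a2 x2)) (Cmult a4 x4)).
Proof.
  intros H3 E.
  transitivity (Cplus (Cmult (Copp (Cinv a3)) (Cplus (Cplus (Cmult a1 x1) (Cmult a2 x2)) (Cmult a4 x4)))
                      (Cmult (Cinv a3) (Cplus (Cplus (Cmult a1 x1) (Cmult a2 x2)) (Cplus (Cmult a3 x3) (Cmult a4 x4))))).
  field. auto. rewrite E. ring.
Qed.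

Theorem partB h z m k : Defs.c1 h <> RtoC 0 -> Defs.c3 h <> RtoC 0 -> Gamma0 z -> in_hyp h z -> vz_eq z m ->
  ord_ge (fun t => r_ex (z t)) k -> (k <= 8 * m)%nat.
Proof.
  intros Hh1 Hh3 HG Hh Hv Hk. destruct (Nat.le_gt_cases k (8 * m)) as [|Hlt]; auto. exfalso.
  destruct (hol_comp z HG) as [H1 [H2 [H3 H4]]]. destruct (z0_comp z HG) as [Z1 [Z2 [Z3 Z4]]].
  pose proof (u_bound z k (S (8 * m)) Hk ltac:(lia)) as ub.
  destruct (vz_upper z m Hv) as [U1 [U2 [U3 U4]]].
  destruct Hh as [dh [Hdh Eh]].
  assert (Z3eq : forall t, Cmod t < dh -> @eq C (Defs.c3 (z t))
     (Cmult (Copp (Cinv (Defs.c3 h))) (Cplus (Cplus (Cmult (Defs.c1 h) (Defs.c1 (z t))) (Cmult (Defs.c2 h) (Defs.c2 (z t)))) (Cmult (Defs.c4 h) (Defs.c4 (z t)))))).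
  { intros t Ht. specialize (Eh t Ht). rewrite lin_eq in Eh. apply solve3; auto. }
  destruct (dichotomy _ (8 * m) H4) as [B4 | [j [c [Hj Hl]]]].
  2:{ exact (lemA _ (fun t => pfun (z t)) j c (S (8 * m)) Hl (lead_j_pos _ _ _ Z4 Hl) (fun t => pfun_pos _) ltac:(lia) ub). }
  destruct (dichotomy _ (2 * m) H2) as [B2 | [j2 [c2 [Hj2 Hl2]]]].
  2:{ apply (lemB (fun t => Defs.c4 (z t)) (fun t => pfun (z t)) (4 * j2) (S (8 * m)) ((Cmod c2 / 2) ^ 4)); auto.
      - apply (bigO_mono _ (S (8 * m))); auto. lia.
      - apply p_low_z2; auto.
      - apply c0_pos. apply Hl2.
      - lia. }
  destruct (dichotomy _ m H1) as [B1 | [j1 [c1 [Hj1 Hl1]]]].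
  2:{ destruct B2 as [K2 [d2 [HK2 [Hd2 B2']]]]. destruct U3 as [K3 [d3 [HK3 [Hd3 U3']]]].
      apply (lemB (fun t => Defs.c4 (z t)) (fun t => pfun (z t)) (2 * (3 * j1)) (S (8 * m)) (((Cmod c1 / 2) ^ 3 / 2) ^ 2)); auto.
      - apply (bigO_mono _ (S (8 * m))); auto. lia.
      - apply p_low_g. pose proof (c0_pos c1 3 (proj1 Hl1)). lra.
        apply (gfun_lower z j1 c1 m K2 K3 d2 d3); auto.
      - pose proof (c0_pos c1 3 (proj1 Hl1)). apply pow_lt. lra.
      - lia. }
  apply (vz_contra z m Hv B1).
  - apply (bigO_mono _ (S (2 * m))); auto. lia.
  - apply (bigO_near _ _ (S m) (ex_intro _ dh (conj Hdh Z3eq))).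
    apply bigO_scale. apply bigO_plus. apply bigO_plus.
    + apply bigO_scale. auto.
    + apply bigO_scale. apply (bigO_mono _ (S (2 * m))); auto. lia.
    + apply bigO_scale. apply (bigO_mono _ (S (8 * m))); auto. lia.
  - apply (bigO_mono _ (S (8 * m))); auto. lia.
Qed.
Lemma Gamma0_of (z : C -> C4) :
  (forall t, exists d, cdiff (fun s => Defs.c1 (z s)) t d) ->
  (forall t, exists d, cdiff (fun s => Defs.c2 (z s)) t d) ->
  (forall t, exists d, cdiff (fun s => Defs.c3 (z s)) t d) ->
  (forall t, exists d, cdiff (fun s => Defs.c4 (z s)) t d) ->
  z C0 = C4zero -> (exists c, 0 < c /\ forall t, c * Cmod t <= C4norm (z t)) -> Gamma0 z.
Proof.
  intros D1 D2 D3 D4 Z [c [Hc Hl]]. split; [|split; auto].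
  - exists 1. split. lra. intros t _. repeat split; [apply D1|apply D2|apply D3|apply D4].
  - intros [d [Hd H]]. specialize (H (RtoC (d / 2))). change Cnorm with Cmod in H.
    rewrite Cmod_R, Rabs_right in H by lra. specialize (H ltac:(lra)).
    specialize (Hl (RtoC (d / 2))). rewrite H in Hl. rewrite Cmod_R, Rabs_right in Hl by lra.
    unfold C4norm, C4zero in Hl; simpl in Hl. change Cnorm with Cmod in Hl. change C0 with (RtoC 0) in Hl.
    rewrite Cmod_0 in Hl. nra.
Qed.

Lemma vz_of (z : C -> C4) : (exists c, 0 < c /\ forall t, c * Cmod t <= C4norm (z t)) ->
  (exists K, forall t, Cmod t < 1 -> C4norm (z t) <= K * Cmod t) -> vz_eq z 1.
Proof.
  intros [c [Hc Hl]] [K HK]. split.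
  - exists K, 1. split. lra. intros t Ht. change Cnorm with Cmod in *. simpl. rewrite Rmult_1_r.
    rewrite Rabs_right. apply HK; auto. pose proof (Hl t). pose proof (Cmod_ge0 t). nra.
  - intros [K2 [d [Hd H]]].
    set (B := Rabs K2 + 1).
    destruct (small_choice d (c / B) 1 1) as [s [Hs [Hs1 [Hsd [HsB _]]]]]; try lra.
    apply Rdiv_lt_0_compat; unfold B; pose proof (Rabs_pos K2); lra.
    specialize (H (RtoC s)). change Cnorm with Cmod in H. rewrite Cmod_R, Rabs_right in H by lra.
    specialize (H Hsd). specialize (Hl (RtoC s)). rewrite Cmod_R, Rabs_right in Hl by lra.
    rewrite Rabs_right in H by (pose proof (Rabs_pos K2); nra).
    assert (K2 * s ^ 2 <= Rabs K2 * s ^ 2) by (apply Rmult_le_compat_r; [apply pow_le; lra|apply Rle_abs]).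
    assert (c <= Rabs K2 * s) by (simpl in *; apply (Rmult_le_reg_r s); lra).
    assert (s * B < c).
    { apply (Rmult_lt_reg_r (/ B)). apply Rinv_0_lt_compat; unfold B; pose proof (Rabs_pos K2); lra.
      rewrite Rmult_assoc, Rinv_r by (unfold B; pose proof (Rabs_pos K2); lra). unfold Rdiv in HsB. lra. }
    unfold B in H2. nra.
Qed.

Lemma ord_r_curve (z : C -> C4) k (G Bc : C) (a b : nat) :
  (forall t, fst (Defs.c4 (z t)) = 0) -> (forall t, gfun (z t) = Cmult G (Cpow t a)) ->
  (forall t, Defs.c2 (z t) = Cmult Bc (Cpow t b)) -> (k <= 2 * a)%nat -> (k <= 4 * b)%nat ->
  ord_ge (fun t => r_ex (z t)) k.
Proof.
  intros H4 Hg H2 Ha Hb. exists (Cmod G ^ 2 + Cmod Bc ^ 4), 1. split. lra.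
  intros t Ht. change Cnorm with Cmod in *. rewrite r_split, H4. unfold pfun. rewrite Hg, H2.
  rewrite !Cmod_mult, !Cmod_pow.
  pose proof (Cmod_ge0 t). pose proof (Cmod_ge0 G). pose proof (Cmod_ge0 Bc).
  assert (E1 : (Cmod G * Cmod t ^ a) ^ 2 = Cmod G ^ 2 * Cmod t ^ (2 * a)).
  { rewrite Rpow_mult_distr, <- pow_mult. f_equal. f_equal. lia. }
  assert (E2 : ((Cmod Bc * Cmod t ^ b) ^ 2) ^ 2 = Cmod Bc ^ 4 * Cmod t ^ (4 * b)).
  { rewrite <- pow_mult, Rpow_mult_distr, <- pow_mult. f_equal. f_equal. lia. }
  rewrite E1, E2.
  assert (Cmod t ^ (2 * a) <= Cmod t ^ k) by (apply pow_le_mono; [lra|lia]).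
  assert (Cmod t ^ (4 * b) <= Cmod t ^ k) by (apply pow_le_mono; [lra|lia]).
  assert (0 <= Cmod G ^ 2) by (apply pow_le; lra). assert (0 <= Cmod Bc ^ 4) by (apply pow_le; lra).
  assert (0 <= Cmod t ^ (2 * a)) by (apply pow_le; lra). assert (0 <= Cmod t ^ (4 * b)) by (apply pow_le; lra).
  rewrite Rplus_0_l. rewrite Rabs_right by nra. nra.
Qed.

Lemma Delta1_ge_of inH (a : R) (z : C -> C4) k :
  Gamma0 z -> inH z -> vz_eq z 1 -> ord_ge (fun t => r_ex (z t)) k -> a <= INR k -> Delta1_ge r_ex inH a.
Proof.
  intros HG Hh Hv Hk Ha eps Heps. exists z, 1%nat, k. refine (conj HG (conj Hh (conj Hv (conj Hk _)))).
  simpl. replace (INR k / 1) with (INR k) by field. lra.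
Qed.

Lemma cdiff_lin (a : C) t : cdiff (fun s => Cmult a s) t a.
Proof. eapply cdiff_eq_d. 2: apply cdiff_cmul, cdiff_id. ring. Qed.

Lemma cdiff_quadm (a b : C) t : exists d, cdiff (fun s => Cplus (Cmult a s) (Cmult b (Cmult s s))) t d.
Proof. eexists. apply cdiff_plus. apply cdiff_lin. apply cdiff_cmul, cdiff_mult; apply cdiff_id. Qed.

Lemma cdiff_zero t : exists d, cdiff (fun _ => RtoC 0) t d.
Proof. eexists. apply cdiff_const. Qed.

Lemma Ceq_ri (x y : C) : fst x = fst y -> snd x = snd y -> x = y.
Proof. intros. apply injective_projections; auto. Qed.

Definition curveA0 (t : C) : C4 := mkC4 t (RtoC 0) (RtoC 0) (RtoC 0).
Definition curveA1 (h : C4) (t : C) : C4 :=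
  mkC4 (Cmult (Copp (Defs.c3 h)) t) (RtoC 0) (Cmult (Defs.c1 h) t) (RtoC 0).

Lemma ge6 h : h <> C4zero -> Delta1_ge r_ex (in_hyp h) 6.
Proof.
  intros Hh. destruct (Ceq_dec (Defs.c1 h) (RtoC 0)) as [E|E].
  - apply (Delta1_ge_of _ 6 curveA0 6).
    + apply Gamma0_of; intros; unfold curveA0; simpl.
      * eexists. apply cdiff_id.
      * apply cdiff_zero. * apply cdiff_zero. * apply cdiff_zero.
      * reflexivity.
      * exists 1. split. lra. intros t. unfold C4norm, curveA0; simpl. change Cnorm with Cmod. rewrite Cmod_0. lra.
    + exists 1. split. lra. intros t _. rewrite lin_eq. simpl. rewrite E. apply Ceq_ri; simpl; ring.
    + apply vz_of.
      * exists 1. split. lra. intros t. unfold C4norm, curveA0; simpl. change Cnorm with Cmod. rewrite Cmod_0. lra.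
      * exists 1. intros t _. unfold C4norm, curveA0; simpl. change Cnorm with Cmod. rewrite Cmod_0. lra.
    + apply (ord_r_curve _ 6 (RtoC 1) (RtoC 0) 3 2); intros; unfold curveA0, gfun; simpl; try reflexivity; try lia.
      apply Ceq_ri; simpl; ring. apply Ceq_ri; simpl; ring.
    + simpl. lra.
  - apply (Delta1_ge_of _ 6 (curveA1 h) 6).
    + apply Gamma0_of; intros; unfold curveA1; simpl.
      * eexists. apply cdiff_lin. * apply cdiff_zero. * eexists. apply cdiff_lin. * apply cdiff_zero.
      * unfold C4zero. f_equal; apply Ceq_ri; simpl; ring.
      * exists (Cmod (Defs.c1 h)). split. apply Cmod_gt_0; auto.
        intros t. unfold C4norm, curveA1; simpl. change Cnorm with Cmod. rewrite !Cmod_mult, Cmod_0.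
        pose proof (Cmod_ge0 (Copp (Defs.c3 h))). pose proof (Cmod_ge0 t). nra.
    + exists 1. split. lra. intros t _. rewrite lin_eq. simpl. apply Ceq_ri; simpl; ring.
    + apply vz_of.
      * exists (Cmod (Defs.c1 h)). split. apply Cmod_gt_0; auto.
        intros t. unfold C4norm, curveA1; simpl. change Cnorm with Cmod. rewrite !Cmod_mult, Cmod_0.
        pose proof (Cmod_ge0 (Copp (Defs.c3 h))). pose proof (Cmod_ge0 t). nra.
      * exists (Cmod (Copp (Defs.c3 h)) + Cmod (Defs.c1 h)). intros t _. unfold C4norm, curveA1; simpl. change Cnorm with Cmod.
        rewrite !Cmod_mult, Cmod_0. lra.
    + apply (ord_r_curve _ 6 (Cpow (Copp (Defs.c3 h)) 3) (RtoC 0) 3 2); intros; unfold curveA1, gfun; simpl; try reflexivity; try lia.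
      apply Ceq_ri; simpl; ring. apply Ceq_ri; simpl; ring.
    + simpl. lra.
Qed.
Section CurveG.
Variable h : C4.
Definition hA := Cmult (Defs.c1 h) (Defs.c3 h).
Definition hB := Copp (Cmult (Defs.c1 h) (Cmult (Defs.c3 h) (Cmult (Defs.c3 h) (Defs.c3 h)))).
Definition hD := Copp (Cmult (Defs.c1 h) (Defs.c1 h)).
Definition hE := Cmult (Defs.c2 h) (Cmult (Defs.c1 h) (Cmult (Defs.c3 h) (Defs.c3 h))).
Definition curveG (t : C) : C4 :=
  mkC4 (Cmult hA t) (Cmult hB (Cmult t t)) (Cplus (Cmult hD t) (Cmult hE (Cmult t t))) (RtoC 0).
End CurveG.

Lemma gG (h1 h2 h3 t : C) :
  Cminus (Cmult (Cmult (Cmult h1 h3) t) (Cmult (Cmult (Cmult h1 h3) t) (Cmult (Cmult (Cmult h1 h3) t) (RtoC 1))))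
         (Cmult (Cplus (Cmult (Copp (Cmult h1 h1)) t) (Cmult (Cmult h2 (Cmult h1 (Cmult h3 h3))) (Cmult t t)))
                (Cmult (Copp (Cmult h1 (Cmult h3 (Cmult h3 h3)))) (Cmult t t)))
  = Cmult (Copp (Cmult (Cmult h2 (Cmult h1 (Cmult h3 h3))) (Copp (Cmult h1 (Cmult h3 (Cmult h3 h3)))))) (Cpow t 4).
Proof. simpl. ring. Qed.

Lemma linG (h1 h2 h3 h4 t : C) :
  Cplus (Cplus (Cmult h1 (Cmult (Cmult h1 h3) t)) (Cmult h2 (Cmult (Copp (Cmult h1 (Cmult h3 (Cmult h3 h3)))) (Cmult t t))))
        (Cplus (Cmult h3 (Cplus (Cmult (Copp (Cmult h1 h1)) t) (Cmult (Cmult h2 (Cmult h1 (Cmult h3 h3))) (Cmult t t)))) (Cmult h4 (RtoC 0)))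
  = RtoC 0.
Proof. ring. Qed.

Lemma ge8 h : Defs.c1 h <> RtoC 0 -> Defs.c3 h <> RtoC 0 -> Delta1_ge r_ex (in_hyp h) 8.
Proof.
  intros H1 H3.
  assert (HA : hA h <> RtoC 0) by (unfold hA; apply Cmult_neq_0; auto).
  assert (HAp : 0 < Cmod (hA h)) by (apply Cmod_gt_0; auto).
  assert (Hlow : exists c, 0 < c /\ forall t, c * Cmod t <= C4norm (curveG h t)).
  { exists (Cmod (hA h)). split; auto. intros t. unfold C4norm, curveG; simpl. change Cnorm with Cmod.
    rewrite (Cmod_mult (hA h) t).
    pose proof (Cmod_ge0 (Cmult (hB h) (Cmult t t))). pose proof (Cmod_ge0 (Cplus (Cmult (hD h) t) (Cmult (hE h) (Cmult t t)))).
    pose proof (Cmod_ge0 (RtoC 0)). lra. }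
  apply (Delta1_ge_of _ 8 (curveG h) 8).
  - apply Gamma0_of; auto; intros; unfold curveG; simpl.
    + eexists. apply cdiff_lin.
    + eexists. apply cdiff_cmul, cdiff_mult; apply cdiff_id.
    + apply cdiff_quadm.
    + apply cdiff_zero.
    + unfold C4zero. f_equal; apply Ceq_ri; simpl; ring.
  - exists 1. split. lra. intros t _. rewrite lin_eq. unfold curveG, hA, hB, hD, hE; simpl. apply linG.
  - apply vz_of; auto.
    exists (Cmod (hA h) + Cmod (hB h) + Cmod (hD h) + Cmod (hE h)). intros t Ht. unfold C4norm, curveG; simpl. change Cnorm with Cmod.
    pose proof (Cmod_ge0 t). pose proof (Cmod_ge0 (hB h)). pose proof (Cmod_ge0 (hD h)). pose proof (Cmod_ge0 (hE h)).
    rewrite Cmod_0. pose proof (Cmod_triangle (Cmult (hD h) t) (Cmult (hE h) (Cmult t t))).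
    rewrite !Cmod_mult in *.
    assert (Cmod t * Cmod t <= Cmod t) by nra.
    assert (Cmod (hB h) * (Cmod t * Cmod t) <= Cmod (hB h) * Cmod t) by (apply Rmult_le_compat_l; lra).
    assert (Cmod (hE h) * (Cmod t * Cmod t) <= Cmod (hE h) * Cmod t) by (apply Rmult_le_compat_l; lra).
    nra.
  - apply (ord_r_curve _ 8 (Copp (Cmult (hE h) (hB h))) (hB h) 4 2); intros; try lia.
    + unfold curveG; simpl. reflexivity.
    + unfold gfun, curveG, hA, hB, hD, hE; simpl Defs.c1; simpl Defs.c2; simpl Defs.c3. apply gG.
    + unfold curveG; simpl. apply Ceq_ri; simpl; ring.
  - simpl. lra.
Qed.

Definition Pgen : poly4 := cons ((1, 0) : Defs.C, (1%nat, 0%nat, 1%nat, 0%nat)) nil.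

Lemma Pgen_eval h : poly4_eval Pgen h = Cmult (Defs.c1 h) (Defs.c3 h).
Proof. apply Ceq_ri; unfold Pgen, poly4_eval, mono_eval; simpl; ring. Qed.

Theorem mainTheorem10 :
  Delta2_eq r_ex 6 /\ generic_Delta1_eq r_ex 8 /\ 6 < 8.
Proof.
  split; [|split].
  - split.
    + intros h Hh. apply ge6; auto.
    + intros eps Heps. exists e3. split.
      * intros E. apply (f_equal Defs.c3) in E. unfold e3, C4zero in E; simpl in E. injection E. lra.
      * intros z m k HG Hh Hv Hk. pose proof (partA z m k HG Hh Hv Hk).
        apply le_INR in H. rewrite mult_INR in H. simpl in H. pose proof (pos_INR m). nra.
  - exists Pgen. split.
    + exists (mkC4 (1,0) (1,0) (1,0) (1,0)). rewrite Pgen_eval. simpl. intros E. injection E. lra.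
    + intros h Hh HP. rewrite Pgen_eval in HP.
      assert (H1 : Defs.c1 h <> RtoC 0) by (intros E; apply HP; rewrite E; apply Ceq_ri; simpl; ring).
      assert (H3 : Defs.c3 h <> RtoC 0) by (intros E; apply HP; rewrite E; apply Ceq_ri; simpl; ring).
      split.
      * apply ge8; auto.
      * intros z m k HG Hhz Hv Hk. pose proof (partB h z m k H1 H3 HG Hhz Hv Hk).
        apply le_INR in H. rewrite mult_INR in H. simpl in H. lra.
  - lra.
Qed.
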